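(* Assume Conditions A, B, C and D, let $G_0=g_0-F_0^*\zeta$, and for $n\in\mathbb N$ let $G_n=G_0/(1+\frac1n h(G_0))$. Then $G_n\in\mathcal D$ for every $n$.
   Context: Setting. $\mathcal I=(a,b)$, $-\infty\le a<b\le\infty$; $\mu,\sigma$ continuous on $\mathcal I$, $\sigma\neq0$; $X_0$ the regular diffusion $dX_0=\mu(X_0)dt+\sigma(X_0)dW$, $X_0(0)=x_0\in\mathcal I$. Scale density $s(x)=\exp(-\int^x2\mu/\sigma^2)$, scale function $S=\int s$, $S[y,z]=S(z)-S(y)$ ($dS$), speed density $m=1/(\sigma^2s)$, speed measure $M[y,z]=\int_y^z m$ ($dM$). Feller boundary classification; regular boundaries are reflecting or sticky; attainable means regular or exit. Condition A: $S(a,x]<\infty$, $S[x,b)=\infty$ for $x\in\mathcal I$ (so $a$ is regular/exit/natural, $b$ natural/entrance); if $a$ reflecting, $\lim_{x\to a}s(x)M[x,b)<\infty$; if $b$ natural, $M[y,b)<\infty$ for $y\in\mathcal I$; infinite boundaries are natural. $\mathcal E$ is $\mathcal I$ with $a$ added if attainable and $b$ added if entrance; $\overline{\mathcal E}$ its closure in $\mathbb R$; $\mathcal R=\{(y,z)\in\mathcal E^2:y<z\}$, $\overline{\mathcal R}=\{(y,z)\in\mathcal E^2:y\le z\}$. Condition B: (a) $c_0:\mathcal E\to[0,\infty)$ continuous; at natural boundaries $c_0(a)=\lim_{x\to a}c_0(x)$, $c_0(b)=\lim_{x\to b}c_0(x)$ exist in $[0,\infty]$, with $c_0(\pm\infty)=\infty$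 at infinite boundaries; $\int_y^bc_0\,dM<\infty$ for $y\in\mathcal I$; if $a$ reflecting, $\lim_{x\to a}s(x)\int_x^bc_0\,dM<\infty$. (b) $c_1:\overline{\mathcal R}\to[0,\infty]$ continuous, $c_1\ge k_1>0$, $c_1(\cdot,z)$ is $C^1$ near $a$ for $z\in\mathcal E\setminus\{a\}$, $c_1(y,\cdot)$ is $C^1$ near $b$ for $y\in\mathcal E\setminus\{b\}$. Operators: $Af=\frac{\sigma^2}{2}f''+\mu f'$, $Bf(y,z)=f(z)-f(y)$. Functions: $g_0(x)=\int_{x_0}^x\int_u^b2c_0\,dM\,dS(u)$, $\zeta(x)=\int_{x_0}^x2M[u,b)\,dS(u)$. $F_0(y,z)=\frac{c_1(y,z)+Bg_0(y,z)}{B\zeta(y,z)}$ on $\mathcal R$, $F_0(y,y)=\infty$, $F_0^*=\inf_{\overline{\mathcal R}}F_0$. Condition C: (a) $a$ is regular or exit, or $a$ is natural and either (i) $c_0(a)=\infty$, or (ii) $c_0(a)<\infty$, for each $z\in\mathcal E$ there is $y_z>a$ with $\frac{-\partial_yc_1(y,z)+g_0'(y)}{\zeta'(y)}>F_0(y,z)$ for $a<y<y_z$, and some $(\hat y,\hat z)\in\mathcal R$ has $F_0(\hat y,\hat z)<c_0(a)$; (b) $b$ is entrance, or $b$ is natural and either (i) $c_0(b)=\infty$, or (ii) $c_0(b)<\infty$, for each $y\in\mathcal E$ there is $z_y<b$ with $\frac{\partial_zc_1(y,z)+g_0'(z)}{\zeta'(z)}>F_0(y,z)$ for $z_y<z<b$,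 and some $(\tilde y,\tilde z)\in\mathcal R$ has $F_0(\tilde y,\tilde z)<c_0(b)$. Under Condition C, $G_0=g_0-F_0^*\zeta$ has limits $G_0(a),G_0(b)$ in $[-\infty,\infty]$. Condition D: (a) there are $L<\infty$, $y_1>a$ with (i) if $c_0(a)=\infty$: $\frac{c_0}{(1+|G_0|)^2}+\frac{(\sigma G_0')^2}{(1+|G_0|)^3}\le L$ on $(a,y_1)$; (ii) if $c_0(a)<\infty$: for some $\epsilon\in(0,1)$, $\frac{(\sigma G_0')^2}{(1+|G_0|)^{2+\epsilon}}\le L$ on $[a,y_1)$ (including the boundary limit); (b) there are $L<\infty$, $z_1<b$ with (i) if $c_0(b)=\infty$: $\frac{c_0}{(1+|G_0|)^2}+\frac{(\sigma G_0')^2}{(1+|G_0|)(1+c_0)}\le L$ on $(z_1,b)$; (ii) if $c_0(b)<\infty$: for some $\epsilon\in(0,1)$, $\frac{(\sigma G_0')^2}{(1+|G_0|)^{2+\epsilon}}+\frac{(\sigma G_0')^2}{(1+|G_0|)(1+c_0)}\le L$ on $(z_1,b]$; (c) if $G_0(a)>-\infty$, or $a$ is sticky with $c_0(a)<\infty$, then $\lim_{x\to a}\sigma(x)G_0'(x)$ exists and is finite; if $G_0(b)<\infty$ then $\lim_{x\to b}\sigma(x)G_0'(x)$ exists and is finite. Class $\mathcal D$: $f\in C(\overline{\mathcal E})\cap C^2(\mathcal I)$ such that for some $L_f<\infty$: $|f|\le L_f$, $(\sigma f')^2\le L_f(1+c_0)$, $|Af|\le L_f$; at each boundary where $c_0$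 is finite, $Af$ extends continuously to a finite value; if $a$ is reflecting, $|f'(a)|<\infty$; if $a$ is sticky and $c_0(a)<\infty$, $\sigma f'$ extends continuously at $a$ to a finite value. The function $h:\mathbb R\to\mathbb R$ is $h(x)=-\frac18x^4+\frac34x^2+\frac38$ for $|x|\le1$ and $h(x)=|x|$ for $|x|\ge1$. *)

(* Defs.v *)
From Stdlib Require Import Reals Lra ClassicalEpsilon.
Open Scope R_scope.

Inductive ereal : Type := Fin (r : R) | PInf | NInf.

Definition ereal_lt (x y : ereal) : Prop :=
  match x, y with
  | Fin u, Fin v => u < v
  | NInf, Fin _ | NInf, PInf | Fin _, PInf => True
  | _, _ => False
  end.
Definition ereal_le (x y : ereal) : Prop := ereal_lt x y \/ x = y.
Definition isfin (x : ereal) : Prop := exists r, x = Fin r.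
Definition real_of (x : ereal) : R := match x with Fin r => r | _ => 0 end.

(* Riemann integral int_y^z f (oriented); 0 if f is not Riemann integrable there. *)
Definition RInt (f : R -> R) (y z : R) : R :=
  match excluded_middle_informative (inhabited (Riemann_integrable f y z)) with
  | left H => RiemannInt (epsilon H (fun _ => True))
  | right _ => 0
  end.

Definition Dv (f : R -> R) (x : R) : R :=
  epsilon (inhabits 0) (fun d => derivable_pt_lim f x d).

Definition rderiv (U : R -> Prop) (f : R -> R) (y d : R) : Prop :=
  forall eps, 0 < eps -> exists delta, 0 < delta /\
    forall h, h <> 0 -> Rabs h < delta -> U (y + h) ->
      Rabs ((f (y + h) - f y) / h - d) < eps.

Definition relcont (U : R -> Prop) (f : R -> R) : Prop :=
  forall x, U x -> forall eps, 0 < eps -> exists delta, 0 < delta /\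
    forall y, U y -> Rabs (y - x) < delta -> Rabs (f y - f x) < eps.

Definition C1_on (U : R -> Prop) (f : R -> R) : Prop :=
  exists f', (forall y, U y -> rderiv U f y (f' y)) /\ relcont U f'.

Definition cont2e (U2 : R -> R -> Prop) (g : R -> R -> ereal) : Prop :=
  forall y z, U2 y z ->
  match g y z with
  | Fin v => forall eps, 0 < eps -> exists delta, 0 < delta /\
      forall y' z', U2 y' z' -> Rabs (y' - y) < delta -> Rabs (z' - z) < delta ->
        exists w, g y' z' = Fin w /\ Rabs (w - v) < eps
  | PInf => forall K, exists delta, 0 < delta /\
      forall y' z', U2 y' z' -> Rabs (y' - y) < delta -> Rabs (z' - z) < delta ->
        ereal_lt (Fin K) (g y' z')
  | NInf => forall K, exists delta, 0 < delta /\
      forall y' z', U2 y' z' -> Rabs (y' - y) < delta -> Rabs (z' - z) < delta ->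
        ereal_lt (g y' z') (Fin K)
  end.

Inductive btype : Type := Regular | Exit | Entrance | Natural.
(* Sg = Sigma-integral (finite iff attainable), N = N-integral *)
Definition btype_of (Sg N : ereal) : btype :=
  match Sg, N with
  | Fin _, Fin _ => Regular
  | Fin _, _ => Exit
  | _, Fin _ => Entrance
  | _, _ => Natural
  end.

Definition hfun (x : R) : R :=
  if Rle_dec (Rabs x) 1 then - / 8 * x ^ 4 + 3 / 4 * x ^ 2 + 3 / 8 else Rabs x.

Section Setting.
Variables (a b : ereal) (mu sigma : R -> R) (x0 : R) (stickya : bool).

Definition inI (x : R) : Prop := ereal_lt a (Fin x) /\ ereal_lt (Fin x) b.

Definition near_a (P : R -> Prop) : Prop :=
  exists y, inI y /\ forall x, inI x -> x < y -> P x.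
Definition near_b (P : R -> Prop) : Prop :=
  exists y, inI y /\ forall x, inI x -> y < x -> P x.

Definition lim_a (f : R -> R) (l : ereal) : Prop :=
  match l with
  | Fin r => forall eps, 0 < eps -> near_a (fun x => Rabs (f x - r) < eps)
  | PInf => forall K, near_a (fun x => K < f x)
  | NInf => forall K, near_a (fun x => f x < K)
  end.
Definition lim_b (f : R -> R) (l : ereal) : Prop :=
  match l with
  | Fin r => forall eps, 0 < eps -> near_b (fun x => Rabs (f x - r) < eps)
  | PInf => forall K, near_b (fun x => K < f x)
  | NInf => forall K, near_b (fun x => f x < K)
  end.
Definition limval_a (f : R -> R) : ereal := epsilon (inhabits PInf) (lim_a f).
Definition limval_b (f : R -> R) : ereal := epsilon (inhabits PInf) (lim_b f).

(* improper integrals int_a^x f and int_y^b f (used for nonnegative f only) *)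
Definition IntA (f : R -> R) (x : R) : ereal := limval_a (fun y => RInt f y x).
Definition IntB (f : R -> R) (y : R) : ereal := limval_b (fun z => RInt f y z).

Definition sdens (x : R) : R :=
  exp (- RInt (fun u => 2 * mu u / (sigma u) ^ 2) x0 x).
Definition mdens (x : R) : R := 1 / ((sigma x) ^ 2 * sdens x).

Definition Sigma_a : ereal := IntA (fun u => RInt mdens u x0 * sdens u) x0.
Definition N_a : ereal := IntA (fun u => RInt sdens u x0 * mdens u) x0.
Definition Sigma_b : ereal := IntB (fun u => RInt mdens x0 u * sdens u) x0.
Definition N_b : ereal := IntB (fun u => RInt sdens x0 u * mdens u) x0.
Definition cls_a : btype := btype_of Sigma_a N_a.
Definition cls_b : btype := btype_of Sigma_b N_b.

Definition attainable_a : Prop := cls_a = Regular \/ cls_a = Exit.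
Definition reflecting_a : Prop := cls_a = Regular /\ stickya = false.
Definition sticky_a : Prop := cls_a = Regular /\ stickya = true.

Definition inE (x : R) : Prop :=
  inI x \/ (a = Fin x /\ attainable_a) \/ (b = Fin x /\ cls_b = Entrance).
Definition inEbar (x : R) : Prop := ereal_le a (Fin x) /\ ereal_le (Fin x) b.
Definition inRbar (y z : R) : Prop := inE y /\ inE z /\ y <= z.

(* value at a point of Ebar of a function given on I (boundary values = limits) *)
Definition valE (f : R -> R) (x : R) : R :=
  match excluded_middle_informative (inI x) with
  | left _ => f x
  | right _ =>
      match excluded_middle_informative (a = Fin x) with
      | left _ => real_of (limval_a f)
      | right _ => real_of (limval_b f)
      end
  end.

Definition Condition_A : Prop :=
  (forall x, inI x -> isfin (IntA sdens x)) /\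
  (forall x, inI x -> IntB sdens x = PInf) /\
  (reflecting_a -> exists r, lim_a (fun x => sdens x * real_of (IntB mdens x)) (Fin r)) /\
  (cls_b = Natural -> forall y, inI y -> isfin (IntB mdens y)) /\
  (a = NInf -> cls_a = Natural) /\ (b = PInf -> cls_b = Natural).

Variables (c0 : R -> R) (c1 : R -> R -> ereal).

Definition c0A : ereal :=
  match cls_a with Regular | Exit => Fin (c0 (real_of a)) | _ => limval_a c0 end.
Definition c0B : ereal :=
  match cls_b with Entrance => Fin (c0 (real_of b)) | _ => limval_b c0 end.

Definition Condition_B : Prop :=
  relcont inE c0 /\ (forall x, inE x -> 0 <= c0 x) /\
  (cls_a = Natural -> exists l, lim_a c0 l) /\
  (cls_b = Natural -> exists l, lim_b c0 l) /\
  (a = NInf -> lim_a c0 PInf) /\ (b = PInf -> lim_b c0 PInf) /\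
  (forall y, inI y -> isfin (IntB (fun x => c0 x * mdens x) y)) /\
  (reflecting_a -> exists r,
      lim_a (fun x => sdens x * real_of (IntB (fun u => c0 u * mdens u) x)) (Fin r)) /\
  cont2e inRbar c1 /\
  (forall y z, inRbar y z -> c1 y z <> NInf) /\
  (exists k1, 0 < k1 /\ forall y z, inRbar y z -> ereal_le (Fin k1) (c1 y z)) /\
  (forall z, inE z -> a <> Fin z -> exists y1, inI y1 /\ y1 <= z /\
      (forall y, inE y -> y < y1 -> isfin (c1 y z)) /\
      C1_on (fun y => inE y /\ y < y1) (fun y => real_of (c1 y z))) /\
  (forall y, inE y -> b <> Fin y -> exists z1, inI z1 /\ y <= z1 /\
      (forall z, inE z -> z1 < z -> isfin (c1 y z)) /\
      C1_on (fun z => inE z /\ z1 < z) (fun z => real_of (c1 y z))).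

Definition g0 (x : R) : R :=
  RInt (fun u => real_of (IntB (fun v => 2 * c0 v * mdens v) u) * sdens u) x0 x.
Definition zeta (x : R) : R :=
  RInt (fun u => 2 * real_of (IntB mdens u) * sdens u) x0 x.

Definition F0 (y z : R) : ereal :=
  match Req_dec_T y z with
  | left _ => PInf
  | right _ =>
      match c1 y z with
      | Fin c => Fin ((c + (valE g0 z - valE g0 y)) / (valE zeta z - valE zeta y))
      | _ => PInf
      end
  end.

Definition F0_inf (v : ereal) : Prop :=
  (forall y z, inRbar y z -> ereal_le v (F0 y z)) /\
  (forall w, ereal_lt v w -> exists y z, inRbar y z /\ ereal_lt (F0 y z) w).

Definition Condition_C : Prop :=
  (attainable_a \/
   (cls_a = Natural /\
    (c0A = PInf \/
     (isfin c0A /\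
      (forall z, inE z -> exists yz, inI yz /\ yz <= z /\
         forall y, inI y -> y < yz ->
           ereal_lt (F0 y z)
             (Fin ((- Dv (fun y' => real_of (c1 y' z)) y + Dv g0 y) / Dv zeta y))) /\
      (exists yh zh, inE yh /\ inE zh /\ yh < zh /\ ereal_lt (F0 yh zh) c0A))))) /\
  (cls_b = Entrance \/
   (cls_b = Natural /\
    (c0B = PInf \/
     (isfin c0B /\
      (forall y, inE y -> exists zy, inI zy /\ y <= zy /\
         forall z, inI z -> zy < z ->
           ereal_lt (F0 y z)
             (Fin ((Dv (fun z' => real_of (c1 y z')) z + Dv g0 z) / Dv zeta z))) /\
      (exists yt zt, inE yt /\ inE zt /\ yt < zt /\ ereal_lt (F0 yt zt) c0B))))).

Variable Fs : R.

Definition G0 (x : R) : R := g0 x - Fs * zeta x.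

Definition Condition_D : Prop :=
  (exists L y1, inI y1 /\
    (c0A = PInf -> forall x, inI x -> x < y1 ->
       c0 x / (1 + Rabs (G0 x)) ^ 2
       + (sigma x * Dv G0 x) ^ 2 / (1 + Rabs (G0 x)) ^ 3 <= L) /\
    (isfin c0A -> exists eps, 0 < eps < 1 /\ forall x, inI x -> x < y1 ->
       (sigma x * Dv G0 x) ^ 2 / Rpower (1 + Rabs (G0 x)) (2 + eps) <= L)) /\
  (exists L z1, inI z1 /\
    (c0B = PInf -> forall x, inI x -> z1 < x ->
       c0 x / (1 + Rabs (G0 x)) ^ 2
       + (sigma x * Dv G0 x) ^ 2 / ((1 + Rabs (G0 x)) * (1 + c0 x)) <= L) /\
    (isfin c0B -> exists eps, 0 < eps < 1 /\ forall x, inI x -> z1 < x ->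
       (sigma x * Dv G0 x) ^ 2 / Rpower (1 + Rabs (G0 x)) (2 + eps)
       + (sigma x * Dv G0 x) ^ 2 / ((1 + Rabs (G0 x)) * (1 + c0 x)) <= L)) /\
  (((exists l, lim_a G0 l /\ l <> NInf) \/ (sticky_a /\ isfin c0A)) ->
     exists r, lim_a (fun x => sigma x * Dv G0 x) (Fin r)) /\
  ((exists l, lim_b G0 l /\ l <> PInf) ->
     exists r, lim_b (fun x => sigma x * Dv G0 x) (Fin r)).

Definition Agen (f : R -> R) (x : R) : R :=
  (sigma x) ^ 2 / 2 * Dv (Dv f) x + mu x * Dv f x.

(* the class D (f given on I; its values on Ebar \ I are its boundary limits) *)
Definition in_classD (f : R -> R) : Prop :=
  (forall x, inI x ->
     derivable_pt_lim f x (Dv f x) /\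
     derivable_pt_lim (Dv f) x (Dv (Dv f) x) /\
     continuity_pt (Dv (Dv f)) x) /\
  (* C(Ebar): continuous extension to the finite endpoints *)
  (forall r, a = Fin r -> exists v, lim_a f (Fin v)) /\
  (forall r, b = Fin r -> exists v, lim_b f (Fin v)) /\
  exists Lf,
    (forall x, inI x -> Rabs (f x) <= Lf) /\
    (forall x, inI x -> (sigma x * Dv f x) ^ 2 <= Lf * (1 + c0 x)) /\
    (forall x, inI x -> Rabs (Agen f x) <= Lf) /\
    (isfin c0A -> exists v, lim_a (Agen f) (Fin v)) /\
    (isfin c0B -> exists v, lim_b (Agen f) (Fin v)) /\
    (reflecting_a -> exists d, rderiv inEbar (valE f) (real_of a) d) /\
    ((sticky_a /\ isfin c0A) -> exists v, lim_a (fun x => sigma x * Dv f x) (Fin v)).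

Definition Gn (n : nat) (x : R) : R := G0 x / (1 + / INR n * hfun (G0 x)).

End Setting.

(* Main.v *)
Require Import Defs.
From Stdlib Require Import Reals Lra Psatz ClassicalEpsilon Classical.
From Coquelicot Require Import Coquelicot.
Open Scope R_scope.

Section Gen.
Variables (a b : ereal).

Ltac ei := unfold inI, ereal_lt in *.

Lemma inI_between x y z : inI a b x -> inI a b z -> x <= y <= z -> inI a b y.
Proof. ei; destruct a, b; intuition lra. Qed.

Lemma inI_open x : inI a b x -> exists d, 0 < d /\ forall y, Rabs (y - x) < d -> inI a b y.
Proof.
  ei; intros [H1 H2].
  destruct a as [ra| |], b as [rb| |]; try tauto.
  - exists (Rmin (x - ra) (rb - x)); split. apply Rmin_glb_lt; lra.
    intros y Hy; apply Rabs_def2 in Hy; destruct Hy.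
    pose proof (Rmin_l (x - ra) (rb - x)); pose proof (Rmin_r (x - ra) (rb - x)); split; lra.
  - exists (x - ra); split. lra. intros y Hy; apply Rabs_def2 in Hy; lra.
  - exists (rb - x); split. lra. intros y Hy; apply Rabs_def2 in Hy; lra.
  - exists 1; split; [lra|tauto].
Qed.

Lemma exists_below x : inI a b x -> exists y, inI a b y /\ y < x.
Proof.
  intros H; destruct (inI_open x H) as [d [Hd Hy]].
  exists (x - d/2); split; [apply Hy; rewrite Rabs_left; lra | lra].
Qed.

Lemma exists_above x : inI a b x -> exists y, inI a b y /\ x < y.
Proof.
  intros H; destruct (inI_open x H) as [d [Hd Hy]].
  exists (x + d/2); split; [apply Hy; rewrite Rabs_right; lra | lra].
Qed.

Variable x0 : R.
Hypothesis Hx0 : inI a b x0.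

Lemma near_a_filter : ProperFilter (near_a a b).
Proof.
  constructor.
  - intros P [y [Hy HP]]. destruct (exists_below y Hy) as [x [Hx Hxy]].
    exists x; apply HP; auto.
  - constructor.
    + exists x0; split; auto.
    + intros P Q [y1 [Hy1 HP]] [y2 [Hy2 HQ]].
      exists (Rmin y1 y2); split.
      * unfold Rmin; destruct Rle_dec; auto.
      * intros x Hx Hlt; split; [apply HP|apply HQ]; auto;
        pose proof (Rmin_l y1 y2); pose proof (Rmin_r y1 y2); lra.
    + intros P Q HPQ [y [Hy HP]]; exists y; split; auto.
Qed.

Lemma near_b_filter : ProperFilter (near_b a b).
Proof.
  constructor.
  - intros P [y [Hy HP]]. destruct (exists_above y Hy) as [x [Hx Hxy]].
    exists x; apply HP; auto.
  - constructor.
    + exists x0; split; auto.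
    + intros P Q [y1 [Hy1 HP]] [y2 [Hy2 HQ]].
      exists (Rmax y1 y2); split.
      * unfold Rmax; destruct Rle_dec; auto.
      * intros x Hx Hlt; split; [apply HP|apply HQ]; auto;
        pose proof (Rmax_l y1 y2); pose proof (Rmax_r y1 y2); lra.
    + intros P Q HPQ [y [Hy HP]]; exists y; split; auto.
Qed.

#[local] Instance near_a_F : Filter (near_a a b) := filter_filter (ProperFilter := near_a_filter).
#[local] Instance near_b_F : Filter (near_b a b) := filter_filter (ProperFilter := near_b_filter).

Lemma near_a_ex P : near_a a b P -> exists x, inI a b x /\ P x.
Proof. intros [y [Hy HP]]; destruct (exists_below y Hy) as [x [? ?]]; exists x; auto. Qed.
Lemma near_b_ex P : near_b a b P -> exists x, inI a b x /\ P x.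
Proof. intros [y [Hy HP]]; destruct (exists_above y Hy) as [x [? ?]]; exists x; auto. Qed.

Lemma near_a_I : near_a a b (inI a b).
Proof. exists x0; split; auto. Qed.
Lemma near_b_I : near_b a b (inI a b).
Proof. exists x0; split; auto. Qed.

Lemma near_a_below y : inI a b y -> near_a a b (fun x => x < y).
Proof. intros; exists y; split; auto. Qed.
Lemma near_b_above y : inI a b y -> near_b a b (fun x => y < x).
Proof. intros; exists y; split; auto. Qed.

Lemma near_a_and P Q : near_a a b P -> near_a a b Q -> near_a a b (fun x => P x /\ Q x).
Proof. apply filter_and. Qed.
Lemma near_b_and P Q : near_b a b P -> near_b a b Q -> near_b a b (fun x => P x /\ Q x).
Proof. apply filter_and. Qed.
Lemma near_a_imp (P Q : R -> Prop) : (forall x, inI a b x -> P x -> Q x) -> near_a a b P -> near_a a b Q.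
Proof. intros H HP. generalize (near_a_and _ _ HP near_a_I). apply filter_imp. intros x []; auto. Qed.
Lemma near_b_imp (P Q : R -> Prop) : (forall x, inI a b x -> P x -> Q x) -> near_b a b P -> near_b a b Q.
Proof. intros H HP. generalize (near_b_and _ _ HP near_b_I). apply filter_imp. intros x []; auto. Qed.

Lemma lim_a_fin f l : lim_a a b f (Fin l) <-> filterlim f (near_a a b) (locally l).
Proof.
  rewrite filterlim_locally; simpl; split.
  - intros H eps; apply H; destruct eps; auto.
  - intros H eps Heps; apply (H (mkposreal eps Heps)).
Qed.
Lemma lim_b_fin f l : lim_b a b f (Fin l) <-> filterlim f (near_b a b) (locally l).
Proof.
  rewrite filterlim_locally; simpl; split.
  - intros H eps; apply H; destruct eps; auto.
  - intros H eps Heps; apply (H (mkposreal eps Heps)).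
Qed.

Lemma lim_a_unique f l1 l2 : lim_a a b f l1 -> lim_a a b f l2 -> l1 = l2.
Proof.
  destruct l1 as [r1| |], l2 as [r2| |]; simpl; intros H1 H2; auto.
  - destruct (Req_dec r1 r2) as [->|Hne]; auto. exfalso.
    assert (He : 0 < Rabs (r1 - r2) / 2) by (assert (r1 - r2 <> 0) by lra; apply Rabs_pos_lt in H; lra).
    destruct (near_a_ex _ (near_a_and _ _ (H1 _ He) (H2 _ He))) as [x [_ [A B]]].
    assert (Rabs (r1 - r2) <= Rabs (f x - r2) + Rabs (f x - r1)).
    { replace (r1 - r2) with ((f x - r2) - (f x - r1)) by ring. 
      eapply Rle_trans; [apply Rabs_triang|]. rewrite Rabs_Ropp; lra. }
    lra.
  - exfalso; destruct (near_a_ex _ (near_a_and _ _ (H1 1 Rlt_0_1) (H2 (r1+1)))) as [x [_ [A B]]].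
    apply Rabs_def2 in A; lra.
  - exfalso; destruct (near_a_ex _ (near_a_and _ _ (H1 1 Rlt_0_1) (H2 (r1-1)))) as [x [_ [A B]]].
    apply Rabs_def2 in A; lra.
  - exfalso; destruct (near_a_ex _ (near_a_and _ _ (H2 1 Rlt_0_1) (H1 (r2+1)))) as [x [_ [A B]]].
    apply Rabs_def2 in A; lra.
  - exfalso; destruct (near_a_ex _ (near_a_and _ _ (H1 0) (H2 0))) as [x [_ [A B]]]; lra.
  - exfalso; destruct (near_a_ex _ (near_a_and _ _ (H2 1 Rlt_0_1) (H1 (r2-1)))) as [x [_ [A B]]].
    apply Rabs_def2 in A; lra.
  - exfalso; destruct (near_a_ex _ (near_a_and _ _ (H1 0) (H2 0))) as [x [_ [A B]]]; lra.
Qed.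

Lemma lim_b_unique f l1 l2 : lim_b a b f l1 -> lim_b a b f l2 -> l1 = l2.
Proof.
  destruct l1 as [r1| |], l2 as [r2| |]; simpl; intros H1 H2; auto.
  - destruct (Req_dec r1 r2) as [->|Hne]; auto. exfalso.
    assert (He : 0 < Rabs (r1 - r2) / 2) by (assert (r1 - r2 <> 0) by lra; apply Rabs_pos_lt in H; lra).
    destruct (near_b_ex _ (near_b_and _ _ (H1 _ He) (H2 _ He))) as [x [_ [A B]]].
    assert (Rabs (r1 - r2) <= Rabs (f x - r2) + Rabs (f x - r1)).
    { replace (r1 - r2) with ((f x - r2) - (f x - r1)) by ring.
      eapply Rle_trans; [apply Rabs_triang|]. rewrite Rabs_Ropp; lra. }
    lra.
  - exfalso; destruct (near_b_ex _ (near_b_and _ _ (H1 1 Rlt_0_1) (H2 (r1+1)))) as [x [_ [A B]]].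
    apply Rabs_def2 in A; lra.
  - exfalso; destruct (near_b_ex _ (near_b_and _ _ (H1 1 Rlt_0_1) (H2 (r1-1)))) as [x [_ [A B]]].
    apply Rabs_def2 in A; lra.
  - exfalso; destruct (near_b_ex _ (near_b_and _ _ (H2 1 Rlt_0_1) (H1 (r2+1)))) as [x [_ [A B]]].
    apply Rabs_def2 in A; lra.
  - exfalso; destruct (near_b_ex _ (near_b_and _ _ (H1 0) (H2 0))) as [x [_ [A B]]]; lra.
  - exfalso; destruct (near_b_ex _ (near_b_and _ _ (H2 1 Rlt_0_1) (H1 (r2-1)))) as [x [_ [A B]]].
    apply Rabs_def2 in A; lra.
  - exfalso; destruct (near_b_ex _ (near_b_and _ _ (H1 0) (H2 0))) as [x [_ [A B]]]; lra.
Qed.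

Lemma limval_a_eq f l : lim_a a b f l -> limval_a a b f = l.
Proof.
  intros H; unfold limval_a.
  apply (lim_a_unique f); [apply epsilon_spec; exists l; auto | auto].
Qed.
Lemma limval_b_eq f l : lim_b a b f l -> limval_b a b f = l.
Proof.
  intros H; unfold limval_b.
  apply (lim_b_unique f); [apply epsilon_spec; exists l; auto | auto].
Qed.

Lemma lim_a_ext f g l : (forall x, inI a b x -> f x = g x) -> lim_a a b f l -> lim_a a b g l.
Proof.
  intros E; destruct l; simpl; intros H.
  - intros eps He; apply (near_a_imp _ _ (fun x Hx P => eq_ind _ (fun v => Rabs (v - r) < eps) P _ (E x Hx)) (H eps He)).
  - intros K; apply (near_a_imp _ _ (fun x Hx P => eq_ind _ (fun v => K < v) P _ (E x Hx)) (H K)).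
  - intros K; apply (near_a_imp _ _ (fun x Hx P => eq_ind _ (fun v => v < K) P _ (E x Hx)) (H K)).
Qed.
Lemma lim_b_ext f g l : (forall x, inI a b x -> f x = g x) -> lim_b a b f l -> lim_b a b g l.
Proof.
  intros E; destruct l; simpl; intros H.
  - intros eps He; apply (near_b_imp _ _ (fun x Hx P => eq_ind _ (fun v => Rabs (v - r) < eps) P _ (E x Hx)) (H eps He)).
  - intros K; apply (near_b_imp _ _ (fun x Hx P => eq_ind _ (fun v => K < v) P _ (E x Hx)) (H K)).
  - intros K; apply (near_b_imp _ _ (fun x Hx P => eq_ind _ (fun v => v < K) P _ (E x Hx)) (H K)).
Qed.

Lemma lim_a_incr f y2 : inI a b y2 ->
  (forall x y, inI a b x -> inI a b y -> x <= y -> y < y2 -> f x <= f y) ->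
  exists l, lim_a a b f l /\ l <> PInf.
Proof.
  intros Hy2 Hm.
  set (E := fun v => exists x, inI a b x /\ x < y2 /\ v = - f x).
  destruct (classic (exists m, is_upper_bound E m)) as [[m Hm0]|Hnb].
  - assert (HE : exists v, E v).
    { destruct (exists_below y2 Hy2) as [x [? ?]]. exists (- f x), x; auto. }
    destruct (completeness E (ex_intro _ m Hm0) HE) as [s [Hs1 Hs2]].
    exists (Fin (- s)); split; [|discriminate]. simpl; intros eps Heps.
    destruct (classic (exists x, inI a b x /\ x < y2 /\ s - eps < - f x)) as [[xs [Hxs [Hxs2 Hxs3]]]|Hn].
    + exists xs; split; auto. intros x Hx Hlt.
      assert (f x <= f xs) by (apply Hm; auto; lra).
      assert (- f x <= s) by (apply Hs1; exists x; split; [assumption|split; [lra|reflexivity]]).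
      apply Rabs_def1; lra.
    + exfalso. assert (is_upper_bound E (s - eps)).
      { intros v [x [Hx [Hx2 ->]]]. destruct (Rle_dec (- f x) (s - eps)); auto.
        exfalso; apply Hn; exists x; split; [assumption|split; lra]. }
      specialize (Hs2 _ H); lra.
  - exists NInf; split; [|discriminate]. simpl; intros K.
    destruct (classic (exists x, inI a b x /\ x < y2 /\ f x < K)) as [[xs [Hxs [Hxs2 Hxs3]]]|Hn].
    + exists xs; split; auto. intros x Hx Hlt.
      assert (f x <= f xs) by (apply Hm; auto; lra). lra.
    + exfalso; apply Hnb; exists (- K). intros v [x [Hx [Hx2 ->]]].
      destruct (Rle_dec K (f x)); [lra|]. exfalso; apply Hn; exists x; split; [assumption|split; lra].
Qed.

Lemma lim_a_opp f l : lim_a a b (fun x => - f x) l ->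
  lim_a a b f (match l with Fin r => Fin (- r) | PInf => NInf | NInf => PInf end).
Proof.
  destruct l; simpl; intros H.
  - intros eps He. apply (near_a_imp (fun x => Rabs (- f x - r) < eps)); [|apply H; auto].
    intros x _ P. replace (f x - - r) with (- (- f x - r)) by ring. rewrite Rabs_Ropp; auto.
  - intros K; apply (near_a_imp (fun x => - K < - f x)); [intros; lra|apply H].
  - intros K; apply (near_a_imp (fun x => - f x < - K)); [intros; lra|apply H].
Qed.

Lemma lim_a_decr f y2 : inI a b y2 ->
  (forall x y, inI a b x -> inI a b y -> x <= y -> y < y2 -> f y <= f x) ->
  exists l, lim_a a b f l /\ l <> NInf.
Proof.
  intros Hy2 Hm. destruct (lim_a_incr (fun x => - f x) y2 Hy2) as [l [Hl Hn]].
  { intros x y H1 H2 H3 H4; specialize (Hm x y H1 H2 H3 H4); lra. }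
  apply lim_a_opp in Hl. eexists; split; [exact Hl|]. destruct l; try discriminate; congruence.
Qed.

Lemma lim_b_incr f z2 : inI a b z2 ->
  (forall x y, inI a b x -> inI a b y -> x <= y -> z2 < x -> f x <= f y) ->
  exists l, lim_b a b f l /\ l <> NInf.
Proof.
  intros Hz2 Hm.
  set (E := fun v => exists x, inI a b x /\ z2 < x /\ v = f x).
  destruct (classic (exists m, is_upper_bound E m)) as [[m Hm0]|Hnb].
  - assert (HE : exists v, E v).
    { destruct (exists_above z2 Hz2) as [x [? ?]]. exists (f x), x; auto. }
    destruct (completeness E (ex_intro _ m Hm0) HE) as [s [Hs1 Hs2]].
    exists (Fin s); split; [|discriminate]. simpl; intros eps Heps.
    destruct (classic (exists x, inI a b x /\ z2 < x /\ s - eps < f x)) as [[xs [Hxs [Hxs2 Hxs3]]]|Hn].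
    + exists xs; split; auto. intros x Hx Hlt.
      assert (f xs <= f x) by (apply Hm; auto; lra).
      assert (f x <= s) by (apply Hs1; exists x; split; [assumption|split; [lra|reflexivity]]).
      apply Rabs_def1; lra.
    + exfalso. assert (is_upper_bound E (s - eps)).
      { intros v [x [Hx [Hx2 ->]]]. destruct (Rle_dec (f x) (s - eps)); auto.
        exfalso; apply Hn; exists x; split; [assumption|split; lra]. }
      specialize (Hs2 _ H); lra.
  - exists PInf; split; [|discriminate]. simpl; intros K.
    destruct (classic (exists x, inI a b x /\ z2 < x /\ K < f x)) as [[xs [Hxs [Hxs2 Hxs3]]]|Hn].
    + exists xs; split; auto. intros x Hx Hlt.
      assert (f xs <= f x) by (apply Hm; auto; lra). lra.
    + exfalso; apply Hnb; exists K. intros v [x [Hx [Hx2 ->]]].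
      destruct (Rle_dec (f x) K); [lra|]. exfalso; apply Hn; exists x; split; [assumption|split; lra].
Qed.

Lemma lim_b_opp f l : lim_b a b (fun x => - f x) l ->
  lim_b a b f (match l with Fin r => Fin (- r) | PInf => NInf | NInf => PInf end).
Proof.
  destruct l; simpl; intros H.
  - intros eps He. apply (near_b_imp (fun x => Rabs (- f x - r) < eps)); [|apply H; auto].
    intros x _ P. replace (f x - - r) with (- (- f x - r)) by ring. rewrite Rabs_Ropp; auto.
  - intros K; apply (near_b_imp (fun x => - K < - f x)); [intros; lra|apply H].
  - intros K; apply (near_b_imp (fun x => - f x < - K)); [intros; lra|apply H].
Qed.

Lemma lim_b_decr f z2 : inI a b z2 ->
  (forall x y, inI a b x -> inI a b y -> x <= y -> z2 < x -> f y <= f x) ->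
  exists l, lim_b a b f l /\ l <> PInf.
Proof.
  intros Hz2 Hm. destruct (lim_b_incr (fun x => - f x) z2 Hz2) as [l [Hl Hn]].
  { intros x y H1 H2 H3 H4; specialize (Hm x y H1 H2 H3 H4); lra. }
  apply lim_b_opp in Hl. eexists; split; [exact Hl|]. destruct l; try discriminate; congruence.
Qed.

End Gen.

Lemma ballR (x e y : R) : ball x e y <-> Rabs (y - x) < e.
Proof. reflexivity. Qed.

Lemma locally_of (x : R) (P : R -> Prop) : (exists d, 0 < d /\ forall z, Rabs (z - x) < d -> P z) -> locally x P.
Proof. intros [d [Hd H]]; exists (mkposreal d Hd); intros z Hz; apply H; exact Hz. Qed.

Lemma Dv_eq f x d : derivable_pt_lim f x d -> Dv f x = d.
Proof.
  intros H; unfold Dv. apply (uniqueness_limite f x); [|exact H].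
  apply epsilon_spec; exists d; exact H.
Qed.

Lemma deriv_loc f g x l : (exists d, 0 < d /\ forall z, Rabs (z - x) < d -> f z = g z) ->
  derivable_pt_lim g x l -> derivable_pt_lim f x l.
Proof.
  intros [d [Hd E]] H eps He. destruct (H eps He) as [del Hdel].
  assert (Hm : 0 < Rmin d del) by (apply Rmin_glb_lt; [lra|destruct del; simpl; lra]).
  exists (mkposreal _ Hm). intros h Hh Hlt. simpl in Hlt.
  rewrite !E; [apply Hdel; auto; eapply Rlt_le_trans; [exact Hlt| apply Rmin_r]| |].
  - rewrite Rminus_diag, Rabs_R0; lra.
  - replace (x + h - x) with h by ring. eapply Rlt_le_trans; [exact Hlt| apply Rmin_l].
Qed.

Lemma cont_loc f g x : (exists d, 0 < d /\ forall z, Rabs (z - x) < d -> f z = g z) ->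
  continuity_pt g x -> continuity_pt f x.
Proof.
  intros [d [Hd E]] H. apply continuity_pt_locally. intros eps.
  apply continuity_pt_locally with (eps := eps) in H. destruct H as [e1 He1].
  apply locally_of. exists (Rmin d e1); split. apply Rmin_glb_lt; [lra|apply cond_pos].
  intros z Hz. rewrite !E. apply He1. apply ballR. eapply Rlt_le_trans; [exact Hz|apply Rmin_r].
  rewrite Rminus_diag, Rabs_R0; lra. eapply Rlt_le_trans; [exact Hz|apply Rmin_l].
Qed.

Lemma deriv_glue f g1 g2 c l d : 0 < d ->
  (forall z, c <= z < c + d -> f z = g1 z) -> (forall z, c - d < z <= c -> f z = g2 z) ->
  derivable_pt_lim g1 c l -> derivable_pt_lim g2 c l -> derivable_pt_lim f c l.
Proof.
  intros Hd E1 E2 H1 H2 eps He.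
  destruct (H1 eps He) as [d1 Hd1]. destruct (H2 eps He) as [d2 Hd2].
  assert (Hm : 0 < Rmin d (Rmin d1 d2)) by (repeat apply Rmin_glb_lt; try lra; apply cond_pos).
  exists (mkposreal _ Hm). intros h Hh Hlt; simpl in Hlt.
  pose proof (Rmin_l d (Rmin d1 d2)); pose proof (Rmin_r d (Rmin d1 d2)).
  pose proof (Rmin_l d1 d2); pose proof (Rmin_r d1 d2).
  apply Rabs_def2 in Hlt as Hl2.
  destruct (Rle_dec 0 h).
  - rewrite (E1 c), (E1 (c + h)) by lra. apply Hd1; auto. lra.
  - rewrite (E2 c), (E2 (c + h)) by lra. apply Hd2; auto. lra.
Qed.

Lemma cont_glue f g1 g2 c d : 0 < d ->
  (forall z, c <= z < c + d -> f z = g1 z) -> (forall z, c - d < z <= c -> f z = g2 z) ->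
  continuity_pt g1 c -> continuity_pt g2 c -> continuity_pt f c.
Proof.
  intros Hd E1 E2 H1 H2. apply continuity_pt_locally. intros eps.
  apply continuity_pt_locally with (eps := eps) in H1. destruct H1 as [e1 He1].
  apply continuity_pt_locally with (eps := eps) in H2. destruct H2 as [e2 He2].
  apply locally_of. exists (Rmin d (Rmin e1 e2)); split.
  repeat apply Rmin_glb_lt; try lra; apply cond_pos.
  intros z Hz.
  pose proof (Rmin_l d (Rmin e1 e2)); pose proof (Rmin_r d (Rmin e1 e2)).
  pose proof (Rmin_l e1 e2); pose proof (Rmin_r e1 e2).
  apply Rabs_def2 in Hz as Hz2.
  destruct (Rle_dec c z).
  - rewrite (E1 c), (E1 z) by lra. apply He1. apply ballR. apply Rabs_def1; lra.
  - rewrite (E2 c), (E2 z) by lra. apply He2. apply ballR. apply Rabs_def1; lra.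
Qed.

Section Calc.
Variables (a b : ereal).

Definition contI (f : R -> R) := forall x, inI a b x -> continuity_pt f x.

Lemma RI_eq f y z : contI f -> inI a b y -> inI a b z ->
  ex_RInt f y z /\ Defs.RInt f y z = RInt f y z.
Proof.
  intros Hf Hy Hz.
  assert (Hex : ex_RInt f y z).
  { apply (ex_RInt_continuous (V := R_CompleteNormedModule)). intros w Hw. apply continuity_pt_filterlim. apply Hf.
    destruct (Rle_dec y z).
    - rewrite Rmin_left, Rmax_right in Hw by lra. apply (inI_between a b y w z); auto.
    - rewrite Rmin_right, Rmax_left in Hw by lra. apply (inI_between a b z w y); auto. }
  split; auto. unfold Defs.RInt. destruct excluded_middle_informative as [Hi|Hn].
  - rewrite (RInt_Reals f y z (epsilon Hi (fun _ => True))). reflexivity.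
  - exfalso; apply Hn; constructor; apply ex_RInt_Reals_0; auto.
Qed.

Lemma locally_I x : inI a b x -> locally x (inI a b).
Proof. intros Hx; apply locally_of; apply (inI_open a b x Hx). Qed.

Lemma FTC f y x : contI f -> inI a b y -> inI a b x ->
  derivable_pt_lim (fun z => Defs.RInt f y z) x (f x).
Proof.
  intros Hf Hy Hx. apply is_derive_Reals.
  apply (is_derive_RInt f (fun z => Defs.RInt f y z) y x).
  - generalize (locally_I x Hx). apply filter_imp. intros z Hz.
    destruct (RI_eq f y z Hf Hy Hz) as [He E]. rewrite E; apply (RInt_correct (V := R_CompleteNormedModule)); auto.
  - apply continuity_pt_filterlim; apply Hf; auto.
Qed.

Lemma FTC' f y x : contI f -> inI a b y -> inI a b x ->
  derivable_pt_lim (fun z => Defs.RInt f z y) x (- f x).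
Proof.
  intros Hf Hy Hx. apply is_derive_Reals.
  apply (is_derive_RInt' f (fun z => Defs.RInt f z y) x y).
  - generalize (locally_I x Hx). apply filter_imp. intros z Hz.
    destruct (RI_eq f z y Hf Hz Hy) as [He E]. rewrite E; apply (RInt_correct (V := R_CompleteNormedModule)); auto.
  - apply continuity_pt_filterlim; apply Hf; auto.
Qed.

Lemma RI_chasles f y z w : contI f -> inI a b y -> inI a b z -> inI a b w ->
  Defs.RInt f y z + Defs.RInt f z w = Defs.RInt f y w.
Proof.
  intros Hf Hy Hz Hw.
  destruct (RI_eq f y z Hf Hy Hz) as [H1 ->]. destruct (RI_eq f z w Hf Hz Hw) as [H2 ->].
  destruct (RI_eq f y w Hf Hy Hw) as [H3 ->].
  exact (RInt_Chasles (V := R_CompleteNormedModule) f y z w H1 H2).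
Qed.

Lemma RI_swap f y z : contI f -> inI a b y -> inI a b z -> Defs.RInt f y z = - Defs.RInt f z y.
Proof.
  intros Hf Hy Hz. pose proof (RI_chasles f y z y Hf Hy Hz Hy).
  assert (Defs.RInt f y y = 0).
  { destruct (RI_eq f y y Hf Hy Hy) as [_ ->]. apply (RInt_point (V := R_CompleteNormedModule)). }
  lra.
Qed.

Lemma mvt_I F F' y z : (forall x, inI a b x -> derivable_pt_lim F x (F' x)) ->
  inI a b y -> inI a b z -> y < z ->
  exists c, y < c < z /\ F z - F y = F' c * (z - y).
Proof.
  intros HD Hy Hz Hyz. destruct (MVT_cor2 F F' y z Hyz) as [c [E Hc]].
  - intros c Hc; apply HD; apply (inI_between a b y c z); auto.
  - exists c; auto.
Qed.

Lemma incr_I F F' y z : (forall x, inI a b x -> derivable_pt_lim F x (F' x)) ->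
  inI a b y -> inI a b z -> y <= z -> (forall c, y < c < z -> 0 <= F' c) -> F y <= F z.
Proof.
  intros HD Hy Hz Hyz Hp. destruct (Req_dec y z) as [->|Hne]; [lra|].
  destruct (mvt_I F F' y z HD Hy Hz) as [c [Hc E]]; [lra|].
  specialize (Hp c Hc). nra.
Qed.

Lemma const_I F F' y z : (forall x, inI a b x -> derivable_pt_lim F x (F' x)) ->
  inI a b y -> inI a b z -> (forall c, inI a b c -> F' c = 0) -> F y = F z.
Proof.
  intros HD Hy Hz H0.
  destruct (Rtotal_order y z) as [Hl|[->|Hl]]; auto.
  - destruct (mvt_I F F' y z HD Hy Hz Hl) as [c [Hc E]].
    rewrite H0 in E by (apply (inI_between a b y c z); auto; lra). lra.
  - destruct (mvt_I F F' z y HD Hz Hy Hl) as [c [Hc E]].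
    rewrite H0 in E by (apply (inI_between a b z c y); auto; lra). lra.
Qed.

Lemma contI_deriv F F' : (forall x, inI a b x -> derivable_pt_lim F x (F' x)) -> contI F.
Proof.
  intros H x Hx. apply derivable_continuous_pt. exists (F' x). apply H; auto.
Qed.

End Calc.

Definition hp (z : R) := - / 8 * z ^ 4 + 3 / 4 * z ^ 2 + 3 / 8.
Definition h1 (t : R) : R :=
  if Rle_dec (Rabs t) 1 then - / 2 * t ^ 3 + 3 / 2 * t else (if Rle_dec 0 t then 1 else -1).
Definition h2 (t : R) : R :=
  if Rle_dec (Rabs t) 1 then - 3 / 2 * t ^ 2 + 3 / 2 else 0.

Lemma hp_d t : derivable_pt_lim hp t (- / 2 * t ^ 3 + 3 / 2 * t).
Proof. apply is_derive_Reals; unfold hp; auto_derive; auto; field. Qed.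
Lemma h1p_d t : derivable_pt_lim (fun z => - / 2 * z ^ 3 + 3 / 2 * z) t (- 3 / 2 * t ^ 2 + 3 / 2).
Proof. apply is_derive_Reals; auto_derive; auto; field. Qed.
Lemma h2p_c t : continuity_pt (fun z => - 3 / 2 * z ^ 2 + 3 / 2) t.
Proof. apply derivable_continuous_pt. exists (-3 * t). apply is_derive_Reals; auto_derive; auto; field. Qed.

Lemma id_d t : derivable_pt_lim (fun z => z) t 1.
Proof. apply derivable_pt_lim_id. Qed.
Lemma opp_d t : derivable_pt_lim (fun z => - z) t (-1).
Proof. apply is_derive_Reals; auto_derive; auto; ring. Qed.
Lemma cst_d c t : derivable_pt_lim (fun _ => c) t 0.
Proof. apply derivable_pt_lim_const. Qed.



Lemma hfun_in t : Rabs t <= 1 -> hfun t = hp t.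
Proof. intros; unfold hfun, hp; destruct Rle_dec; [reflexivity|contradiction]. Qed.
Lemma hfun_out t : ~ Rabs t <= 1 -> hfun t = Rabs t.
Proof. intros; unfold hfun; destruct Rle_dec; [contradiction|reflexivity]. Qed.

Lemma h_deriv t : derivable_pt_lim hfun t (h1 t).
Proof.
  destruct (Rlt_le_dec (Rabs t) 1) as [Hl|Hg].
  - unfold h1; destruct Rle_dec; [|lra].
    apply deriv_loc with hp; [|apply hp_d].
    exists (1 - Rabs t); split; [lra|]. intros z Hz. apply hfun_in.
    pose proof (Rabs_triang_inv z t). lra.
  - destruct (Req_dec (Rabs t) 1) as [He|Hne].
    + unfold h1; destruct Rle_dec; [|lra].
      destruct (Rle_dec 0 t).
      * rewrite Rabs_right in He by lra. subst t.
        apply (deriv_glue hfun (fun z => z) hp 1 _ 1); try lra.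
        -- intros z Hz. destruct (Req_dec z 1) as [->|]. rewrite hfun_in; [unfold hp; field|rewrite Rabs_right; lra].
           rewrite hfun_out; [apply Rabs_right; lra| rewrite Rabs_right; lra].
        -- intros z Hz. apply hfun_in. rewrite Rabs_right; lra.
        -- replace (- / 2 * 1 ^ 3 + 3 / 2 * 1) with 1 by field. apply id_d.
        -- apply hp_d.
      * rewrite Rabs_left in He by lra. assert (t = -1) by lra. subst t.
        apply (deriv_glue hfun hp (fun z => - z) (-1) _ 1); try lra.
        -- intros z Hz. apply hfun_in. apply Rabs_le; lra.
        -- intros z Hz. destruct (Req_dec z (-1)) as [->|]. rewrite hfun_in; [unfold hp; field|rewrite Rabs_left; lra].
           rewrite hfun_out; [apply Rabs_left; lra| rewrite Rabs_left; lra].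
        -- apply hp_d.
        -- replace (- / 2 * (-1) ^ 3 + 3 / 2 * -1) with (-1) by field. apply opp_d.
    + unfold h1; destruct Rle_dec; [lra|].
      destruct (Rle_dec 0 t).
      * rewrite Rabs_right in Hg, Hne by lra.
        apply deriv_loc with (fun z => z); [|apply id_d].
        exists (t - 1); split; [lra|]. intros z Hz. apply Rabs_def2 in Hz.
        rewrite hfun_out; [apply Rabs_right; lra|rewrite Rabs_right; lra].
      * rewrite Rabs_left in Hg, Hne by lra.
        apply deriv_loc with (fun z => - z); [|apply opp_d].
        exists (- t - 1); split; [lra|]. intros z Hz. apply Rabs_def2 in Hz.
        rewrite hfun_out; [apply Rabs_left; lra|rewrite Rabs_left; lra].
Qed.

Lemma h1_deriv t : derivable_pt_lim h1 t (h2 t).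
Proof.
  set (q := fun z => - / 2 * z ^ 3 + 3 / 2 * z).
  assert (Eq : forall z, Rabs z <= 1 -> h1 z = q z) by (intros; unfold h1; destruct Rle_dec; [reflexivity|contradiction]).
  destruct (Rlt_le_dec (Rabs t) 1) as [Hl|Hg].
  - unfold h2; destruct Rle_dec; [|lra].
    apply deriv_loc with q; [|apply h1p_d].
    exists (1 - Rabs t); split; [lra|]. intros z Hz. apply Eq.
    pose proof (Rabs_triang_inv z t). lra.
  - destruct (Req_dec (Rabs t) 1) as [He|Hne].
    + unfold h2; destruct Rle_dec; [|lra].
      destruct (Rle_dec 0 t).
      * rewrite Rabs_right in He by lra. subst t.
        apply (deriv_glue h1 (fun _ => 1) q 1 _ 1); try lra.
        -- intros z Hz. unfold h1. destruct Rle_dec as [Hz1|Hz1]. assert (z = 1) by (rewrite Rabs_right in Hz1; lra). subst; field.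
           destruct Rle_dec; lra.
        -- intros z Hz. apply Eq. rewrite Rabs_right; lra.
        -- replace (-3 / 2 * 1 ^ 2 + 3 / 2) with 0 by field. apply cst_d.
        -- apply h1p_d.
      * rewrite Rabs_left in He by lra. assert (t = -1) by lra. subst t.
        apply (deriv_glue h1 q (fun _ => -1) (-1) _ 1); try lra.
        -- intros z Hz. apply Eq. apply Rabs_le; lra.
        -- intros z Hz. unfold h1. destruct Rle_dec as [Hz1|Hz1]. assert (z = -1) by (rewrite Rabs_left in Hz1; lra). subst; field.
           destruct Rle_dec; lra.
        -- apply h1p_d.
        -- replace (-3 / 2 * (-1) ^ 2 + 3 / 2) with 0 by field. apply cst_d.
    + unfold h2; destruct Rle_dec; [lra|].
      destruct (Rle_dec 0 t).
      * rewrite Rabs_right in Hg, Hne by lra.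
        apply deriv_loc with (fun _ => 1); [|apply cst_d].
        exists (t - 1); split; [lra|]. intros z Hz. apply Rabs_def2 in Hz.
        unfold h1; destruct Rle_dec as [Hz1|Hz1]. rewrite Rabs_right in Hz1; lra. destruct Rle_dec; lra.
      * rewrite Rabs_left in Hg, Hne by lra.
        apply deriv_loc with (fun _ => -1); [|apply cst_d].
        exists (- t - 1); split; [lra|]. intros z Hz. apply Rabs_def2 in Hz.
        unfold h1; destruct Rle_dec as [Hz1|Hz1]. rewrite Rabs_left in Hz1; lra. destruct Rle_dec; lra.
Qed.

Lemma h2_cont t : continuity_pt h2 t.
Proof.
  set (q := fun z => - 3 / 2 * z ^ 2 + 3 / 2).
  assert (Eq : forall z, Rabs z <= 1 -> h2 z = q z) by (intros; unfold h2; destruct Rle_dec; [reflexivity|contradiction]).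
  assert (Eq0 : forall z, ~ Rabs z <= 1 -> h2 z = 0) by (intros; unfold h2; destruct Rle_dec; [contradiction|reflexivity]).
  destruct (Rlt_le_dec (Rabs t) 1) as [Hl|Hg].
  - apply cont_loc with q; [|apply h2p_c].
    exists (1 - Rabs t); split; [lra|]. intros z Hz. apply Eq.
    pose proof (Rabs_triang_inv z t). lra.
  - destruct (Req_dec (Rabs t) 1) as [He|Hne].
    + destruct (Rle_dec 0 t).
      * rewrite Rabs_right in He by lra. subst t.
        apply (cont_glue h2 (fun _ => 0) q 1 1); try lra.
        -- intros z Hz. destruct (Req_dec z 1) as [->|]. rewrite Eq; [unfold q; field| rewrite Rabs_right; lra].
           apply Eq0. rewrite Rabs_right; lra.
        -- intros z Hz. apply Eq. rewrite Rabs_right; lra.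
        -- apply continuity_pt_const; intros ? ?; auto.
        -- apply h2p_c.
      * rewrite Rabs_left in He by lra. assert (t = -1) by lra. subst t.
        apply (cont_glue h2 q (fun _ => 0) (-1) 1); try lra.
        -- intros z Hz. apply Eq. apply Rabs_le; lra.
        -- intros z Hz. destruct (Req_dec z (-1)) as [->|]. rewrite Eq; [unfold q; field| rewrite Rabs_left; lra].
           apply Eq0. rewrite Rabs_left; lra.
        -- apply h2p_c.
        -- apply continuity_pt_const; intros ? ?; auto.
    + apply cont_loc with (fun _ => 0); [|apply continuity_pt_const; intros ? ?; auto].
      exists (Rabs t - 1); split; [lra|]. intros z Hz. apply Eq0.
      pose proof (Rabs_triang_inv t z). rewrite <- Rabs_Ropp in Hz. replace (- (z - t)) with (t - z) in Hz by ring. lra.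
Qed.

Lemma ex_h t : ex_derive hfun t.
Proof. exists (h1 t). apply is_derive_Reals, h_deriv. Qed.
Lemma Derive_h t : Derive hfun t = h1 t.
Proof. apply is_derive_unique, is_derive_Reals, h_deriv. Qed.
Lemma ex_h1 t : ex_derive h1 t.
Proof. exists (h2 t). apply is_derive_Reals, h1_deriv. Qed.
Lemma Derive_h1 t : Derive h1 t = h2 t.
Proof. apply is_derive_unique, is_derive_Reals, h1_deriv. Qed.

Lemma pow4_abs t : t ^ 4 = Rabs t ^ 4.
Proof. replace (t ^ 4) with ((t ^ 2) ^ 2) by ring. replace (Rabs t ^ 4) with ((Rabs t ^ 2) ^ 2) by ring. rewrite pow2_abs; reflexivity. Qed.

Lemma abs_le_inv t c : Rabs t <= c -> - c <= t <= c.
Proof. unfold Rabs; destruct Rcase_abs; intros; lra. Qed.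

Lemma hfun_ge_abs t : Rabs t <= hfun t.
Proof.
  unfold hfun; destruct Rle_dec as [H|H]; [|lra].
  rewrite pow4_abs, <- pow2_abs. set (u := Rabs t) in *. pose proof (Rabs_pos t). fold u in H0.
  set (w := 1 - u). assert (0 <= w) by (unfold w; lra). replace u with (1 - w) by (unfold w; ring).
  assert (0 <= w ^ 3) by (apply pow_le; auto). assert (w <= 1) by (unfold w; lra).
  nra.
Qed.
Lemma hfun_pos t : 0 <= hfun t.
Proof. pose proof (hfun_ge_abs t); pose proof (Rabs_pos t); lra. Qed.
Lemma hfun_le1 t : Rabs t <= 1 -> hfun t <= 1.
Proof.
  intros H; rewrite hfun_in by auto. unfold hp. rewrite pow4_abs, <- pow2_abs.
  set (u := Rabs t) in *. pose proof (Rabs_pos t). fold u in H0.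
  assert (0 <= u ^ 2 <= 1) by (split; [apply pow_le; auto| simpl; nra]).
  assert (u^4 = (u^2)^2) by ring. nra.
Qed.
Lemma h1_bound t : Rabs (h1 t) <= 1.
Proof.
  unfold h1; destruct Rle_dec as [H|H].
  - apply abs_le_inv in H. apply Rabs_le. destruct H.
    assert (0 <= (t-1)^2*(t+2)) by (apply Rmult_le_pos; [apply pow2_ge_0|lra]).
    assert (0 <= (t+1)^2*(2-t)) by (apply Rmult_le_pos; [apply pow2_ge_0|lra]).
    split; nra.
  - destruct Rle_dec; unfold Rabs; destruct Rcase_abs; lra.
Qed.
Lemma h2_bound t : Rabs (h2 t) <= 3/2.
Proof.
  unfold h2; destruct Rle_dec as [H|H].
  - apply abs_le_inv in H. apply Rabs_le. destruct H. assert (t^2 <= 1) by nra. split; nra.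
  - rewrite Rabs_R0; lra.
Qed.
Lemma h_out t : 1 < Rabs t -> hfun t = Rabs t /\ t * h1 t = Rabs t /\ h2 t = 0 /\ Rabs (h1 t) = 1.
Proof.
  intros H. rewrite hfun_out by lra. unfold h1, h2. destruct Rle_dec; [lra|].
  destruct Rle_dec; [rewrite (Rabs_right t) by lra | rewrite (Rabs_left t) by lra];
  repeat split; try ring; unfold Rabs; destruct Rcase_abs; lra.
Qed.

Section PhiS.
Variable k : R.
Hypothesis Hk : 0 < k <= 1.

Definition Dh t := 1 + k * hfun t.
Definition Phi t := t / Dh t.
Definition Phi1 t := (Dh t - t * k * h1 t) / (Dh t) ^ 2.
Definition Phi2 t := (- t * k * h2 t * Dh t - 2 * (Dh t - t * k * h1 t) * (k * h1 t)) / (Dh t) ^ 3.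

Lemma Dh_ge1 t : 1 <= Dh t.
Proof. unfold Dh; pose proof (hfun_pos t); nra. Qed.
Lemma Dh_ge t : k * (1 + Rabs t) <= Dh t.
Proof. unfold Dh; pose proof (hfun_ge_abs t); nra. Qed.

Lemma Phi_d t : derivable_pt_lim Phi t (Phi1 t).
Proof.
  pose proof (Dh_ge1 t). apply is_derive_Reals. unfold Phi, Phi1, Dh in *.
  auto_derive. split; [apply ex_h|split; [lra|auto]].
  replace (Derive (fun x => hfun x) t) with (h1 t) by (symmetry; apply Derive_h). field. lra.
Qed.

Lemma Phi1_d t : derivable_pt_lim Phi1 t (Phi2 t).
Proof.
  pose proof (Dh_ge1 t). apply is_derive_Reals. unfold Phi1, Phi2, Dh in *.
  auto_derive. repeat split; try apply ex_h; try apply ex_h1; try lra; try (apply Rgt_not_eq; nra).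
  replace (Derive (fun x => hfun x) t) with (h1 t) by (symmetry; apply Derive_h).
  replace (Derive (fun x => h1 x) t) with (h2 t) by (symmetry; apply Derive_h1). field. lra.
Qed.

Lemma Phi_cont t : continuity_pt Phi t.
Proof. apply derivable_continuous_pt. exists (Phi1 t). apply Phi_d. Qed.
Lemma Phi1_cont t : continuity_pt Phi1 t.
Proof. apply derivable_continuous_pt. exists (Phi2 t). apply Phi1_d. Qed.
Lemma Phi2_cont t : continuity_pt Phi2 t.
Proof.
  assert (Ch : continuity_pt hfun t) by (apply derivable_continuous_pt; exists (h1 t); apply h_deriv).
  assert (Ch1 : continuity_pt h1 t) by (apply derivable_continuous_pt; exists (h2 t); apply h1_deriv).
  pose proof (h2_cont t).
  pose proof (Dh_ge1 t).
  assert (CD : continuity_pt Dh t).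
  { unfold Dh. apply (continuity_pt_plus (fct_cte 1) (fun t => k * hfun t)); [apply continuity_pt_const; intros ? ?; auto|].
    apply (continuity_pt_scal hfun k t Ch). }
  unfold Phi2. apply (continuity_pt_div (fun t => (- t * k * h2 t * Dh t - 2 * (Dh t - t * k * h1 t) * (k * h1 t)))
    (fun t => Dh t ^ 3)).
  - repeat first [ apply (continuity_pt_minus (fun t => _) (fun t => _))
                 | apply (continuity_pt_mult (fun t => _) (fun t => _))
                 | apply (continuity_pt_opp (fun t => _))
                 | apply continuity_pt_id | assumption
                 | apply continuity_pt_const; intros ? ?; auto ].
  - apply (continuity_pt_mult (fun t => Dh t) (fun t => Dh t ^ 2)); auto.
    apply (continuity_pt_mult (fun t => Dh t) (fun t => Dh t ^ 1)); auto.
    apply (continuity_pt_mult (fun t => Dh t) (fun t => 1)); auto. apply continuity_pt_const; intros ? ?; auto.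
  - apply pow_nonzero; lra.
Qed.

Lemma div_le1 x y : 0 < y -> x <= y -> x / y <= 1.
Proof. intros. unfold Rdiv. rewrite <- (Rinv_r y) by lra. apply Rmult_le_compat_r; [apply Rlt_le, Rinv_0_lt_compat|]; lra. Qed.

Lemma Phi_bound t : Rabs (Phi t) <= / k.
Proof.
  unfold Phi. pose proof (Dh_ge1 t). pose proof (Dh_ge t). pose proof (Rabs_pos t).
  rewrite Rabs_div by lra. rewrite (Rabs_right (Dh t)) by lra.
  replace (Rabs t / Dh t) with ((Rabs t * k) / Dh t * / k) by (field; split; lra).
  rewrite <- (Rmult_1_l (/ k)) at 2. apply Rmult_le_compat_r; [apply Rlt_le, Rinv_0_lt_compat; lra|].
  apply div_le1; nra.
Qed.

Definition KK := 100 + 2 / (k * k).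

Lemma Phi1_bound t : Rabs (Phi1 t) * (1 + Rabs t) ^ 2 <= KK.
Proof.
  pose proof (Dh_ge1 t) as HD1. pose proof (Dh_ge t) as HD2. pose proof (Rabs_pos t).
  assert (Hkk : 0 < k * k) by nra.
  assert (0 < 2 / (k * k)) by (apply Rdiv_lt_0_compat; lra).
  unfold KK, Phi1. rewrite Rabs_div by (apply pow_nonzero; lra).
  rewrite (Rabs_right (Dh t ^ 2)) by (apply Rle_ge, pow_le; lra).
  destruct (Rle_dec (Rabs t) 1) as [Hin|Hout].
  - pose proof (hfun_le1 t Hin). pose proof (h1_bound t).
    assert (Dh t <= 2) by (unfold Dh; nra).
    assert (Rabs (Dh t - t * k * h1 t) <= 3).
    { assert (Rabs (t*k*h1 t) <= 1).
      { rewrite !Rabs_mult, (Rabs_right k) by lra. assert (Rabs t * k <= 1) by nra. pose proof (Rabs_pos (h1 t)). nra. }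
      pose proof (Rabs_triang (Dh t) (- (t*k*h1 t))) as HT. rewrite Rabs_Ropp in HT.
      rewrite (Rabs_right (Dh t)) in HT by lra. unfold Rminus. lra. }
    assert (Dh t ^ 2 >= 1) by nra.
    assert (A1 : Rabs (Dh t - t * k * h1 t) / Dh t ^ 2 <= 3).
    { apply Rle_trans with (Rabs (Dh t - t * k * h1 t)); [|lra]. unfold Rdiv.
      rewrite <- (Rmult_1_r (Rabs _)) at 2. apply Rmult_le_compat_l; [apply Rabs_pos|].
      rewrite <- Rinv_1. apply Rinv_le_contravar; lra. }
    assert (A3 : 0 <= Rabs (Dh t - t * k * h1 t) / Dh t ^ 2) by (apply Rdiv_le_0_compat; [apply Rabs_pos|nra]).
    assert (A2 : (1 + Rabs t) ^ 2 <= 4) by (simpl; nra).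
    apply Rle_trans with (3 * 4); [|lra].
    apply Rmult_le_compat; auto. apply pow_le; lra.
  - destruct (h_out t) as [E1 [E2 [E3 E4]]]; [lra|].
    replace (Dh t - t * k * h1 t) with 1 by (unfold Dh; rewrite E1; replace (t * k * h1 t) with (k * (t * h1 t)) by ring; rewrite E2; ring).
    rewrite Rabs_R1. set (X := 1 + Rabs t) in *. set (D := Dh t) in *.
    assert (HX : 0 < X) by (unfold X; lra).
    assert (1 / D ^ 2 * X ^ 2 <= 1 / (k * k)).
    { replace (1 / D ^ 2 * X ^ 2) with ((X / D) ^ 2) by (field; lra).
      assert (X / D <= / k). { replace (X / D) with ((k * X) / D * / k) by (field; lra).
        rewrite <- (Rmult_1_l (/ k)) at 2. apply Rmult_le_compat_r; [apply Rlt_le, Rinv_0_lt_compat; lra|].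
        apply div_le1; lra. }
      assert (0 <= X / D) by (apply Rdiv_le_0_compat; lra).
      replace (1 / (k * k)) with ((/ k) ^ 2) by (field; lra). apply pow_incr; lra. }
    assert (1 / (k*k) <= 2 / (k * k)) by (unfold Rdiv; apply Rmult_le_compat_r; [apply Rlt_le, Rinv_0_lt_compat; lra|lra]).
    lra.
Qed.

Lemma Phi2_bound t : Rabs (Phi2 t) * (1 + Rabs t) ^ 3 <= KK.
Proof.
  pose proof (Dh_ge1 t) as HD1. pose proof (Dh_ge t) as HD2. pose proof (Rabs_pos t).
  assert (Hkk : 0 < k * k) by nra.
  assert (0 < 2 / (k * k)) by (apply Rdiv_lt_0_compat; lra).
  unfold KK, Phi2. rewrite Rabs_div by (apply pow_nonzero; lra).
  rewrite (Rabs_right (Dh t ^ 3)) by (apply Rle_ge, pow_le; lra).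
  destruct (Rle_dec (Rabs t) 1) as [Hin|Hout].
  - pose proof (hfun_le1 t Hin). pose proof (h1_bound t). pose proof (h2_bound t).
    assert (Dh t <= 2) by (unfold Dh; nra).
    assert (Rabs (Dh t - t * k * h1 t) <= 3).
    { assert (Rabs (t*k*h1 t) <= 1).
      { rewrite !Rabs_mult, (Rabs_right k) by lra. assert (Rabs t * k <= 1) by nra. pose proof (Rabs_pos (h1 t)). nra. }
      pose proof (Rabs_triang (Dh t) (- (t*k*h1 t))) as HT. rewrite Rabs_Ropp in HT.
      rewrite (Rabs_right (Dh t)) in HT by lra. unfold Rminus. lra. }
    assert (Rabs (- t * k * h2 t * Dh t - 2 * (Dh t - t * k * h1 t) * (k * h1 t)) <= 9).
    { eapply Rle_trans; [apply Rabs_triang|]. rewrite Rabs_Ropp, !Rabs_mult, Rabs_Ropp.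
      rewrite (Rabs_right k), (Rabs_right (Dh t)), (Rabs_right 2) by lra.
      pose proof (Rabs_pos (h1 t)). pose proof (Rabs_pos (h2 t)).
      assert (Rabs t * k * Rabs (h2 t) * Dh t <= 3) by (assert (Rabs t * k <= 1) by nra; assert (Rabs (h2 t) * Dh t <= 3) by nra;
        assert (0 <= Rabs t * k) by nra; assert (0 <= Rabs (h2 t) * Dh t) by nra;
        replace (Rabs t * k * Rabs (h2 t) * Dh t) with ((Rabs t * k) * (Rabs (h2 t) * Dh t)) by ring; nra).
      assert (2 * Rabs (Dh t - t * k * h1 t) * (k * Rabs (h1 t)) <= 6).
      { assert (k * Rabs (h1 t) <= 1) by nra. pose proof (Rabs_pos (Dh t - t * k * h1 t)). nra. }
      lra. }
    assert (Dh t ^ 3 >= 1) by (simpl; nra).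
    set (NN := - t * k * h2 t * Dh t - 2 * (Dh t - t * k * h1 t) * (k * h1 t)) in *.
    assert (A1 : Rabs NN / Dh t ^ 3 <= 9).
    { apply Rle_trans with (Rabs NN); [|lra]. unfold Rdiv.
      rewrite <- (Rmult_1_r (Rabs _)) at 2. apply Rmult_le_compat_l; [apply Rabs_pos|].
      rewrite <- Rinv_1. apply Rinv_le_contravar; lra. }
    assert (A3 : 0 <= Rabs NN / Dh t ^ 3) by (apply Rdiv_le_0_compat; [apply Rabs_pos|lra]).
    assert (A2 : (1 + Rabs t) ^ 3 <= 8).
    { assert (0 <= 1 + Rabs t <= 2) by lra. replace 8 with (2 ^ 3) by ring. apply pow_incr; lra. }
    apply Rle_trans with (9 * 8); [|lra].
    apply Rmult_le_compat; auto. apply pow_le; lra.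
  - destruct (h_out t) as [E1 [E2 [E3 E4]]]; [lra|].
    replace (Dh t - t * k * h1 t) with 1 by (unfold Dh; rewrite E1; replace (t * k * h1 t) with (k * (t * h1 t)) by ring; rewrite E2; ring).
    rewrite E3. replace (- t * k * 0 * Dh t - 2 * 1 * (k * h1 t)) with (- (2 * k * h1 t)) by ring.
    rewrite Rabs_Ropp, !Rabs_mult, E4, (Rabs_right 2), (Rabs_right k) by lra.
    set (X := 1 + Rabs t) in *. set (D := Dh t) in *.
    assert (HX : 0 < X) by (unfold X; lra).
    assert (X / D <= / k). { replace (X / D) with ((k * X) / D * / k) by (field; lra).
        rewrite <- (Rmult_1_l (/ k)) at 2. apply Rmult_le_compat_r; [apply Rlt_le, Rinv_0_lt_compat; lra|].
        apply div_le1; lra. }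
    assert (0 <= X / D) by (apply Rdiv_le_0_compat; lra).
    assert ((X / D) ^ 3 <= (/ k) ^ 3) by (apply pow_incr; lra).
    replace (2 * k * 1 / D ^ 3 * X ^ 3) with (2 * k * (X / D) ^ 3) by (field; lra).
    assert (2 * k * (X / D) ^ 3 <= 2 * k * (/ k) ^ 3) by (apply Rmult_le_compat_l; lra).
    replace (2 * k * (/ k) ^ 3) with (2 / (k * k)) in H4 by (field; lra).
    lra.
Qed.

End PhiS.

Section FL.
Context {T : Type} (F : (T -> Prop) -> Prop) {FF : Filter F}.

Lemma fl_plus (f g : T -> R) (l1 l2 : R) : filterlim f F (locally l1) -> filterlim g F (locally l2) ->
  filterlim (fun x => f x + g x) F (locally (l1 + l2)).
Proof.
  intros H1 H2. apply (filterlim_comp_2 f g Rplus H1 H2).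
  exact (filterlim_plus (K := R_AbsRing) (V := R_NormedModule) l1 l2).
Qed.
Lemma fl_mult (f g : T -> R) (l1 l2 : R) : filterlim f F (locally l1) -> filterlim g F (locally l2) ->
  filterlim (fun x => f x * g x) F (locally (l1 * l2)).
Proof.
  intros H1 H2. apply (filterlim_comp_2 f g Rmult H1 H2).
  exact (filterlim_mult (K := R_AbsRing) l1 l2).
Qed.
Lemma fl_comp (f : T -> R) (phi : R -> R) (l : R) : filterlim f F (locally l) -> continuity_pt phi l ->
  filterlim (fun x => phi (f x)) F (locally (phi l)).
Proof.
  intros H1 H2. apply continuity_pt_filterlim in H2. exact (filterlim_comp _ _ _ f phi F _ _ H1 H2).
Qed.
Lemma fl_const (c : R) : filterlim (fun _ => c) F (locally c).
Proof. apply filterlim_const. Qed.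
Lemma fl_ext (f g : T -> R) (l : R) : F (fun x => f x = g x) -> filterlim f F (locally l) -> filterlim g F (locally l).
Proof.
  intros E H. apply filterlim_locally. intros eps. apply filterlim_locally with (eps := eps) in H.
  generalize (filter_and _ _ E H). apply filter_imp. intros x [<- Hx]; auto.
Qed.
End FL.

Section Gen2.
Variables (a b : ereal) (x0 : R).
Hypothesis Hx0 : inI a b x0.
#[local] Instance near_a_F2 : Filter (near_a a b) := filter_filter (ProperFilter := near_a_filter a b x0 Hx0).
#[local] Instance near_b_F2 : Filter (near_b a b) := filter_filter (ProperFilter := near_b_filter a b x0 Hx0).

Lemma lim_b_ge g c L : near_b a b (fun x => c <= g x) -> lim_b a b g (Fin L) -> c <= L.
Proof.
  intros H1 H2. destruct (Rle_dec c L) as [|Hn]; auto. exfalso.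
  assert (He : 0 < c - L) by lra. specialize (H2 _ He).
  destruct (near_b_ex a b _ (near_b_and a b x0 Hx0 _ _ H1 H2)) as [x [_ [A B]]].
  apply Rabs_def2 in B; lra.
Qed.
Lemma lim_b_le g c L : near_b a b (fun x => g x <= c) -> lim_b a b g (Fin L) -> L <= c.
Proof.
  intros H1 H2. destruct (Rle_dec L c) as [|Hn]; auto. exfalso.
  assert (He : 0 < L - c) by lra. specialize (H2 _ He).
  destruct (near_b_ex a b _ (near_b_and a b x0 Hx0 _ _ H1 H2)) as [x [_ [A B]]].
  apply Rabs_def2 in B; lra.
Qed.
Lemma lim_a_ge g c L : near_a a b (fun x => c <= g x) -> lim_a a b g (Fin L) -> c <= L.
Proof.
  intros H1 H2. destruct (Rle_dec c L) as [|Hn]; auto. exfalso.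
  assert (He : 0 < c - L) by lra. specialize (H2 _ He).
  destruct (near_a_ex a b _ (near_a_and a b x0 Hx0 _ _ H1 H2)) as [x [_ [A B]]].
  apply Rabs_def2 in B; lra.
Qed.
Lemma lim_a_le g c L : near_a a b (fun x => g x <= c) -> lim_a a b g (Fin L) -> L <= c.
Proof.
  intros H1 H2. destruct (Rle_dec L c) as [|Hn]; auto. exfalso.
  assert (He : 0 < L - c) by lra. specialize (H2 _ He).
  destruct (near_a_ex a b _ (near_a_and a b x0 Hx0 _ _ H1 H2)) as [x [_ [A B]]].
  apply Rabs_def2 in B; lra.
Qed.

Lemma lim_a_plus f g l1 l2 : lim_a a b f (Fin l1) -> lim_a a b g (Fin l2) -> lim_a a b (fun x => f x + g x) (Fin (l1 + l2)).
Proof. rewrite !(lim_a_fin a b x0 Hx0); intros; apply (fl_plus (near_a a b)); auto. Qed.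
Lemma lim_b_plus f g l1 l2 : lim_b a b f (Fin l1) -> lim_b a b g (Fin l2) -> lim_b a b (fun x => f x + g x) (Fin (l1 + l2)).
Proof. rewrite !(lim_b_fin a b x0 Hx0); intros; apply (fl_plus (near_b a b)); auto. Qed.
Lemma lim_a_mult f g l1 l2 : lim_a a b f (Fin l1) -> lim_a a b g (Fin l2) -> lim_a a b (fun x => f x * g x) (Fin (l1 * l2)).
Proof. rewrite !(lim_a_fin a b x0 Hx0); intros; apply (fl_mult (near_a a b)); auto. Qed.
Lemma lim_b_mult f g l1 l2 : lim_b a b f (Fin l1) -> lim_b a b g (Fin l2) -> lim_b a b (fun x => f x * g x) (Fin (l1 * l2)).
Proof. rewrite !(lim_b_fin a b x0 Hx0); intros; apply (fl_mult (near_b a b)); auto. Qed.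
Lemma lim_a_const c : lim_a a b (fun _ => c) (Fin c).
Proof. rewrite (lim_a_fin a b x0 Hx0); apply (fl_const (near_a a b)). Qed.
Lemma lim_b_const c : lim_b a b (fun _ => c) (Fin c).
Proof. rewrite (lim_b_fin a b x0 Hx0); apply (fl_const (near_b a b)). Qed.
Lemma lim_a_comp f phi l : lim_a a b f (Fin l) -> continuity_pt phi l -> lim_a a b (fun x => phi (f x)) (Fin (phi l)).
Proof. rewrite !(lim_a_fin a b x0 Hx0); intros; apply (fl_comp (near_a a b)); auto. Qed.
Lemma lim_b_comp f phi l : lim_b a b f (Fin l) -> continuity_pt phi l -> lim_b a b (fun x => phi (f x)) (Fin (phi l)).
Proof. rewrite !(lim_b_fin a b x0 Hx0); intros; apply (fl_comp (near_b a b)); auto. Qed.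

Lemma lim_a_notNInf f l c : lim_a a b f l -> near_a a b (fun x => c <= f x) -> l <> NInf.
Proof.
  intros H1 H2 ->. destruct (near_a_ex a b _ (near_a_and a b x0 Hx0 _ _ H2 (H1 c))) as [x [_ [A B]]]; lra.
Qed.
Lemma lim_a_notPInf f l c : lim_a a b f l -> near_a a b (fun x => f x <= c) -> l <> PInf.
Proof.
  intros H1 H2 ->. destruct (near_a_ex a b _ (near_a_and a b x0 Hx0 _ _ H2 (H1 c))) as [x [_ [A B]]]; lra.
Qed.
Lemma lim_b_notNInf f l c : lim_b a b f l -> near_b a b (fun x => c <= f x) -> l <> NInf.
Proof.
  intros H1 H2 ->. destruct (near_b_ex a b _ (near_b_and a b x0 Hx0 _ _ H2 (H1 c))) as [x [_ [A B]]]; lra.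
Qed.
Lemma lim_b_notPInf f l c : lim_b a b f l -> near_b a b (fun x => f x <= c) -> l <> PInf.
Proof.
  intros H1 H2 ->. destruct (near_b_ex a b _ (near_b_and a b x0 Hx0 _ _ H2 (H1 c))) as [x [_ [A B]]]; lra.
Qed.

End Gen2.

Section Main.
Variables (a b : ereal) (mu sigma : R -> R) (x0 : R) (stickya : bool)
  (c0 : R -> R) (c1 : R -> R -> ereal) (Fs : R).
Hypothesis Hx0 : inI a b x0.
Hypothesis Hmu : forall x, inI a b x -> continuity_pt mu x.
Hypothesis Hsig : forall x, inI a b x -> continuity_pt sigma x.
Hypothesis Hsig0 : forall x, inI a b x -> sigma x <> 0.
Hypothesis HA : Condition_A a b mu sigma x0 stickya.
Hypothesis HB : Condition_B a b mu sigma x0 stickya c0 c1.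
Hypothesis HFs : F0_inf a b mu sigma x0 c0 c1 (Fin Fs).
Hypothesis HC : Condition_C a b mu sigma x0 c0 c1.
Hypothesis HD : Condition_D a b mu sigma x0 stickya c0 Fs.

Local Notation I := (inI a b).
Local Notation sd := (sdens mu sigma x0).
Local Notation md := (mdens mu sigma x0).
Local Notation RI := Defs.RInt.
#[local] Instance naF : Filter (near_a a b) := filter_filter (ProperFilter := near_a_filter a b x0 Hx0).
#[local] Instance nbF : Filter (near_b a b) := filter_filter (ProperFilter := near_b_filter a b x0 Hx0).

Definition qf x := 2 * mu x / (sigma x) ^ 2.

Lemma sq_pos x : x <> 0 -> 0 < x ^ 2.
Proof. intros H; destruct (Rlt_or_le 0 x); [nra|]. assert (x < 0) by (destruct H0; [lra|congruence]). nra. Qed.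

Lemma sig2_pos x : I x -> 0 < (sigma x) ^ 2.
Proof. intros Hx. apply sq_pos, Hsig0, Hx. Qed.

Lemma cont_pow f n x : continuity_pt f x -> continuity_pt (fun y => f y ^ n) x.
Proof.
  intros H. induction n.
  - apply continuity_pt_const; intros ? ?; auto.
  - apply (continuity_pt_mult f (fun y => f y ^ n)); auto.
Qed.

Lemma qf_cont : contI a b qf.
Proof.
  intros x Hx. unfold qf. apply (continuity_pt_div (fun y => 2 * mu y) (fun y => sigma y ^ 2)).
  - apply (continuity_pt_scal mu 2 x (Hmu x Hx)).
  - apply cont_pow, Hsig, Hx.
  - apply Rgt_not_eq, sig2_pos, Hx.
Qed.

Lemma sd_pos x : 0 < sd x.
Proof. unfold sdens; apply exp_pos. Qed.

Lemma sd_d x : I x -> derivable_pt_lim sd x (- qf x * sd x).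
Proof.
  intros Hx. unfold sdens. change (fun u => 2 * mu u / sigma u ^ 2) with qf.
  assert (H1 : derivable_pt_lim (fun y => - RI qf x0 y) x (- qf x)).
  { apply (derivable_pt_lim_opp (fun y => RI qf x0 y)). apply (FTC a b); auto. apply qf_cont. }
  pose proof (derivable_pt_lim_comp _ exp x _ _ H1 (derivable_pt_lim_exp (- RI qf x0 x))) as H2.
  unfold comp in H2. replace (- qf x * exp (- RI qf x0 x)) with (exp (- RI qf x0 x) * - qf x) by ring.
  exact H2.
Qed.

Lemma sd_cont : contI a b sd.
Proof. apply (contI_deriv a b sd (fun x => - qf x * sd x)). apply sd_d. Qed.

Lemma md_pos x : I x -> 0 < md x.
Proof.
  intros Hx; unfold mdens. pose proof (sig2_pos x Hx). pose proof (sd_pos x).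
  apply Rdiv_lt_0_compat; [lra|]. apply Rmult_lt_0_compat; auto.
Qed.

Lemma md_cont : contI a b md.
Proof.
  intros x Hx; unfold mdens. pose proof (sig2_pos x Hx). pose proof (sd_pos x).
  apply (continuity_pt_div (fun _ => 1) (fun y => sigma y ^ 2 * sd y)).
  - apply continuity_pt_const; intros ? ?; auto.
  - apply (continuity_pt_mult (fun y => sigma y ^ 2) sd). apply cont_pow, Hsig, Hx. apply sd_cont, Hx.
  - apply Rgt_not_eq. apply Rmult_lt_0_compat; auto.
Qed.

Lemma md_sd x : I x -> md x * sd x = / (sigma x) ^ 2.
Proof.
  intros Hx; unfold mdens. pose proof (sig2_pos x Hx). pose proof (sd_pos x). pose proof (Hsig0 x Hx). field; repeat split; try lra; auto.
Qed.

Lemma c0_cont : contI a b c0.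
Proof.
  destruct HB as [Hrc _]. intros x Hx. apply continuity_pt_locally. intros eps.
  destruct (Hrc x (or_introl Hx) eps (cond_pos eps)) as [d [Hd H]].
  destruct (inI_open a b x Hx) as [d2 [Hd2 Ho]].
  apply locally_of. exists (Rmin d d2); split. apply Rmin_glb_lt; lra.
  intros z Hz. apply H. left; apply Ho. eapply Rlt_le_trans; [exact Hz|apply Rmin_r].
  eapply Rlt_le_trans; [exact Hz|apply Rmin_l].
Qed.

Lemma c0_pos x : I x -> 0 <= c0 x.
Proof. destruct HB as [_ [H _]]. intros Hx; apply H; left; auto. Qed.

Lemma contI_mult f g : contI a b f -> contI a b g -> contI a b (fun x => f x * g x).
Proof. intros Hf Hg x Hx. apply (continuity_pt_mult f g); auto. Qed.
Lemma contI_plus f g : contI a b f -> contI a b g -> contI a b (fun x => f x + g x).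
Proof. intros Hf Hg x Hx. apply (continuity_pt_plus f g); auto. Qed.
Lemma contI_const c : contI a b (fun _ => c).
Proof. intros x Hx. apply continuity_pt_const; intros ? ?; auto. Qed.

Lemma RI_incr f y z w : contI a b f -> (forall x, I x -> 0 <= f x) -> I y -> I z -> I w -> z <= w ->
  RI f y z <= RI f y w.
Proof.
  intros Hf Hp Hy Hz Hw Hzw.
  apply (incr_I a b (fun t => RI f y t) f z w); auto.
  - intros; apply (FTC a b); auto.
  - intros c Hc; apply Hp. apply (inI_between a b z c w); auto; lra.
Qed.

Lemma IntB_lim f y : contI a b f -> (forall x, I x -> 0 <= f x) -> I y ->
  lim_b a b (RI f y) (IntB a b f y).
Proof.
  intros Hf Hp Hy. destruct (lim_b_incr a b (RI f y) y Hy) as [l [Hl _]].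
  - intros; apply RI_incr; auto.
  - replace (IntB a b f y) with l; [exact Hl|]. symmetry. apply (limval_b_eq a b x0 Hx0). exact Hl.
Qed.

Definition Tf f y := real_of (IntB a b f y).

Lemma T_prop f : contI a b f -> (forall x, I x -> 0 <= f x) -> isfin (IntB a b f x0) ->
  forall y, I y -> lim_b a b (RI f y) (Fin (Tf f y)) /\ Tf f y = Tf f x0 + RI f y x0.
Proof.
  intros Hf Hp [r Hr] y Hy.
  pose proof (IntB_lim f x0 Hf Hp Hx0) as H0. rewrite Hr in H0.
  assert (H1 : lim_b a b (RI f y) (Fin (RI f y x0 + r))).
  { apply (lim_b_ext a b x0 Hx0) with (fun z => RI f y x0 + RI f x0 z).
    - intros z Hz. apply (RI_chasles a b); auto.
    - apply (lim_b_plus a b x0 Hx0); auto. apply (lim_b_const a b x0 Hx0). }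
  assert (E : IntB a b f y = Fin (RI f y x0 + r)) by (apply (limval_b_eq a b x0 Hx0); exact H1).
  unfold Tf. rewrite Hr, E. simpl.
  split; [exact H1|ring].
Qed.

Lemma T_d f : contI a b f -> (forall x, I x -> 0 <= f x) -> isfin (IntB a b f x0) ->
  forall x, I x -> derivable_pt_lim (Tf f) x (- f x).
Proof.
  intros Hf Hp Hfin x Hx.
  apply deriv_loc with (fun y => Tf f x0 + RI f y x0).
  - destruct (inI_open a b x Hx) as [d [Hd Ho]]. exists d; split; auto.
    intros z Hz. apply (T_prop f Hf Hp Hfin z (Ho z Hz)).
  - replace (- f x) with (0 + - f x) by ring.
    apply (derivable_pt_lim_plus (fun _ => Tf f x0) (fun y => RI f y x0)).
    apply derivable_pt_lim_const. apply (FTC' a b); auto.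
Qed.

Lemma T_lim0 f : contI a b f -> (forall x, I x -> 0 <= f x) -> isfin (IntB a b f x0) ->
  lim_b a b (Tf f) (Fin 0).
Proof.
  intros Hf Hp Hfin. pose proof (proj1 (T_prop f Hf Hp Hfin x0 Hx0)) as H0.
  apply (lim_b_ext a b x0 Hx0) with (fun y => Tf f x0 + - RI f x0 y).
  - intros y Hy. rewrite (proj2 (T_prop f Hf Hp Hfin y Hy)). rewrite (RI_swap a b f y x0); auto.
  - replace 0 with (Tf f x0 + - Tf f x0) by ring. apply (lim_b_plus a b x0 Hx0). apply (lim_b_const a b x0 Hx0).
    apply (lim_b_comp a b x0 Hx0 _ Ropp); auto. apply continuity_pt_opp, continuity_pt_id.
Qed.

Lemma T_nonneg f : contI a b f -> (forall x, I x -> 0 <= f x) -> isfin (IntB a b f x0) ->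
  forall y, I y -> 0 <= Tf f y.
Proof.
  intros Hf Hp Hfin y Hy. apply (lim_b_ge a b x0 Hx0 (RI f y)); [|apply T_prop; auto].
  exists y; split; auto. intros z Hz Hyz.
  assert (RI f y y = 0) by (pose proof (RI_swap a b f y y Hf Hy Hy); lra).
  rewrite <- H. apply RI_incr; auto; lra.
Qed.

Lemma T_cont f : contI a b f -> (forall x, I x -> 0 <= f x) -> isfin (IntB a b f x0) -> contI a b (Tf f).
Proof. intros. apply (contI_deriv a b _ (fun x => - f x)). apply T_d; auto. Qed.


Lemma dminus f g x l1 l2 : derivable_pt_lim f x l1 -> derivable_pt_lim g x l2 ->
  derivable_pt_lim (fun t => f t - g t) x (l1 - l2).
Proof. intros; apply (derivable_pt_lim_minus f g x l1 l2); auto. Qed.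
Lemma dplus f g x l1 l2 : derivable_pt_lim f x l1 -> derivable_pt_lim g x l2 ->
  derivable_pt_lim (fun t => f t + g t) x (l1 + l2).
Proof. intros; apply (derivable_pt_lim_plus f g x l1 l2); auto. Qed.
Lemma dmult f g x l1 l2 : derivable_pt_lim f x l1 -> derivable_pt_lim g x l2 ->
  derivable_pt_lim (fun t => f t * g t) x (l1 * g x + f x * l2).
Proof. intros; apply (derivable_pt_lim_mult f g x l1 l2); auto. Qed.
Lemma dscal c f x l : derivable_pt_lim f x l -> derivable_pt_lim (fun t => c * f t) x (c * l).
Proof. intros; apply (derivable_pt_lim_scal f c x l); auto. Qed.
Lemma dconst c x : derivable_pt_lim (fun _ => c) x 0.
Proof. apply derivable_pt_lim_const. Qed.
Lemma dext f x l l' : l = l' -> derivable_pt_lim f x l -> derivable_pt_lim f x l'.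
Proof. intros ->; auto. Qed.

Lemma RI_zero f y : contI a b f -> I y -> RI f y y = 0.
Proof. intros Hf Hy. pose proof (RI_swap a b f y y Hf Hy Hy). lra. Qed.

Lemma RI_pos f y z : contI a b f -> (forall x, I x -> 0 <= f x) -> I y -> I z -> y <= z -> 0 <= RI f y z.
Proof. intros. rewrite <- (RI_zero f y) by auto. apply RI_incr; auto; lra. Qed.

Lemma cmp_I F F' G G' y z : (forall x, I x -> derivable_pt_lim F x (F' x)) ->
  (forall x, I x -> derivable_pt_lim G x (G' x)) -> I y -> I z -> y <= z ->
  (forall c, y < c < z -> F' c <= G' c) -> F z - F y <= G z - G y.
Proof.
  intros HF HG Hy Hz Hyz H.
  assert (HH : (fun t => G t - F t) y <= (fun t => G t - F t) z).
  { apply (incr_I a b (fun t => G t - F t) (fun t => G' t - F' t)); auto.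
    - intros x Hx. apply derivable_pt_lim_minus; auto.
    - intros c Hc; specialize (H c Hc); lra. }
  simpl in HH; lra.
Qed.

Lemma incr_lim_b_le F z2 L : I z2 -> (forall x y, I x -> I y -> x <= y -> z2 < x -> F x <= F y) ->
  lim_b a b F (Fin L) -> forall x, I x -> z2 < x -> F x <= L.
Proof.
  intros Hz2 Hm Hl x Hx Hzx. apply (lim_b_ge a b x0 Hx0 F); auto.
  exists x; split; auto. intros y Hy Hxy. apply Hm; auto; lra.
Qed.
Lemma decr_lim_a_le F y2 L : I y2 -> (forall x y, I x -> I y -> x <= y -> y < y2 -> F y <= F x) ->
  lim_a a b F (Fin L) -> forall x, I x -> x < y2 -> F x <= L.
Proof.
  intros Hy2 Hm Hl x Hx Hxy. apply (lim_a_ge a b x0 Hx0 F); auto.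
  exists x; split; auto. intros y Hy Hyx. apply Hm; auto; lra.
Qed.

Local Notation fc := (fun x => c0 x * md x).
Local Notation f2 := (fun v => 2 * c0 v * md v).

Lemma fc_cont : contI a b fc.
Proof. apply contI_mult; [apply c0_cont|apply md_cont]. Qed.
Lemma fc_pos x : I x -> 0 <= fc x.
Proof. intros Hx. pose proof (c0_pos x Hx); pose proof (md_pos x Hx). nra. Qed.
Lemma f2_cont : contI a b f2.
Proof. apply contI_mult; [apply contI_mult; [apply contI_const|apply c0_cont]|apply md_cont]. Qed.
Lemma f2_pos x : I x -> 0 <= f2 x.
Proof. intros Hx. pose proof (c0_pos x Hx); pose proof (md_pos x Hx). nra. Qed.
Lemma md_nn x : I x -> 0 <= md x.
Proof. intros; apply Rlt_le, md_pos; auto. Qed.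

Lemma fc_fin : isfin (IntB a b fc x0).
Proof. destruct HB as [_ [_ [_ [_ [_ [_ [H _]]]]]]]. apply H, Hx0. Qed.

Lemma f2_rel y : I y -> IntB a b f2 y = Fin (2 * Tf fc y).
Proof.
  intros Hy. apply (limval_b_eq a b x0 Hx0).
  apply (lim_b_ext a b x0 Hx0) with (fun z => 2 * RI fc y z).
  - intros z Hz.
    assert (HD1 : forall x, I x -> derivable_pt_lim (fun t => RI f2 y t - 2 * RI fc y t) x (f2 x - 2 * fc x)).
    { intros x Hx. apply (dminus (fun t => RI f2 y t) (fun t => 2 * RI fc y t)).
      apply (FTC a b f2); auto. apply f2_cont.
      apply (dscal 2 (fun t => RI fc y t)). apply (FTC a b fc); auto. apply fc_cont. }
    assert (H0 : forall c, I c -> f2 c - 2 * fc c = 0) by (intros; ring).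
    pose proof (const_I a b _ _ y z HD1 Hy Hz H0) as E. simpl in E.
    rewrite (RI_zero f2), (RI_zero fc) in E by (auto; try apply fc_cont; try apply f2_cont). lra.
  - apply (lim_b_mult a b x0 Hx0). apply (lim_b_const a b x0 Hx0).
    apply (T_prop fc fc_cont fc_pos fc_fin y Hy).
Qed.

Lemma Tf2 y : I y -> Tf f2 y = 2 * Tf fc y.
Proof. intros Hy. unfold Tf at 1. rewrite f2_rel; auto. Qed.

Lemma f2_fin : isfin (IntB a b f2 x0).
Proof. rewrite f2_rel by auto. eexists; eauto. Qed.

Lemma cls_b_cases : cls_b a b mu sigma x0 = Entrance \/ cls_b a b mu sigma x0 = Natural.
Proof. destruct HC as [_ [H|[H _]]]; auto. Qed.
Lemma cls_a_cases : attainable_a a b mu sigma x0 \/ cls_a a b mu sigma x0 = Natural.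
Proof. destruct HC as [[H|[H _]] _]; auto. Qed.

Lemma RI_sd_pos y z : I y -> I z -> y < z -> 0 < RI sd y z.
Proof.
  intros Hy Hz Hyz.
  destruct (mvt_I a b (fun t => RI sd y t) sd y z) as [c [Hc E]]; auto.
  - intros x Hx; apply (FTC a b); auto; apply sd_cont.
  - rewrite RI_zero in E by (auto; apply sd_cont). pose proof (sd_pos c). nra.
Qed.

Lemma md_fin : isfin (IntB a b md x0).
Proof.
  destruct cls_b_cases as [He|Hn].
  2:{ destruct HA as [_ [_ [_ [H _]]]]. apply H; auto. }
  assert (HN : exists rN, N_b a b mu sigma x0 = Fin rN).
  { unfold cls_b, btype_of in He. destruct (Sigma_b a b mu sigma x0); destruct (N_b a b mu sigma x0); try discriminate; eauto. }
  destruct HN as [rN HN].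
  set (Nf := fun u => RI sd x0 u * md u).
  assert (HNc : contI a b Nf).
  { apply contI_mult; [|apply md_cont]. apply (contI_deriv a b _ sd). intros; apply (FTC a b); auto; apply sd_cont. }
  assert (HNp : forall u, I u -> x0 <= u -> 0 <= Nf u).
  { intros u Hu Hxu. unfold Nf. pose proof (md_pos u Hu). pose proof (RI_pos sd x0 u sd_cont (fun x _ => Rlt_le _ _ (sd_pos x)) Hx0 Hu Hxu). nra. }
  destruct (lim_b_incr a b (RI Nf x0) x0 Hx0) as [l [Hl _]].
  { intros x y Hx Hy Hxy Hx0x. apply (incr_I a b (fun t => RI Nf x0 t) Nf); auto.
    intros; apply (FTC a b); auto. intros c Hc; apply HNp; [apply (inI_between a b x c y)|]; auto; lra. }
  assert (l = Fin rN). { rewrite <- HN. symmetry. apply (limval_b_eq a b x0 Hx0). exact Hl. }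
  subst l.
  assert (HNle : forall z, I z -> x0 < z -> RI Nf x0 z <= rN).
  { apply (incr_lim_b_le (RI Nf x0) x0); auto. intros x y Hx Hy Hxy Hx0x.
    apply (incr_I a b (fun t => RI Nf x0 t) Nf); auto.
    intros; apply (FTC a b); auto. intros c Hc; apply HNp; [apply (inI_between a b x c y)|]; auto; lra. }
  destruct (exists_above a b x0 Hx0) as [x1 [Hx1 Hx01]].
  set (k := RI sd x0 x1). assert (Hk : 0 < k) by (apply RI_sd_pos; auto).
  assert (Hbd : forall z, I z -> x1 < z -> RI md x0 z <= RI md x0 x1 + rN / k).
  { intros z Hz Hx1z.
    assert (C1 : k * RI md x1 z <= RI Nf x1 z).
    { assert (HH := cmp_I (fun t => k * RI md x1 t) (fun t => k * md t) (fun t => RI Nf x1 t) Nf x1 z).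
      rewrite !RI_zero in HH by (auto; try apply md_cont). rewrite Rmult_0_r, !Rminus_0_r in HH.
      apply HH; auto; try lra.
      - intros x Hx. apply dscal. apply (FTC a b); auto. apply md_cont.
      - intros x Hx. apply (FTC a b); auto.
      - intros c Hc. assert (Ic : I c) by (apply (inI_between a b x1 c z); auto; lra).
        unfold Nf. pose proof (md_pos c Ic).
        assert (k <= RI sd x0 c).
        { unfold k. apply RI_incr; auto. apply sd_cont. intros; apply Rlt_le, sd_pos. lra. }
        nra. }
    assert (C2 : RI Nf x0 x1 + RI Nf x1 z = RI Nf x0 z) by (apply (RI_chasles a b); auto).
    assert (C3 : 0 <= RI Nf x0 x1).
    { rewrite <- (RI_zero Nf x0) by auto. apply (incr_I a b (fun t => RI Nf x0 t) Nf); auto; try lra.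
      intros; apply (FTC a b); auto. intros c Hc; apply HNp; [apply (inI_between a b x0 c x1)|]; auto; lra. }
    assert (C4 : RI md x0 x1 + RI md x1 z = RI md x0 z) by (apply (RI_chasles a b); auto; apply md_cont).
    specialize (HNle z Hz ltac:(lra)).
    assert (RI md x1 z <= rN / k).
    { apply Rmult_le_reg_l with k; auto. replace (k * (rN / k)) with rN by (field; lra). lra. }
    lra. }
  pose proof (IntB_lim md x0 md_cont md_nn Hx0) as Hm.
  destruct (IntB a b md x0) as [r| |] eqn:E.
  - eexists; eauto.
  - exfalso. refine (lim_b_notPInf a b x0 Hx0 (RI md x0) PInf (RI md x0 x1 + rN / k) Hm _ eq_refl).
    exists x1; split; [auto|]. intros z Hz Hxz. apply Hbd; auto.
  - exfalso. refine (lim_b_notNInf a b x0 Hx0 (RI md x0) NInf 0 Hm _ eq_refl).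
    exists x0; split; [auto|]. intros z Hz Hxz. apply RI_pos; auto. apply md_cont. apply md_nn. lra.
Qed.

Local Notation Tm := (Tf md).
Local Notation G0f := (G0 a b mu sigma x0 c0 Fs).

Definition D1 x := Tf f2 x * sd x - Fs * (2 * Tm x * sd x).
Definition D2 x := (- f2 x * sd x + Tf f2 x * (- qf x * sd x))
   - Fs * (2 * (- md x * sd x + Tm x * (- qf x * sd x))).

Lemma Tf2_cont : contI a b (Tf f2).
Proof. apply T_cont. apply f2_cont. apply f2_pos. apply f2_fin. Qed.
Lemma Tm_cont : contI a b Tm.
Proof. apply T_cont. apply md_cont. apply md_nn. apply md_fin. Qed.

Lemma G0_d x : I x -> derivable_pt_lim G0f x (D1 x).
Proof.
  intros Hx. unfold G0, D1.
  apply (dminus (g0 a b mu sigma x0 c0) (fun t => Fs * zeta a b mu sigma x0 t)).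
  - unfold g0. apply (FTC a b (fun u => Tf f2 u * sd u)); auto.
    apply contI_mult; [apply Tf2_cont|apply sd_cont].
  - apply (dscal Fs (zeta a b mu sigma x0)). unfold zeta.
    apply (FTC a b (fun u => 2 * Tm u * sd u)); auto.
    apply contI_mult; [apply contI_mult; [apply contI_const|apply Tm_cont]|apply sd_cont].
Qed.

Lemma Dv_G0 x : I x -> Dv G0f x = D1 x.
Proof. intros; apply Dv_eq, G0_d; auto. Qed.

Lemma D1_d x : I x -> derivable_pt_lim D1 x (D2 x).
Proof.
  intros Hx. unfold D1, D2.
  apply (dminus (fun t => Tf f2 t * sd t) (fun t => Fs * (2 * Tm t * sd t))).
  - apply (dmult (Tf f2) sd). apply (T_d f2); auto. apply f2_cont. apply f2_pos. apply f2_fin. apply sd_d; auto.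
  - apply (dscal Fs (fun t => 2 * Tm t * sd t)).
    apply (dext _ _ ((0 * Tm x + 2 * (- md x)) * sd x + 2 * Tm x * (- qf x * sd x))); [ring|].
    apply (dmult (fun t => 2 * Tm t) sd); [|apply sd_d; auto].
    apply (dmult (fun _ => 2) Tm). apply dconst. apply (T_d md); auto. apply md_cont. apply md_nn. apply md_fin.
Qed.

Lemma D1_cont : contI a b D1.
Proof. apply (contI_deriv a b D1 D2). apply D1_d. Qed.

Lemma contI_opp f : contI a b f -> contI a b (fun t => - f t).
Proof. intros Hf x Hx. apply (continuity_pt_opp f); auto. Qed.
Lemma contI_minus f g : contI a b f -> contI a b g -> contI a b (fun t => f t - g t).
Proof. intros Hf Hg x Hx. apply (continuity_pt_minus f g); auto. Qed.

Lemma D2_cont : contI a b D2.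
Proof.
  unfold D2.
  apply contI_minus; [apply contI_plus|].
  - apply contI_mult; [apply contI_opp, f2_cont|apply sd_cont].
  - apply contI_mult; [apply Tf2_cont|]. apply contI_mult; [apply contI_opp, qf_cont|apply sd_cont].
  - apply contI_mult; [apply contI_const|]. apply contI_mult; [apply contI_const|]. apply contI_plus.
    + apply contI_mult; [apply contI_opp, md_cont|apply sd_cont].
    + apply contI_mult; [apply Tm_cont|]. apply contI_mult; [apply contI_opp, qf_cont|apply sd_cont].
Qed.

Lemma AG0 x : I x -> (sigma x) ^ 2 / 2 * D2 x + mu x * D1 x = Fs - c0 x.
Proof.
  intros Hx. unfold D1, D2, qf. pose proof (md_sd x Hx) as E. pose proof (sig2_pos x Hx).
  pose proof (Hsig0 x Hx).
  replace (2 * c0 x * md x * sd x) with (2 * c0 x * (md x * sd x)) by ring.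
  replace ((sigma x) ^ 2 / 2 * (- (2 * c0 x * md x) * sd x + Tf f2 x * (- (2 * mu x / sigma x ^ 2) * sd x) -
     Fs * (2 * (- md x * sd x + Tm x * (- (2 * mu x / sigma x ^ 2) * sd x)))) + mu x * (Tf f2 x * sd x - Fs * (2 * Tm x * sd x)))
   with (- c0 x * ((sigma x) ^ 2 * (md x * sd x)) + Fs * ((sigma x) ^ 2 * (md x * sd x))) by (field; auto).
  rewrite E. field. lra.
Qed.

Lemma D1_W x : I x -> D1 x = 2 * sd x * (Tf fc x - Fs * Tm x).
Proof. intros Hx. unfold D1. rewrite Tf2 by auto. ring. Qed.

Lemma inI_low y z : I z -> ereal_lt a (Fin y) -> y <= z -> I y.
Proof. unfold inI, ereal_lt; destruct b; intros [? ?]; intuition lra. Qed.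
Lemma inI_up y z : I z -> ereal_lt (Fin y) b -> z <= y -> I y.
Proof. unfold inI, ereal_lt; destruct a; intros [? ?]; intuition lra. Qed.

Lemma attain_fin : attainable_a a b mu sigma x0 -> exists r, a = Fin r.
Proof.
  intros Hat. destruct a as [r| |] eqn:Ea; eauto.
  - exfalso. destruct Hx0 as [H _]. exact H.
  - exfalso. destruct HA as [_ [_ [_ [_ [H _]]]]]. specialize (H eq_refl).
    destruct Hat as [Hr|Hr]; rewrite H in Hr; discriminate.
Qed.

Lemma entr_fin : cls_b a b mu sigma x0 = Entrance -> exists r, b = Fin r.
Proof.
  intros He. destruct b as [r| |] eqn:Eb; eauto.
  - exfalso. destruct HA as [_ [_ [_ [_ [_ H]]]]]. specialize (H eq_refl). rewrite H in He; discriminate.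
  - exfalso. destruct Hx0 as [_ H]. exact H.
Qed.

Lemma Fs_le_F0 X : (exists yh zh, inE a b mu sigma x0 yh /\ inE a b mu sigma x0 zh /\ yh < zh /\
    ereal_lt (F0 a b mu sigma x0 c0 c1 yh zh) X) -> forall c, X = Fin c -> Fs < c.
Proof.
  intros [yh [zh [Hy [Hz [Hyz Hlt]]]]] c ->.
  destruct HFs as [Hinf _]. specialize (Hinf yh zh (conj Hy (conj Hz (Rlt_le _ _ Hyz)))).
  destruct (F0 a b mu sigma x0 c0 c1 yh zh) as [v| |]; unfold ereal_le, ereal_lt in *; simpl in *;
    destruct Hinf as [H|H]; try discriminate; try tauto; try (injection H; intros; subst); lra.
Qed.

Lemma c0a_info : (c0A a b mu sigma x0 c0 = PInf /\ lim_a a b c0 PInf) \/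
  (exists c, c0A a b mu sigma x0 c0 = Fin c /\ lim_a a b c0 (Fin c) /\
     (cls_a a b mu sigma x0 = Natural -> Fs < c)).
Proof.
  destruct HC as [[Hat|[Hnat Hc]] _].
  - destruct (attain_fin Hat) as [r Er]. right. exists (c0 r).
    assert (Hcl : c0A a b mu sigma x0 c0 = Fin (c0 r)).
    { unfold c0A. destruct Hat as [H|H]; rewrite H; rewrite Er; reflexivity. }
    split; [exact Hcl|split].
    + intros eps He. destruct HB as [Hrc _].
      assert (HEr : inE a b mu sigma x0 r) by (right; left; split; auto).
      destruct (Hrc r HEr eps He) as [d [Hd Hdd]].
      assert (Hrx : r < x0) by (destruct Hx0 as [H _]; rewrite Er in H; exact H).
      exists (Rmin x0 (r + d / 2)). split.
      * apply (inI_low _ x0); auto. rewrite Er; simpl. apply Rmin_glb_lt; lra. apply Rmin_l.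
      * intros x Hx Hxl. apply Hdd. left; auto.
        assert (r < x) by (destruct Hx as [H _]; rewrite Er in H; exact H).
        pose proof (Rmin_r x0 (r + d / 2)). apply Rabs_def1; lra.
    + intros Hn. destruct Hat as [H|H]; rewrite H in Hn; discriminate.
  - destruct HB as [_ [Hp [Hla _]]]. destruct (Hla Hnat) as [l Hl].
    assert (Ec : c0A a b mu sigma x0 c0 = l).
    { unfold c0A. rewrite Hnat. apply (limval_a_eq a b x0 Hx0). exact Hl. }
    destruct l as [c| |].
    + right. exists c. split; auto. split; auto. intros _.
      destruct Hc as [Hp'|[_ [_ Hex]]]. rewrite Ec in Hp'; discriminate.
      apply (Fs_le_F0 _ Hex c Ec).
    + left; split; auto.
    + exfalso. refine (lim_a_notNInf a b x0 Hx0 c0 NInf 0 Hl _ eq_refl).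
      exists x0; split; auto. intros x Hx _. apply Hp. left; auto.
Qed.

Lemma c0b_info : (c0B a b mu sigma x0 c0 = PInf /\ lim_b a b c0 PInf) \/
  (exists c, c0B a b mu sigma x0 c0 = Fin c /\ lim_b a b c0 (Fin c) /\
     (cls_b a b mu sigma x0 = Natural -> Fs < c)).
Proof.
  destruct HC as [_ [Hen|[Hnat Hc]]].
  - destruct (entr_fin Hen) as [r Er]. right. exists (c0 r).
    assert (Hcl : c0B a b mu sigma x0 c0 = Fin (c0 r)).
    { unfold c0B. rewrite Hen, Er. reflexivity. }
    split; [exact Hcl|split].
    + intros eps He. destruct HB as [Hrc _].
      assert (HEr : inE a b mu sigma x0 r) by (right; right; split; auto).
      destruct (Hrc r HEr eps He) as [d [Hd Hdd]].
      assert (Hrx : x0 < r) by (destruct Hx0 as [_ H]; rewrite Er in H; exact H).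
      exists (Rmax x0 (r - d / 2)). split.
      * apply (inI_up _ x0); auto. rewrite Er; simpl. apply Rmax_lub_lt; lra. apply Rmax_l.
      * intros x Hx Hxl. apply Hdd. left; auto.
        assert (x < r) by (destruct Hx as [_ H]; rewrite Er in H; exact H).
        pose proof (Rmax_r x0 (r - d / 2)). apply Rabs_def1; lra.
    + intros Hn. rewrite Hen in Hn; discriminate.
  - destruct HB as [_ [Hp [_ [Hlb _]]]]. destruct (Hlb Hnat) as [l Hl].
    assert (Ec : c0B a b mu sigma x0 c0 = l).
    { unfold c0B. rewrite Hnat. apply (limval_b_eq a b x0 Hx0). exact Hl. }
    destruct l as [c| |].
    + right. exists c. split; auto. split; auto. intros _.
      destruct Hc as [Hp'|[_ [_ Hex]]]. rewrite Ec in Hp'; discriminate.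
      apply (Fs_le_F0 _ Hex c Ec).
    + left; split; auto.
    + exfalso. refine (lim_b_notNInf a b x0 Hx0 c0 NInf 0 Hl _ eq_refl).
      exists x0; split; auto. intros x Hx _. apply Hp. left; auto.
Qed.

Definition Wf x := Tf fc x - Fs * Tm x.

Lemma W_d x : I x -> derivable_pt_lim Wf x (- (c0 x - Fs) * md x).
Proof.
  intros Hx. unfold Wf.
  apply (dext _ _ (- fc x - Fs * (- md x))); [ring|].
  apply (dminus (Tf fc) (fun t => Fs * Tm t)).
  - apply (T_d fc); auto. apply fc_cont. apply fc_pos. apply fc_fin.
  - apply (dscal Fs Tm). apply (T_d md); auto. apply md_cont. apply md_nn. apply md_fin.
Qed.

Lemma G0_incr x y : I x -> I y -> x <= y -> (forall c, x < c < y -> 0 <= D1 c) -> G0f x <= G0f y.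
Proof. intros. apply (incr_I a b G0f D1); auto. apply G0_d. Qed.
Lemma G0_decr x y : I x -> I y -> x <= y -> (forall c, x < c < y -> D1 c <= 0) -> G0f y <= G0f x.
Proof.
  intros Hx Hy Hxy H.
  assert (- G0f x <= - G0f y); [|lra].
  apply (incr_I a b (fun t => - G0f t) (fun t => - D1 t)); auto.
  - intros z Hz. apply derivable_pt_lim_opp, G0_d; auto.
  - intros c Hc; specialize (H c Hc); lra.
Qed.

Lemma sd_W_sign x : I x -> (0 <= Wf x -> 0 <= D1 x) /\ (Wf x <= 0 -> D1 x <= 0).
Proof.
  intros Hx. rewrite D1_W by auto. fold (Wf x). pose proof (sd_pos x). split; intros; nra.
Qed.

Lemma G0_lim_a_nat y2 : I y2 -> (forall x, I x -> x < y2 -> Fs < c0 x) -> exists l, lim_a a b G0f l.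
Proof.
  intros Hy2 Hc.
  assert (Wdec : forall x y, I x -> I y -> x <= y -> y < y2 -> Wf y <= Wf x).
  { intros x y Hx Hy Hxy Hyy.
    assert (- Wf x <= - Wf y); [|lra].
    apply (incr_I a b (fun t => - Wf t) (fun t => (c0 t - Fs) * md t)); auto.
    - intros z Hz. apply (dext _ _ (- (- (c0 z - Fs) * md z))); [ring|]. apply derivable_pt_lim_opp, W_d; auto.
    - intros c [Hc1 Hc2]. assert (Ic : I c) by (apply (inI_between a b x c y); auto; lra).
      pose proof (Hc c Ic ltac:(lra)). pose proof (md_pos c Ic). nra. }
  destruct (classic (exists x3, I x3 /\ x3 < y2 /\ 0 < Wf x3)) as [[x3 [Hx3 [Hx32 HW]]]|Hn].
  - destruct (lim_a_incr a b G0f x3 Hx3) as [l [Hl _]]; [|exists l; auto].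
    intros x y Hx Hy Hxy Hyx3. apply G0_incr; auto. intros c Hc'.
    assert (Ic : I c) by (apply (inI_between a b x c y); auto; lra).
    apply (sd_W_sign c Ic). assert (Wf x3 <= Wf c) by (apply Wdec; auto; lra). lra.
  - destruct (lim_a_decr a b x0 Hx0 G0f y2 Hy2) as [l [Hl _]]; [|exists l; auto].
    intros x y Hx Hy Hxy Hyx3. apply G0_decr; auto. intros c Hc'.
    assert (Ic : I c) by (apply (inI_between a b x c y); auto; lra).
    apply (sd_W_sign c Ic). destruct (Rle_dec (Wf c) 0) as [|HH]; auto.
    exfalso; apply Hn; exists c; split; auto; split; lra.
Qed.

Lemma G0_lim_b_nat z2 : I z2 -> (forall x, I x -> z2 < x -> Fs < c0 x) -> exists l, lim_b a b G0f l.
Proof.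
  intros Hz2 Hc.
  assert (Wdec : forall x y, I x -> I y -> x <= y -> z2 < x -> Wf y <= Wf x).
  { intros x y Hx Hy Hxy Hyy.
    assert (- Wf x <= - Wf y); [|lra].
    apply (incr_I a b (fun t => - Wf t) (fun t => (c0 t - Fs) * md t)); auto.
    - intros z Hz. apply (dext _ _ (- (- (c0 z - Fs) * md z))); [ring|]. apply derivable_pt_lim_opp, W_d; auto.
    - intros c [Hc1 Hc2]. assert (Ic : I c) by (apply (inI_between a b x c y); auto; lra).
      pose proof (Hc c Ic ltac:(lra)). pose proof (md_pos c Ic). nra. }
  destruct (classic (exists x3, I x3 /\ z2 < x3 /\ Wf x3 < 0)) as [[x3 [Hx3 [Hx32 HW]]]|Hn].
  - destruct (lim_b_decr a b x0 Hx0 G0f x3 Hx3) as [l [Hl _]]; [|exists l; auto].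
    intros x y Hx Hy Hxy Hyx3. apply G0_decr; auto. intros c Hc'.
    assert (Ic : I c) by (apply (inI_between a b x c y); auto; lra).
    apply (sd_W_sign c Ic). assert (Wf c <= Wf x3) by (apply Wdec; auto; lra). lra.
  - destruct (lim_b_incr a b G0f z2 Hz2) as [l [Hl _]]; [|exists l; auto].
    intros x y Hx Hy Hxy Hyx3. apply G0_incr; auto. intros c Hc'.
    assert (Ic : I c) by (apply (inI_between a b x c y); auto; lra).
    apply (sd_W_sign c Ic). destruct (Rle_dec 0 (Wf c)) as [|HH]; auto.
    exfalso; apply Hn; exists c; split; auto; split; lra.
Qed.

Lemma ev_gt_a l : lim_a a b c0 l -> (l = PInf \/ exists c, l = Fin c /\ Fs < c) ->
  exists y2, I y2 /\ forall x, I x -> x < y2 -> Fs < c0 x.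
Proof.
  intros Hl [->|[c [-> Hc]]].
  - destruct (Hl Fs) as [y [Hy H]]. exists y; auto.
  - assert (He : 0 < c - Fs) by lra. destruct (Hl _ He) as [y [Hy H]]. exists y; split; auto.
    intros x Hx Hxy. specialize (H x Hx Hxy). apply Rabs_def2 in H. lra.
Qed.
Lemma ev_gt_b l : lim_b a b c0 l -> (l = PInf \/ exists c, l = Fin c /\ Fs < c) ->
  exists z2, I z2 /\ forall x, I x -> z2 < x -> Fs < c0 x.
Proof.
  intros Hl [->|[c [-> Hc]]].
  - destruct (Hl Fs) as [y [Hy H]]. exists y; auto.
  - assert (He : 0 < c - Fs) by lra. destruct (Hl _ He) as [y [Hy H]]. exists y; split; auto.
    intros x Hx Hxy. specialize (H x Hx Hxy). apply Rabs_def2 in H. lra.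
Qed.

Lemma incr_bdd_a F y2 B : I y2 -> (forall x y, I x -> I y -> x <= y -> y < y2 -> F x <= F y) ->
  (forall x, I x -> x < y2 -> B <= F x) -> exists v, lim_a a b F (Fin v).
Proof.
  intros Hy2 Hm Hb. destruct (lim_a_incr a b F y2 Hy2 Hm) as [l [Hl Hn]].
  destruct l as [v| |]; eauto; [congruence|].
  exfalso. refine (lim_a_notNInf a b x0 Hx0 F NInf B Hl _ eq_refl). exists y2; split; auto.
Qed.
Lemma incr_bdd_b F z2 B : I z2 -> (forall x y, I x -> I y -> x <= y -> z2 < x -> F x <= F y) ->
  (forall x, I x -> z2 < x -> F x <= B) -> exists v, lim_b a b F (Fin v).
Proof.
  intros Hz2 Hm Hb. destruct (lim_b_incr a b F z2 Hz2 Hm) as [l [Hl Hn]].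
  destruct l as [v| |]; eauto; [|congruence].
  exfalso. refine (lim_b_notPInf a b x0 Hx0 F PInf B Hl _ eq_refl). exists z2; split; auto.
Qed.

Local Notation g0f := (g0 a b mu sigma x0 c0).
Local Notation zf := (zeta a b mu sigma x0).

Lemma g0_d x : I x -> derivable_pt_lim g0f x (Tf f2 x * sd x).
Proof. intros Hx. unfold g0. apply (FTC a b (fun u => Tf f2 u * sd u)); auto.
  apply contI_mult; [apply Tf2_cont|apply sd_cont]. Qed.
Lemma zeta_d x : I x -> derivable_pt_lim zf x (2 * Tm x * sd x).
Proof. intros Hx. unfold zeta. apply (FTC a b (fun u => 2 * Tm u * sd u)); auto.
  apply contI_mult; [apply contI_mult; [apply contI_const|apply Tm_cont]|apply sd_cont]. Qed.

Lemma Tc_nn x : I x -> 0 <= Tf fc x.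
Proof. intros; apply T_nonneg; auto. apply fc_cont. apply fc_pos. apply fc_fin. Qed.
Lemma Tm_nn x : I x -> 0 <= Tm x.
Proof. intros; apply T_nonneg; auto. apply md_cont. apply md_nn. apply md_fin. Qed.

Lemma g0_incr x y : I x -> I y -> x <= y -> g0f x <= g0f y.
Proof.
  intros. apply (incr_I a b g0f (fun t => Tf f2 t * sd t)); auto. apply g0_d.
  intros c Hc. assert (Ic : I c) by (apply (inI_between a b x c y); auto; lra).
  rewrite Tf2 by auto. pose proof (Tc_nn c Ic). pose proof (sd_pos c). nra.
Qed.
Lemma zeta_incr x y : I x -> I y -> x <= y -> zf x <= zf y.
Proof.
  intros. apply (incr_I a b zf (fun t => 2 * Tm t * sd t)); auto. apply zeta_d.
  intros c Hc. assert (Ic : I c) by (apply (inI_between a b x c y); auto; lra).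
  pose proof (Tm_nn c Ic). pose proof (sd_pos c). nra.
Qed.

Lemma zeta_x0 : zf x0 = 0.
Proof. unfold zeta. apply RI_zero; auto.
  apply contI_mult; [apply contI_mult; [apply contI_const|apply Tm_cont]|apply sd_cont]. Qed.

Lemma IntA_bound f : contI a b f -> (forall u, I u -> u < x0 -> 0 <= f u) -> isfin (IntA a b f x0) ->
  exists B, forall y, I y -> y < x0 -> RI f y x0 <= B.
Proof.
  intros Hf Hp [r Hr].
  assert (Hm : forall x y, I x -> I y -> x <= y -> y < x0 -> RI f y x0 <= RI f x x0).
  { intros x y Hx Hy Hxy Hyx. assert (- RI f x x0 <= - RI f y x0); [|lra].
    apply (incr_I a b (fun t => - RI f t x0) f); auto.
    - intros z Hz. apply (dext _ _ (- - f z)); [ring|]. apply derivable_pt_lim_opp. apply (FTC' a b f); auto.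
    - intros c Hc; apply Hp; [apply (inI_between a b x c y)|]; auto; lra. }
  destruct (lim_a_decr a b x0 Hx0 (fun y => RI f y x0) x0 Hx0 Hm) as [l [Hl _]].
  assert (l = Fin r) by (rewrite <- Hr; symmetry; unfold IntA; apply (limval_a_eq a b x0 Hx0); exact Hl).
  subst l. exists r. apply (decr_lim_a_le (fun y => RI f y x0) x0 r Hx0 Hm Hl).
Qed.

Local Notation Sg := (fun u => RI md u x0 * sd u).

Lemma Sg_cont : contI a b Sg.
Proof.
  apply contI_mult; [|apply sd_cont]. apply (contI_deriv a b _ (fun t => - md t)).
  intros; apply (FTC' a b md); auto; apply md_cont.
Qed.

Lemma G0_lim_attain : attainable_a a b mu sigma x0 -> exists v, lim_a a b G0f (Fin v).
Proof.
  intros Hat.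
  destruct HA as [HA1 _].
  destruct (IntA_bound sd sd_cont (fun u _ _ => Rlt_le _ _ (sd_pos u)) (HA1 x0 Hx0)) as [IA HIA].
  assert (HSf : isfin (Sigma_a a b mu sigma x0)).
  { unfold attainable_a, cls_a, btype_of in Hat.
    destruct (Sigma_a a b mu sigma x0); destruct (N_a a b mu sigma x0); destruct Hat as [H|H]; try discriminate; eexists; eauto. }
  destruct (IntA_bound Sg Sg_cont) as [SA HSA].
  { intros u Hu Hux. pose proof (sd_pos u). assert (0 <= RI md u x0) by (apply RI_pos; auto; try apply md_cont; try apply md_nn; lra). nra. }
  { exact HSf. }
  set (Zlow := - (2 * Tm x0 * IA + 2 * SA)).
  assert (Hz : forall x, I x -> x < x0 -> Zlow <= zf x).
  { intros x Hx Hxx.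
    assert (HH2 : zf x0 - zf x <= (- (2 * Tm x0 * RI sd x0 x0 + 2 * RI Sg x0 x0)) - (- (2 * Tm x0 * RI sd x x0 + 2 * RI Sg x x0))).
    { apply (cmp_I zf (fun t => 2 * Tm t * sd t)
       (fun t => - (2 * Tm x0 * RI sd t x0 + 2 * RI Sg t x0)) (fun t => 2 * Tm x0 * sd t + 2 * Sg t) x x0); auto; try lra.
      - apply zeta_d.
      - intros t Ht. apply (dext _ _ (- (2 * Tm x0 * (- sd t) + 2 * (- Sg t)))); [ring|].
        apply derivable_pt_lim_opp. apply (dplus (fun t => 2 * Tm x0 * RI sd t x0) (fun t => 2 * RI Sg t x0)).
        + apply (dscal (2 * Tm x0) (fun t => RI sd t x0)). apply (FTC' a b sd); auto. apply sd_cont.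
        + apply (dscal 2 (fun t => RI Sg t x0)). apply (FTC' a b Sg); auto. apply Sg_cont.
      - intros c Hc. assert (Ic : I c) by (apply (inI_between a b x c x0); auto; lra).
        rewrite (proj2 (T_prop md md_cont md_nn md_fin c Ic)). lra. }
    rewrite (RI_zero sd), (RI_zero Sg), zeta_x0 in HH2 by (auto; try apply sd_cont; apply Sg_cont).
    assert (RI sd x x0 <= IA) by auto. assert (RI Sg x x0 <= SA) by auto. pose proof (Tm_nn x0 Hx0).
    unfold Zlow. nra. }
  destruct (incr_bdd_a zf x0 Zlow Hx0) as [vz Hvz]; auto.
  { intros; apply zeta_incr; auto. }
  destruct c0a_info as [[Hp _]|[c [Hc [Hlc _]]]].
  { exfalso. unfold c0A in Hp. destruct Hat as [H|H]; rewrite H in Hp; discriminate. }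
  set (C := Rabs c + 1).
  assert (HC1 : near_a a b (fun x => c0 x <= C)).
  { generalize (Hlc 1 Rlt_0_1). apply (near_a_imp a b x0 Hx0). intros x _ H.
    apply Rabs_def2 in H. pose proof (Rle_abs c). unfold C; lra. }
  destruct (near_a_and a b x0 Hx0 _ _ HC1 (near_a_below a b x0 Hx0)) as [y3 [Hy3 HC3]].
  destruct (exists_below a b y3 Hy3) as [y4 [Hy4 Hy43]].
  assert (Hy40 : y4 < x0) by (destruct (HC3 y4 Hy4 Hy43); lra).
  set (ps := Tf fc y4 - C * Tm y4).
  assert (Hps : forall x, I x -> x <= y4 -> Tf fc x <= C * Tm x + ps).
  { intros x Hx Hxy.
    assert (HH := incr_I a b (fun t => Tf fc t - C * Tm t) (fun t => (C - c0 t) * md t) x y4).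
    simpl in HH. unfold ps. enough (Tf fc x - C * Tm x <= Tf fc y4 - C * Tm y4) by lra.
    apply HH; auto.
    - intros t Ht. apply (dext _ _ (- fc t - C * - md t)); [ring|].
      apply (dminus (Tf fc) (fun t => C * Tm t)). apply (T_d fc); auto. apply fc_cont. apply fc_pos. apply fc_fin.
      apply (dscal C Tm). apply (T_d md); auto. apply md_cont. apply md_nn. apply md_fin.
    - intros t Ht. assert (It : I t) by (apply (inI_between a b x t y4); auto; lra).
      destruct (HC3 t It ltac:(lra)). pose proof (md_pos t It). nra. }
  assert (HCp : 0 <= C) by (unfold C; pose proof (Rabs_pos c); lra).
  set (Gl := g0f y4 - (C * (zf y4 - Zlow) + 2 * Rabs ps * IA)).
  assert (Hg : forall x, I x -> x < y4 -> Gl <= g0f x).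
  { intros x Hx Hxy.
    assert (HH := cmp_I g0f (fun t => Tf f2 t * sd t)
       (fun t => C * zf t - 2 * Rabs ps * RI sd t x0) (fun t => C * (2 * Tm t * sd t) + 2 * Rabs ps * sd t) x y4).
    assert (g0f y4 - g0f x <= (C * zf y4 - 2 * Rabs ps * RI sd y4 x0) - (C * zf x - 2 * Rabs ps * RI sd x x0)).
    { apply HH; auto; try lra.
      - apply g0_d.
      - intros t Ht. apply (dext _ _ (C * (2 * Tm t * sd t) - 2 * Rabs ps * (- sd t))); [ring|].
        apply (dminus (fun t => C * zf t) (fun t => 2 * Rabs ps * RI sd t x0)).
        apply (dscal C zf). apply zeta_d; auto.
        apply (dscal (2 * Rabs ps) (fun t => RI sd t x0)). apply (FTC' a b sd); auto. apply sd_cont.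
      - intros t Ht. assert (It : I t) by (apply (inI_between a b x t y4); auto; lra).
        rewrite Tf2 by auto. pose proof (Hps t It ltac:(lra)). pose proof (sd_pos t).
        pose proof (Rle_abs ps). nra. }
    assert (RI sd x x0 <= IA) by (apply HIA; auto; lra).
    assert (0 <= RI sd y4 x0) by (apply RI_pos; auto; try apply sd_cont; try (intros; apply Rlt_le, sd_pos); lra).
    assert (Zlow <= zf x) by (apply Hz; auto; lra).
    pose proof (Rabs_pos ps). unfold Gl. nra. }
  destruct (incr_bdd_a g0f y4 Gl Hy4) as [vg Hvg]; auto.
  { intros; apply g0_incr; auto. }
  exists (vg + - Fs * vz). unfold G0.
  apply (lim_a_ext a b x0 Hx0) with (fun x => g0f x + (- Fs) * zf x); [intros; ring|].
  apply (lim_a_plus a b x0 Hx0); auto. apply (lim_a_mult a b x0 Hx0); auto. apply (lim_a_const a b x0 Hx0).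
Qed.

Local Notation Nf := (fun u => RI sd x0 u * md u).
Local Notation Sf := (fun t => RI sd x0 t).

Lemma Sf_d t : I t -> derivable_pt_lim Sf t (sd t).
Proof. intros; apply (FTC a b sd); auto; apply sd_cont. Qed.
Lemma Nf_cont : contI a b Nf.
Proof. apply contI_mult; [|apply md_cont]. apply (contI_deriv a b _ sd). apply Sf_d. Qed.
Lemma Nf_pos u : I u -> x0 <= u -> 0 <= Nf u.
Proof.
  intros Hu Hxu. pose proof (md_pos u Hu).
  pose proof (RI_pos sd x0 u sd_cont (fun x _ => Rlt_le _ _ (sd_pos x)) Hx0 Hu Hxu). nra.
Qed.

Lemma entr_N : cls_b a b mu sigma x0 = Entrance -> exists rN, forall z, I z -> x0 < z -> RI Nf x0 z <= rN.
Proof.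
  intros He.
  assert (HN : exists rN, N_b a b mu sigma x0 = Fin rN).
  { unfold cls_b, btype_of in He. destruct (Sigma_b a b mu sigma x0); destruct (N_b a b mu sigma x0); try discriminate; eauto. }
  destruct HN as [rN HN].
  assert (Hm : forall x y, I x -> I y -> x <= y -> x0 < x -> RI Nf x0 x <= RI Nf x0 y).
  { intros x y Hx Hy Hxy Hx0x. apply (incr_I a b (fun t => RI Nf x0 t) Nf); auto.
    intros; apply (FTC a b Nf); auto; apply Nf_cont. intros c Hc; apply Nf_pos; [apply (inI_between a b x c y)|]; auto; lra. }
  destruct (lim_b_incr a b (RI Nf x0) x0 Hx0 Hm) as [l [Hl _]].
  assert (l = Fin rN). { rewrite <- HN. symmetry. apply (limval_b_eq a b x0 Hx0). exact Hl. }
  subst l. exists rN. apply (incr_lim_b_le (RI Nf x0) x0); auto.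
Qed.

Lemma G0_lim_entr : cls_b a b mu sigma x0 = Entrance -> exists v, lim_b a b G0f (Fin v).
Proof.
  intros He. destruct (entr_N He) as [rN HrN].
  assert (Hz : forall z, I z -> x0 < z -> zf z <= 2 * rN).
  { intros z Hz Hxz.
    assert (Eid : zf z = 2 * (Sf z * Tm z + RI Nf x0 z)).
    { assert (E := const_I a b (fun t => zf t - 2 * (Sf t * Tm t + RI Nf x0 t)) (fun _ => 0) x0 z).
      simpl in E. rewrite zeta_x0, (RI_zero sd), (RI_zero Nf) in E by (auto; try apply sd_cont; apply Nf_cont).
      enough (0 - 2 * (0 * Tm x0 + 0) = zf z - 2 * (Sf z * Tm z + RI Nf x0 z)) by lra.
      apply E; auto. intros t Ht.
      apply (dext _ _ (2 * Tm t * sd t - 2 * ((sd t * Tm t + Sf t * (- md t)) + Nf t))); [ring|].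
      apply (dminus zf (fun t => 2 * (Sf t * Tm t + RI Nf x0 t))). apply zeta_d; auto.
      apply (dscal 2 (fun t => Sf t * Tm t + RI Nf x0 t)).
      apply (dplus (fun t => Sf t * Tm t) (fun t => RI Nf x0 t)).
      apply (dmult Sf Tm). apply Sf_d; auto. apply (T_d md); auto. apply md_cont. apply md_nn. apply md_fin.
      apply (FTC a b Nf); auto. apply Nf_cont. }
    assert (Hw : forall w, I w -> z < w -> Sf z * RI md z w + RI Nf x0 z <= rN).
    { intros w Hw Hzw.
      assert (C1 : Sf z * RI md z w <= RI Nf z w).
      { assert (HH : (fun t => Sf z * RI md z t) w - (fun t => Sf z * RI md z t) z <= (fun t => RI Nf z t) w - (fun t => RI Nf z t) z).
        { apply (cmp_I (fun t => Sf z * RI md z t) (fun t => Sf z * md t) (fun t => RI Nf z t) Nf z w); auto; try lra.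
          - intros x Hx. apply (dscal (Sf z) (fun t => RI md z t)). apply (FTC a b md); auto. apply md_cont.
          - intros x Hx. apply (FTC a b Nf); auto. apply Nf_cont.
          - intros c Hc. assert (Ic : I c) by (apply (inI_between a b z c w); auto; lra).
            pose proof (md_pos c Ic). assert (Sf z <= Sf c).
            { apply RI_incr; auto. apply sd_cont. intros; apply Rlt_le, sd_pos. lra. }
            nra. }
        simpl in HH. rewrite (RI_zero md), (RI_zero Nf) in HH by (auto; try apply md_cont; apply Nf_cont). lra. }
      assert (C2 : RI Nf x0 z + RI Nf z w = RI Nf x0 w) by (apply (RI_chasles a b); auto; apply Nf_cont).
      specialize (HrN w Hw ltac:(lra)). lra. }
    assert (Hlim : lim_b a b (fun w => Sf z * RI md z w + RI Nf x0 z) (Fin (Sf z * Tm z + RI Nf x0 z))).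
    { apply (lim_b_plus a b x0 Hx0); [|apply (lim_b_const a b x0 Hx0)].
      apply (lim_b_mult a b x0 Hx0); [apply (lim_b_const a b x0 Hx0)|].
      apply (T_prop md md_cont md_nn md_fin z Hz). }
    assert (Sf z * Tm z + RI Nf x0 z <= rN).
    { apply (lim_b_le a b x0 Hx0 (fun w => Sf z * RI md z w + RI Nf x0 z) rN _); [|exact Hlim]. exists z; split; auto. }
    lra. }
  destruct (incr_bdd_b zf x0 (2 * rN) Hx0) as [vz Hvz]; auto.
  { intros; apply zeta_incr; auto. }
  destruct c0b_info as [[Hp _]|[c [Hc [Hlc _]]]].
  { exfalso. unfold c0B in Hp. rewrite He in Hp; discriminate. }
  set (C := Rabs c + 1).
  assert (HC1 : near_b a b (fun x => c0 x <= C)).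
  { generalize (Hlc 1 Rlt_0_1). apply (near_b_imp a b x0 Hx0). intros x _ H.
    apply Rabs_def2 in H. pose proof (Rle_abs c). unfold C; lra. }
  destruct (near_b_and a b x0 Hx0 _ _ HC1 (near_b_above a b x0 Hx0)) as [z3 [Hz3 HC3]].
  destruct (exists_above a b z3 Hz3) as [z4 [Hz4 Hz34]].
  assert (Hz40 : x0 < z4) by (destruct (HC3 z4 Hz4 Hz34); lra).
  assert (HCp : 0 <= C) by (unfold C; pose proof (Rabs_pos c); lra).
  assert (Hps : forall x, I x -> z4 <= x -> Tf fc x <= C * Tm x).
  { set (ps := fun t => Tf fc t - C * Tm t).
    assert (Hpd : forall t, I t -> derivable_pt_lim ps t ((C - c0 t) * md t)).
    { intros t Ht. apply (dext _ _ (- fc t - C * - md t)); [ring|].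
      apply (dminus (Tf fc) (fun t => C * Tm t)). apply (T_d fc); auto. apply fc_cont. apply fc_pos. apply fc_fin.
      apply (dscal C Tm). apply (T_d md); auto. apply md_cont. apply md_nn. apply md_fin. }
    assert (Hpm : forall x y, I x -> I y -> x <= y -> z3 < x -> ps x <= ps y).
    { intros x y Hx Hy Hxy Hzx. apply (incr_I a b ps _ x y Hpd); auto.
      intros t Ht. assert (It : I t) by (apply (inI_between a b x t y); auto; lra).
      destruct (HC3 t It ltac:(lra)). pose proof (md_pos t It). nra. }
    assert (Hpl : lim_b a b ps (Fin 0)).
    { unfold ps. replace 0 with (0 - C * 0) by ring.
      apply (lim_b_ext a b x0 Hx0) with (fun t => Tf fc t + (- C) * Tm t); [intros; ring|].
      replace (0 - C * 0) with (0 + (- C) * 0) by ring.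
      apply (lim_b_plus a b x0 Hx0). apply T_lim0; [apply fc_cont|apply fc_pos|apply fc_fin].
      apply (lim_b_mult a b x0 Hx0). apply (lim_b_const a b x0 Hx0). apply T_lim0; [apply md_cont|apply md_nn|apply md_fin]. }
    intros x Hx Hzx. pose proof (incr_lim_b_le ps z3 0 Hz3 Hpm Hpl x Hx ltac:(lra)). unfold ps in H; lra. }
  assert (Hg : forall z, I z -> z4 < z -> g0f z <= g0f z4 + C * (2 * rN - zf z4)).
  { intros z Hzi Hzz.
    assert (g0f z - g0f z4 <= C * zf z - C * zf z4).
    { apply (cmp_I g0f (fun t => Tf f2 t * sd t) (fun t => C * zf t) (fun t => C * (2 * Tm t * sd t)) z4 z); auto; try lra.
      - apply g0_d.
      - intros t Ht. apply (dscal C zf). apply zeta_d; auto.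
      - intros t Ht. assert (It : I t) by (apply (inI_between a b z4 t z); auto; lra).
        rewrite Tf2 by auto. pose proof (Hps t It ltac:(lra)). pose proof (sd_pos t). nra. }
    assert (zf z <= 2 * rN) by (apply Hz; auto; lra).
    assert (zf z4 <= zf z) by (apply zeta_incr; auto; lra). nra. }
  destruct (incr_bdd_b g0f z4 (g0f z4 + C * (2 * rN - zf z4)) Hz4) as [vg Hvg]; auto.
  { intros; apply g0_incr; auto. }
  exists (vg + - Fs * vz). unfold G0.
  apply (lim_b_ext a b x0 Hx0) with (fun x => g0f x + (- Fs) * zf x); [intros; ring|].
  apply (lim_b_plus a b x0 Hx0); auto. apply (lim_b_mult a b x0 Hx0); auto. apply (lim_b_const a b x0 Hx0).
Qed.

Lemma G0_lim_a : exists l, lim_a a b G0f l /\ (attainable_a a b mu sigma x0 -> exists v, l = Fin v).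
Proof.
  destruct cls_a_cases as [Hat|Hnat].
  - destruct (G0_lim_attain Hat) as [v Hv]. exists (Fin v); split; eauto.
  - assert (Hna : ~ attainable_a a b mu sigma x0) by (intros [H|H]; rewrite Hnat in H; discriminate).
    destruct c0a_info as [[_ Hl]|[c [_ [Hl Hfs]]]].
    + destruct (ev_gt_a PInf Hl (or_introl eq_refl)) as [y2 [Hy2 H]].
      destruct (G0_lim_a_nat y2 Hy2 H) as [l Hl2]. exists l; split; auto. intros; contradiction.
    + destruct (ev_gt_a (Fin c) Hl (or_intror (ex_intro _ c (conj eq_refl (Hfs Hnat))))) as [y2 [Hy2 H]].
      destruct (G0_lim_a_nat y2 Hy2 H) as [l Hl2]. exists l; split; auto. intros; contradiction.
Qed.

Lemma G0_lim_b : exists l, lim_b a b G0f l.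
Proof.
  destruct cls_b_cases as [Hen|Hnat].
  - destruct (G0_lim_entr Hen) as [v Hv]. exists (Fin v); auto.
  - destruct c0b_info as [[_ Hl]|[c [_ [Hl Hfs]]]].
    + destruct (ev_gt_b PInf Hl (or_introl eq_refl)) as [y2 [Hy2 H]].
      apply (G0_lim_b_nat y2 Hy2 H).
    + destruct (ev_gt_b (Fin c) Hl (or_intror (ex_intro _ c (conj eq_refl (Hfs Hnat))))) as [y2 [Hy2 H]].
      apply (G0_lim_b_nat y2 Hy2 H).
Qed.

Variable k : R.
Hypothesis Hk : 0 < k <= 1.

Definition Gk x := Phi k (G0f x).
Definition E1 x := Phi1 k (G0f x) * D1 x.
Definition E2 x := Phi2 k (G0f x) * D1 x * D1 x + Phi1 k (G0f x) * D2 x.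
Definition AGk x := Phi1 k (G0f x) * (Fs - c0 x) + / 2 * Phi2 k (G0f x) * (sigma x * D1 x) ^ 2.

Lemma Gk_d x : I x -> derivable_pt_lim Gk x (E1 x).
Proof.
  intros Hx. unfold Gk, E1.
  apply (derivable_pt_lim_comp G0f (Phi k) x). apply G0_d; auto. apply Phi_d; auto.
Qed.

Lemma E1_d x : I x -> derivable_pt_lim E1 x (E2 x).
Proof.
  intros Hx. unfold E1, E2.
  apply (dext _ _ ((Phi2 k (G0f x) * D1 x) * D1 x + Phi1 k (G0f x) * D2 x)); [ring|].
  apply (dmult (fun t => Phi1 k (G0f t)) D1).
  - apply (derivable_pt_lim_comp G0f (Phi1 k) x). apply G0_d; auto. apply Phi1_d; auto.
  - apply D1_d; auto.
Qed.

Lemma Dv_Gk x : I x -> Dv Gk x = E1 x.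
Proof. intros; apply Dv_eq, Gk_d; auto. Qed.

Lemma near_I x : I x -> exists d, 0 < d /\ forall z, Rabs (z - x) < d -> I z.
Proof. apply inI_open. Qed.

Lemma DvDv_Gk_d x : I x -> derivable_pt_lim (Dv Gk) x (E2 x).
Proof.
  intros Hx. apply deriv_loc with E1; [|apply E1_d; auto].
  destruct (near_I x Hx) as [d [Hd H]]. exists d; split; auto. intros z Hz. apply Dv_Gk, H, Hz.
Qed.

Lemma DvDv_Gk x : I x -> Dv (Dv Gk) x = E2 x.
Proof. intros; apply Dv_eq, DvDv_Gk_d; auto. Qed.

Lemma G0_cont : contI a b G0f.
Proof. apply (contI_deriv a b G0f D1). apply G0_d. Qed.

Lemma comp_cont (phi : R -> R) : (forall t, continuity_pt phi t) -> contI a b (fun x => phi (G0f x)).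
Proof. intros Hp x Hx. apply (continuity_pt_comp G0f phi). apply G0_cont; auto. apply Hp. Qed.

Lemma E2_cont : contI a b E2.
Proof.
  unfold E2. apply contI_plus.
  - apply contI_mult; [apply contI_mult|]; [apply comp_cont; intros; apply Phi2_cont; auto|apply D1_cont|apply D1_cont].
  - apply contI_mult; [apply comp_cont; intros; apply Phi1_cont; auto|apply D2_cont].
Qed.

Lemma DvDv_cont x : I x -> continuity_pt (Dv (Dv Gk)) x.
Proof.
  intros Hx. apply cont_loc with E2; [|apply E2_cont; auto].
  destruct (near_I x Hx) as [d [Hd H]]. exists d; split; auto. intros z Hz. apply DvDv_Gk, H, Hz.
Qed.

Lemma Agen_Gk x : I x -> Agen mu sigma Gk x = AGk x.
Proof.
  intros Hx. unfold Agen, AGk. rewrite DvDv_Gk, Dv_Gk by auto. unfold E1, E2.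
  rewrite <- (AG0 x Hx). field.
Qed.

Lemma sigE1_cont : contI a b (fun x => (sigma x * E1 x) ^ 2).
Proof.
  intros x Hx. apply cont_pow. apply (continuity_pt_mult sigma E1). apply Hsig; auto.
  apply (contI_deriv a b E1 E2 E1_d); auto.
Qed.

Lemma AGk_cont : contI a b AGk.
Proof.
  unfold AGk. apply contI_plus.
  - apply contI_mult; [apply comp_cont; intros; apply Phi1_cont; auto|apply contI_minus; [apply contI_const|apply c0_cont]].
  - apply contI_mult; [apply contI_mult; [apply contI_const|apply comp_cont; intros; apply Phi2_cont; auto]|].
    intros x Hx. apply cont_pow. apply (continuity_pt_mult sigma D1). apply Hsig; auto. apply D1_cont; auto.
Qed.

Lemma bound_I F B1 B2 : contI a b F -> near_a a b (fun x => Rabs (F x) <= B1) ->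
  near_b a b (fun x => Rabs (F x) <= B2) -> exists B, forall x, I x -> Rabs (F x) <= B.
Proof.
  intros Hc [y1 [Hy1 H1]] [z1 [Hz1 H2]].
  set (hi := Rmax y1 z1).
  assert (Hhi : I hi) by (unfold hi, Rmax; destruct Rle_dec; auto).
  destruct (continuity_ab_maj (fun x => Rabs (F x)) y1 hi) as [Mx [HM HMx]].
  - unfold hi; apply Rmax_l.
  - intros c Hc'. apply (continuity_pt_comp F Rabs). apply Hc. apply (inI_between a b y1 c hi); auto.
    apply Rcontinuity_abs.
  - exists (Rmax (Rmax B1 B2) (Rabs (F Mx))). intros x Hx.
    pose proof (Rmax_l (Rmax B1 B2) (Rabs (F Mx))). pose proof (Rmax_r (Rmax B1 B2) (Rabs (F Mx))).
    pose proof (Rmax_l B1 B2). pose proof (Rmax_r B1 B2).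
    destruct (Rlt_le_dec x y1) as [Hl|Hl]; [specialize (H1 x Hx Hl); lra|].
    destruct (Rlt_le_dec z1 x) as [Hr|Hr]; [specialize (H2 x Hx Hr); lra|].
    assert (Hxh : x <= hi) by (unfold hi; pose proof (Rmax_r y1 z1); lra).
    specialize (HM x (conj Hl Hxh)). simpl in HM. lra.
Qed.

Definition XX x := 1 + Rabs (G0f x).
Lemma XX_ge1 x : 1 <= XX x.
Proof. unfold XX; pose proof (Rabs_pos (G0f x)); lra. Qed.

Lemma Rp_pos X p : 0 < X -> 0 < Rpower X p.
Proof. intros; unfold Rpower; apply exp_pos. Qed.
Lemma Rp_le3 X e : 1 <= X -> 0 < e < 1 -> Rpower X (2 + e) <= X ^ 3.
Proof.
  intros HX He. rewrite <- (Rpower_pow 3 X) by lra.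
  apply Rle_Rpower; auto. simpl; lra.
Qed.

Lemma div_le_inv u v L : 0 < v -> u / v <= L -> u <= Rabs L * v.
Proof.
  intros Hv H. apply Rmult_le_compat_r with (r := v) in H; [|lra].
  unfold Rdiv in H. rewrite Rmult_assoc, Rinv_l in H by lra. pose proof (Rle_abs L). nra.
Qed.

Lemma ends_a : exists L, 0 <= L /\ near_a a b (fun x => (sigma x * D1 x) ^ 2 <= L * XX x ^ 3 /\ c0 x <= L * XX x ^ 2).
Proof.
  destruct HD as [[L [y1 [Hy1 [HP HF]]]] _].
  destruct c0a_info as [[Hp _]|[c [Hc [Hlc _]]]].
  - exists (Rabs L). split; [apply Rabs_pos|]. exists y1; split; auto. intros x Hx Hxy.
    specialize (HP Hp x Hx Hxy). rewrite Dv_G0 in HP by auto. fold (XX x) in HP.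
    pose proof (XX_ge1 x). pose proof (c0_pos x Hx).
    assert (0 <= (sigma x * D1 x) ^ 2 / XX x ^ 3) by (apply Rdiv_le_0_compat; [apply pow2_ge_0|apply pow_lt; lra]).
    assert (0 <= c0 x / XX x ^ 2) by (apply Rdiv_le_0_compat; [lra|apply pow_lt; lra]).
    split; apply div_le_inv; try (apply pow_lt; lra); lra.
  - destruct (HF (ex_intro _ c Hc)) as [e [He HF2]].
    set (C := Rabs c + 1).
    assert (HC1 : near_a a b (fun x => c0 x <= C)).
    { generalize (Hlc 1 Rlt_0_1). apply (near_a_imp a b x0 Hx0). intros x _ H.
      apply Rabs_def2 in H. pose proof (Rle_abs c). unfold C; lra. }
    exists (Rabs L + C). split. unfold C; pose proof (Rabs_pos L); pose proof (Rabs_pos c); lra.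
    generalize (near_a_and a b x0 Hx0 _ _ HC1 (near_a_below a b y1 Hy1)).
    apply (near_a_imp a b x0 Hx0). intros x Hx [H1 H2].
    specialize (HF2 x Hx H2). rewrite Dv_G0 in HF2 by auto. fold (XX x) in HF2.
    pose proof (XX_ge1 x). pose proof (Rp_le3 (XX x) e (XX_ge1 x) He).
    pose proof (Rp_pos (XX x) (2 + e) ltac:(lra)).
    apply div_le_inv in HF2; auto. pose proof (Rabs_pos L).
    assert (1 <= XX x ^ 2) by (rewrite <- (pow1 2); apply pow_incr; lra).
    assert (0 <= C) by (unfold C; pose proof (Rabs_pos c); lra).
    split; nra.
Qed.

Lemma ends_b : exists L, 0 <= L /\ near_b a b (fun x => (sigma x * D1 x) ^ 2 <= L * XX x ^ 3 /\ c0 x <= L * XX x ^ 2).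
Proof.
  destruct HD as [_ [[L [z1 [Hz1 [HP HF]]]] _]].
  destruct c0b_info as [[Hp _]|[c [Hc [Hlc _]]]].
  - exists (Rabs L + L * L). split; [pose proof (Rabs_pos L); nra|]. exists z1; split; auto. intros x Hx Hxy.
    specialize (HP Hp x Hx Hxy). rewrite Dv_G0 in HP by auto. fold (XX x) in HP.
    pose proof (XX_ge1 x). pose proof (c0_pos x Hx).
    assert (H1 : 0 <= (sigma x * D1 x) ^ 2 / (XX x * (1 + c0 x))) by (apply Rdiv_le_0_compat; [apply pow2_ge_0|nra]).
    assert (H2 : 0 <= c0 x / XX x ^ 2) by (apply Rdiv_le_0_compat; [lra|apply pow_lt; lra]).
    assert (Hc0 : c0 x <= Rabs L * XX x ^ 2) by (apply div_le_inv; [apply pow_lt; lra|lra]).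
    assert (Hs : (sigma x * D1 x) ^ 2 <= Rabs L * (XX x * (1 + c0 x))) by (apply div_le_inv; [nra|lra]).
    pose proof (Rabs_pos L). assert (1 <= XX x ^ 2) by (rewrite <- (pow1 2); apply pow_incr; lra).
    assert (Rabs L * Rabs L = L * L) by (rewrite <- Rabs_mult; apply Rabs_right; nra).
    split.
    + apply Rle_trans with (Rabs L * (XX x * (1 + Rabs L * XX x ^ 2))).
      * apply Rle_trans with (Rabs L * (XX x * (1 + c0 x))); auto. apply Rmult_le_compat_l; auto. nra.
      * replace (Rabs L * (XX x * (1 + Rabs L * XX x ^ 2))) with (Rabs L * XX x + (Rabs L * Rabs L) * XX x ^ 3) by ring.
        assert (XX x <= XX x ^ 3) by (simpl; nra). nra.
    + nra.
  - destruct (HF (ex_intro _ c Hc)) as [e [He HF2]].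
    set (C := Rabs c + 1).
    assert (HC1 : near_b a b (fun x => c0 x <= C)).
    { generalize (Hlc 1 Rlt_0_1). apply (near_b_imp a b x0 Hx0). intros x _ H.
      apply Rabs_def2 in H. pose proof (Rle_abs c). unfold C; lra. }
    exists (Rabs L + C). split. unfold C; pose proof (Rabs_pos L); pose proof (Rabs_pos c); lra.
    generalize (near_b_and a b x0 Hx0 _ _ HC1 (near_b_above a b z1 Hz1)).
    apply (near_b_imp a b x0 Hx0). intros x Hx [H1 H2].
    specialize (HF2 x Hx H2). rewrite !Dv_G0 in HF2 by auto. fold (XX x) in HF2.
    pose proof (XX_ge1 x). pose proof (Rp_le3 (XX x) e (XX_ge1 x) He). pose proof (c0_pos x Hx).
    pose proof (Rp_pos (XX x) (2 + e) ltac:(lra)).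
    assert (0 <= (sigma x * D1 x) ^ 2 / (XX x * (1 + c0 x))) by (apply Rdiv_le_0_compat; [apply pow2_ge_0|nra]).
    assert (HF3 : (sigma x * D1 x) ^ 2 / Rpower (XX x) (2 + e) <= L) by lra.
    apply div_le_inv in HF3; auto. pose proof (Rabs_pos L).
    assert (1 <= XX x ^ 2) by (rewrite <- (pow1 2); apply pow_incr; lra).
    assert (0 <= C) by (unfold C; pose proof (Rabs_pos c); lra).
    split; nra.
Qed.

Lemma Phi1_le x : Rabs (Phi1 k (G0f x)) <= KK k / XX x ^ 2.
Proof.
  pose proof (Phi1_bound k Hk (G0f x)). fold (XX x) in H. pose proof (XX_ge1 x).
  assert (0 < XX x ^ 2) by (apply pow_lt; lra).
  apply Rmult_le_reg_r with (XX x ^ 2); auto. unfold Rdiv; rewrite Rmult_assoc, Rinv_l; lra.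
Qed.
Lemma Phi2_le x : Rabs (Phi2 k (G0f x)) <= KK k / XX x ^ 3.
Proof.
  pose proof (Phi2_bound k Hk (G0f x)). fold (XX x) in H. pose proof (XX_ge1 x).
  assert (0 < XX x ^ 3) by (apply pow_lt; lra).
  apply Rmult_le_reg_r with (XX x ^ 3); auto. unfold Rdiv; rewrite Rmult_assoc, Rinv_l; lra.
Qed.
Lemma KK_pos : 0 < KK k.
Proof. unfold KK. assert (0 < 2 / (k * k)) by (apply Rdiv_lt_0_compat; nra). lra. Qed.

Lemma est_sig L x : I x -> 0 <= L -> (sigma x * D1 x) ^ 2 <= L * XX x ^ 3 ->
  Rabs ((sigma x * E1 x) ^ 2) <= KK k * KK k * L.
Proof.
  intros Hx HL Hs. pose proof (Phi1_le x). pose proof (XX_ge1 x). pose proof KK_pos.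
  rewrite Rabs_right by (apply Rle_ge, pow2_ge_0).
  unfold E1. replace ((sigma x * (Phi1 k (G0f x) * D1 x)) ^ 2) with ((Phi1 k (G0f x)) ^ 2 * (sigma x * D1 x) ^ 2) by ring.
  set (X := XX x) in *. set (P := Phi1 k (G0f x)) in *. set (S := (sigma x * D1 x) ^ 2) in *.
  assert (HP2 : P ^ 2 <= (KK k / X ^ 2) ^ 2).
  { rewrite <- (pow2_abs P). apply pow_incr; split; auto. apply Rabs_pos. }
  assert (0 <= S) by (unfold S; apply pow2_ge_0).
  apply Rle_trans with ((KK k / X ^ 2) ^ 2 * (L * X ^ 3)).
  - apply Rmult_le_compat; auto; apply pow2_ge_0.
  - replace ((KK k / X ^ 2) ^ 2 * (L * X ^ 3)) with (KK k * KK k * L * / X) by (field; lra).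
    assert (/ X <= 1) by (rewrite <- Rinv_1; apply Rinv_le_contravar; lra).
    assert (0 <= KK k * KK k * L) by (apply Rmult_le_pos; [nra|auto]). nra.
Qed.

Lemma est_A L x : I x -> 0 <= L -> (sigma x * D1 x) ^ 2 <= L * XX x ^ 3 -> c0 x <= L * XX x ^ 2 ->
  Rabs (AGk x) <= KK k * (Rabs Fs + L) + KK k * L.
Proof.
  intros Hx HL Hs Hc. pose proof (Phi1_le x). pose proof (Phi2_le x). pose proof (XX_ge1 x). pose proof KK_pos.
  pose proof (c0_pos x Hx).
  unfold AGk. eapply Rle_trans; [apply Rabs_triang|]. apply Rplus_le_compat.
  - rewrite Rabs_mult. set (X := XX x) in *.
    assert (Rabs (Fs - c0 x) <= Rabs Fs + L * X ^ 2).
    { eapply Rle_trans; [apply Rabs_triang|]. rewrite Rabs_Ropp, (Rabs_right (c0 x)) by lra. lra. }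
    apply Rle_trans with (KK k / X ^ 2 * (Rabs Fs + L * X ^ 2)).
    + apply Rmult_le_compat; auto; apply Rabs_pos.
    + assert (1 <= X ^ 2) by (rewrite <- (pow1 2); apply pow_incr; lra).
      replace (KK k / X ^ 2 * (Rabs Fs + L * X ^ 2)) with (KK k * Rabs Fs / X ^ 2 + KK k * L) by (field; lra).
      assert (KK k * Rabs Fs / X ^ 2 <= KK k * Rabs Fs).
      { unfold Rdiv. rewrite <- (Rmult_1_r (KK k * Rabs Fs)) at 2. apply Rmult_le_compat_l.
        pose proof (Rabs_pos Fs); nra. rewrite <- Rinv_1. apply Rinv_le_contravar; lra. }
      nra.
  - rewrite !Rabs_mult, (Rabs_right (/ 2)) by lra. rewrite (Rabs_right ((sigma x * D1 x) ^ 2)) by (apply Rle_ge, pow2_ge_0).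
    set (X := XX x) in *. assert (0 < X ^ 3) by (apply pow_lt; lra).
    apply Rle_trans with (/ 2 * (KK k / X ^ 3) * (L * X ^ 3)).
    + apply Rmult_le_compat; try apply pow2_ge_0; auto.
      apply Rmult_le_pos; [lra|apply Rabs_pos]. apply Rmult_le_compat_l; lra.
    + replace (/ 2 * (KK k / X ^ 3) * (L * X ^ 3)) with (/ 2 * (KK k * L)) by (field; lra).
      assert (0 <= KK k * L) by nra. lra.
Qed.

Lemma Gk_bound_sig : exists B, forall x, I x -> (sigma x * Dv Gk x) ^ 2 <= B * (1 + c0 x).
Proof.
  destruct ends_a as [La [HLa Ha]]. destruct ends_b as [Lb [HLb Hb]].
  destruct (bound_I (fun x => (sigma x * E1 x) ^ 2) (KK k * KK k * La) (KK k * KK k * Lb) sigE1_cont) as [B HB'].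
  - apply (near_a_imp a b x0 Hx0 _ _ (fun x Hx H => est_sig La x Hx HLa (proj1 H)) Ha).
  - apply (near_b_imp a b x0 Hx0 _ _ (fun x Hx H => est_sig Lb x Hx HLb (proj1 H)) Hb).
  - exists (Rabs B). intros x Hx. rewrite Dv_Gk by auto. specialize (HB' x Hx).
    rewrite Rabs_right in HB' by (apply Rle_ge, pow2_ge_0). pose proof (c0_pos x Hx). pose proof (Rle_abs B).
    pose proof (Rabs_pos B). nra.
Qed.

Lemma Gk_bound_A : exists B, forall x, I x -> Rabs (Agen mu sigma Gk x) <= B.
Proof.
  destruct ends_a as [La [HLa Ha]]. destruct ends_b as [Lb [HLb Hb]].
  destruct (bound_I AGk (KK k * (Rabs Fs + La) + KK k * La) (KK k * (Rabs Fs + Lb) + KK k * Lb) AGk_cont) as [B HB'].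
  - apply (near_a_imp a b x0 Hx0 _ _ (fun x Hx H => est_A La x Hx HLa (proj1 H) (proj2 H)) Ha).
  - apply (near_b_imp a b x0 Hx0 _ _ (fun x Hx H => est_A Lb x Hx HLb (proj1 H) (proj2 H)) Hb).
  - exists B. intros x Hx. rewrite Agen_Gk by auto. auto.
Qed.

Lemma hfun_even t : hfun (- t) = hfun t.
Proof. unfold hfun. rewrite Rabs_Ropp. destruct Rle_dec; [ring|reflexivity]. Qed.

Lemma Phi_odd t : Phi k (- t) = - Phi k t.
Proof. unfold Phi, Dh. rewrite hfun_even. field. pose proof (hfun_pos t). nra. Qed.

Lemma Phi_inf t : 1 < t -> Rabs (Phi k t - / k) <= / (k * k * t).
Proof.
  intros Ht. unfold Phi, Dh. assert (Hn : ~ Rabs t <= 1) by (rewrite Rabs_right by lra; intro; lra).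
  rewrite (hfun_out t Hn). rewrite (Rabs_right t) by lra.
  replace (t / (1 + k * t) - / k) with (- / (k * (1 + k * t))) by (field; split; nra).
  rewrite Rabs_Ropp, Rabs_right by (apply Rle_ge, Rlt_le, Rinv_0_lt_compat; nra).
  apply Rinv_le_contravar; nra.
Qed.

Lemma XX_big_a l : lim_a a b G0f l -> (l = PInf \/ l = NInf) -> forall M, near_a a b (fun x => M < XX x).
Proof.
  intros Hl [->| ->] M; simpl in Hl.
  - apply (near_a_imp a b x0 Hx0 (fun x => M < G0f x)); [|apply Hl]. intros x _ H. unfold XX; pose proof (Rle_abs (G0f x)); lra.
  - apply (near_a_imp a b x0 Hx0 (fun x => G0f x < - M)); [|apply Hl]. intros x _ H. unfold XX; pose proof (Rabs_maj2 (G0f x)); lra.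
Qed.
Lemma XX_big_b l : lim_b a b G0f l -> (l = PInf \/ l = NInf) -> forall M, near_b a b (fun x => M < XX x).
Proof.
  intros Hl [->| ->] M; simpl in Hl.
  - apply (near_b_imp a b x0 Hx0 (fun x => M < G0f x)); [|apply Hl]. intros x _ H. unfold XX; pose proof (Rle_abs (G0f x)); lra.
  - apply (near_b_imp a b x0 Hx0 (fun x => G0f x < - M)); [|apply Hl]. intros x _ H. unfold XX; pose proof (Rabs_maj2 (G0f x)); lra.
Qed.

Lemma small_a F (g : R -> R) : (forall M, near_a a b (fun x => M < g x)) ->
  (forall eps, 0 < eps -> exists M, forall x, I x -> M < g x -> Rabs (F x) < eps) -> lim_a a b F (Fin 0).
Proof.
  intros Hg H eps He. destruct (H eps He) as [M HM].
  apply (near_a_imp a b x0 Hx0 (fun x => M < g x)); [|apply Hg]. intros x Hx Hlt. rewrite Rminus_0_r; apply HM; auto.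
Qed.
Lemma small_b F (g : R -> R) : (forall M, near_b a b (fun x => M < g x)) ->
  (forall eps, 0 < eps -> exists M, forall x, I x -> M < g x -> Rabs (F x) < eps) -> lim_b a b F (Fin 0).
Proof.
  intros Hg H eps He. destruct (H eps He) as [M HM].
  apply (near_b_imp a b x0 Hx0 (fun x => M < g x)); [|apply Hg]. intros x Hx Hlt. rewrite Rminus_0_r; apply HM; auto.
Qed.

Lemma inv_small C : 0 <= C -> forall eps, 0 < eps -> exists M, forall X, M < X -> 1 <= X -> C / X < eps.
Proof.
  intros HC0 eps He. exists (C / eps). intros X HX H1.
  apply Rmult_lt_reg_r with X; [lra|]. unfold Rdiv. rewrite Rmult_assoc, Rinv_l by lra.
  apply Rmult_lt_compat_l with (r := eps) in HX; auto. unfold Rdiv in HX.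
  rewrite <- Rmult_assoc, (Rmult_comm eps C), Rmult_assoc, Rinv_r in HX by lra. lra.
Qed.

Lemma Rp_small p : p < 0 -> forall eps, 0 < eps -> exists M, forall X, M < X -> 1 <= X -> Rpower X p < eps.
Proof.
  intros Hp eps He. exists (exp (ln (eps / 2) / p)). intros X HX H1.
  unfold Rpower.
  assert (Hl : ln (eps / 2) / p < ln X).
  { rewrite <- (ln_exp (ln (eps / 2) / p)). apply ln_increasing; auto. apply exp_pos. }
  assert (p * ln X < ln (eps / 2)).
  { apply Rmult_lt_compat_l with (r := - p) in Hl; [|lra].
    replace (- p * (ln (eps / 2) / p)) with (- ln (eps / 2)) in Hl by (field; lra). lra. }
  apply exp_increasing in H. rewrite exp_ln in H by lra. lra.
Qed.

Lemma inv_lt_of u eps : 0 < u -> 0 < eps -> / eps < u -> / u < eps.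
Proof.
  intros Hu He H. rewrite <- (Rinv_inv eps). apply Rinv_lt_contravar; auto.
  apply Rmult_lt_0_compat; auto. apply Rinv_0_lt_compat; auto.
Qed.

Lemma Phi_lim_big eps : 0 < eps -> exists M, forall t, M < t -> Rabs (Phi k t - / k) < eps.
Proof.
  intros He. exists (Rmax 1 (/ eps / (k * k))). intros t Ht.
  pose proof (Rmax_l 1 (/ eps / (k * k))). pose proof (Rmax_r 1 (/ eps / (k * k))).
  eapply Rle_lt_trans; [apply Phi_inf; lra|].
  apply inv_lt_of; auto. nra.
  assert (Hkk : 0 < k * k) by nra.
  assert (/ eps / (k * k) * (k * k) = / eps) by (field; lra).
  assert (/ eps / (k * k) < t) by lra.
  apply Rmult_lt_compat_r with (r := k * k) in H2; auto. nra.
Qed.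

Lemma Gk_lim_of_a l : lim_a a b G0f l -> exists v, lim_a a b Gk (Fin v).
Proof.
  intros Hl. destruct l as [g| |].
  - exists (Phi k g). apply (lim_a_comp a b x0 Hx0 G0f (Phi k) g Hl). apply Phi_cont; auto.
  - exists (/ k). intros eps He. destruct (Phi_lim_big eps He) as [M HM].
    apply (near_a_imp a b x0 Hx0 (fun x => M < G0f x)); [|apply Hl]. intros x _ H. apply HM; auto.
  - exists (- / k). intros eps He. destruct (Phi_lim_big eps He) as [M HM].
    apply (near_a_imp a b x0 Hx0 (fun x => G0f x < - M)); [|apply Hl]. intros x _ H.
    unfold Gk. replace (G0f x) with (- - G0f x) by ring. rewrite Phi_odd.
    replace (- Phi k (- G0f x) - - / k) with (- (Phi k (- G0f x) - / k)) by ring. rewrite Rabs_Ropp.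
    apply HM; lra.
Qed.
Lemma Gk_lim_of_b l : lim_b a b G0f l -> exists v, lim_b a b Gk (Fin v).
Proof.
  intros Hl. destruct l as [g| |].
  - exists (Phi k g). apply (lim_b_comp a b x0 Hx0 G0f (Phi k) g Hl). apply Phi_cont; auto.
  - exists (/ k). intros eps He. destruct (Phi_lim_big eps He) as [M HM].
    apply (near_b_imp a b x0 Hx0 (fun x => M < G0f x)); [|apply Hl]. intros x _ H. apply HM; auto.
  - exists (- / k). intros eps He. destruct (Phi_lim_big eps He) as [M HM].
    apply (near_b_imp a b x0 Hx0 (fun x => G0f x < - M)); [|apply Hl]. intros x _ H.
    unfold Gk. replace (G0f x) with (- - G0f x) by ring. rewrite Phi_odd.
    replace (- Phi k (- G0f x) - - / k) with (- (Phi k (- G0f x) - / k)) by ring. rewrite Rabs_Ropp.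
    apply HM; lra.
Qed.

Lemma small_a' (Q : R -> Prop) F (g : R -> R) : near_a a b Q -> (forall M, near_a a b (fun x => M < g x)) ->
  (forall eps, 0 < eps -> exists M, forall x, I x -> Q x -> M < g x -> Rabs (F x) < eps) -> lim_a a b F (Fin 0).
Proof.
  intros HQ Hg H eps He. destruct (H eps He) as [M HM].
  apply (near_a_imp a b x0 Hx0 (fun x => Q x /\ M < g x)); [|apply (near_a_and a b x0 Hx0); auto].
  intros x Hx [H1 H2]. rewrite Rminus_0_r; apply HM; auto.
Qed.
Lemma small_b' (Q : R -> Prop) F (g : R -> R) : near_b a b Q -> (forall M, near_b a b (fun x => M < g x)) ->
  (forall eps, 0 < eps -> exists M, forall x, I x -> Q x -> M < g x -> Rabs (F x) < eps) -> lim_b a b F (Fin 0).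
Proof.
  intros HQ Hg H eps He. destruct (H eps He) as [M HM].
  apply (near_b_imp a b x0 Hx0 (fun x => Q x /\ M < g x)); [|apply (near_b_and a b x0 Hx0); auto].
  intros x Hx [H1 H2]. rewrite Rminus_0_r; apply HM; auto.
Qed.

Lemma Phi1_small eps : 0 < eps -> exists M, forall x, M < XX x -> Rabs (Phi1 k (G0f x)) < eps.
Proof.
  intros He. destruct (inv_small (KK k) (Rlt_le _ _ KK_pos) eps He) as [M HM].
  exists M. intros x Hx. pose proof (Phi1_le x). pose proof (XX_ge1 x).
  assert (KK k / XX x ^ 2 <= KK k / XX x).
  { unfold Rdiv. apply Rmult_le_compat_l. apply Rlt_le, KK_pos. apply Rinv_le_contravar. lra.
    simpl; nra. }
  specialize (HM (XX x) Hx H0). lra.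
Qed.

Lemma Rp_split X e : 0 < X -> Rpower X (2 + e) = X ^ 3 * Rpower X (e - 1).
Proof.
  intros HX. replace (2 + e) with (INR 3 + (e - 1)) by (simpl; ring).
  rewrite Rpower_plus, Rpower_pow by lra. reflexivity.
Qed.

Lemma T2_small L e : 0 < e < 1 -> forall x, (sigma x * D1 x) ^ 2 <= L * Rpower (XX x) (2 + e) ->
  Rabs (/ 2 * Phi2 k (G0f x) * (sigma x * D1 x) ^ 2) <= KK k * Rabs L * Rpower (XX x) (e - 1).
Proof.
  intros He x Hs. pose proof (Phi2_le x). pose proof (XX_ge1 x). pose proof KK_pos.
  rewrite Rp_split in Hs by lra. set (X := XX x) in *. set (R1 := Rpower X (e - 1)) in *.
  assert (0 < R1) by (apply Rp_pos; lra). assert (0 < X ^ 3) by (apply pow_lt; lra).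
  assert (HS0 : 0 <= (sigma x * D1 x) ^ 2) by apply pow2_ge_0.
  assert (Hs2 : (sigma x * D1 x) ^ 2 <= Rabs L * (X ^ 3 * R1)).
  { pose proof (Rle_abs L). apply Rle_trans with (L * (X ^ 3 * R1)); auto. apply Rmult_le_compat_r; nra. }
  rewrite !Rabs_mult, (Rabs_right (/ 2)), (Rabs_right ((sigma x * D1 x) ^ 2)) by lra.
  apply Rle_trans with (/ 2 * (KK k / X ^ 3) * (Rabs L * (X ^ 3 * R1))).
  - apply Rmult_le_compat; auto. apply Rmult_le_pos; [lra|apply Rabs_pos].
    apply Rmult_le_compat_l; lra.
  - replace (/ 2 * (KK k / X ^ 3) * (Rabs L * (X ^ 3 * R1))) with (/ 2 * (KK k * Rabs L * R1)) by (field; lra).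
    pose proof (Rabs_pos L). assert (0 <= KK k * Rabs L * R1) by (apply Rmult_le_pos; [nra|lra]). lra.
Qed.

Lemma T2_lim_a l L e y1 : lim_a a b G0f l -> (l = PInf \/ l = NInf) -> 0 < e < 1 -> I y1 ->
  (forall x, I x -> x < y1 -> (sigma x * D1 x) ^ 2 <= L * Rpower (XX x) (2 + e)) ->
  lim_a a b (fun x => / 2 * Phi2 k (G0f x) * (sigma x * D1 x) ^ 2) (Fin 0).
Proof.
  intros Hl Hinf He Hy1 HL.
  apply (small_a' (fun x => x < y1) _ XX); [exists y1; auto|apply (XX_big_a l Hl Hinf)|].
  intros eps Heps. pose proof KK_pos.
  set (c := KK k * Rabs L + 1). assert (Hc : 0 < c) by (unfold c; pose proof (Rabs_pos L); nra).
  destruct (Rp_small (e - 1) ltac:(lra) (eps / c) ltac:(apply Rdiv_lt_0_compat; lra)) as [M HM].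
  exists M. intros x Hx Hxy HMx. eapply Rle_lt_trans; [apply (T2_small L e He x (HL x Hx Hxy))|].
  specialize (HM (XX x) HMx (XX_ge1 x)). pose proof (Rabs_pos L).
  assert (0 < Rpower (XX x) (e - 1)) by (apply Rp_pos; pose proof (XX_ge1 x); lra).
  apply Rle_lt_trans with (c * Rpower (XX x) (e - 1)). unfold c; nra.
  apply Rmult_lt_compat_l with (r := c) in HM; auto. replace (c * (eps / c)) with eps in HM by (field; lra). lra.
Qed.
Lemma T2_lim_b l L e z1 : lim_b a b G0f l -> (l = PInf \/ l = NInf) -> 0 < e < 1 -> I z1 ->
  (forall x, I x -> z1 < x -> (sigma x * D1 x) ^ 2 <= L * Rpower (XX x) (2 + e)) ->
  lim_b a b (fun x => / 2 * Phi2 k (G0f x) * (sigma x * D1 x) ^ 2) (Fin 0).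
Proof.
  intros Hl Hinf He Hz1 HL.
  apply (small_b' (fun x => z1 < x) _ XX); [exists z1; auto|apply (XX_big_b l Hl Hinf)|].
  intros eps Heps. pose proof KK_pos.
  set (c := KK k * Rabs L + 1). assert (Hc : 0 < c) by (unfold c; pose proof (Rabs_pos L); nra).
  destruct (Rp_small (e - 1) ltac:(lra) (eps / c) ltac:(apply Rdiv_lt_0_compat; lra)) as [M HM].
  exists M. intros x Hx Hxy HMx. eapply Rle_lt_trans; [apply (T2_small L e He x (HL x Hx Hxy))|].
  specialize (HM (XX x) HMx (XX_ge1 x)). pose proof (Rabs_pos L).
  assert (0 < Rpower (XX x) (e - 1)) by (apply Rp_pos; pose proof (XX_ge1 x); lra).
  apply Rle_lt_trans with (c * Rpower (XX x) (e - 1)). unfold c; nra.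
  apply Rmult_lt_compat_l with (r := c) in HM; auto. replace (c * (eps / c)) with eps in HM by (field; lra). lra.
Qed.

Lemma Phi1_lim0_a l : lim_a a b G0f l -> (l = PInf \/ l = NInf) -> lim_a a b (fun x => Phi1 k (G0f x)) (Fin 0).
Proof.
  intros Hl Hinf. apply (small_a' (fun _ => True) _ XX); [apply filter_true|apply (XX_big_a l Hl Hinf)|].
  intros eps He. destruct (Phi1_small eps He) as [M HM]. exists M; auto.
Qed.
Lemma Phi1_lim0_b l : lim_b a b G0f l -> (l = PInf \/ l = NInf) -> lim_b a b (fun x => Phi1 k (G0f x)) (Fin 0).
Proof.
  intros Hl Hinf. apply (small_b' (fun _ => True) _ XX); [apply filter_true|apply (XX_big_b l Hl Hinf)|].
  intros eps He. destruct (Phi1_small eps He) as [M HM]. exists M; auto.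
Qed.

Lemma AGk_shape x : AGk x = Phi1 k (G0f x) * (Fs + -1 * c0 x) + (/ 2 * Phi2 k (G0f x)) * ((sigma x * D1 x) * (sigma x * D1 x)).
Proof. unfold AGk; ring. Qed.

Lemma sD1_lim_a r : lim_a a b (fun x => sigma x * Dv G0f x) (Fin r) -> lim_a a b (fun x => sigma x * D1 x) (Fin r).
Proof.
  intros Hr. apply (lim_a_ext a b x0 Hx0 (fun x => sigma x * Dv G0f x)); auto.
  intros x Hx. rewrite Dv_G0 by auto. reflexivity.
Qed.
Lemma sD1_lim_b r : lim_b a b (fun x => sigma x * Dv G0f x) (Fin r) -> lim_b a b (fun x => sigma x * D1 x) (Fin r).
Proof.
  intros Hr. apply (lim_b_ext a b x0 Hx0 (fun x => sigma x * Dv G0f x)); auto.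
  intros x Hx. rewrite Dv_G0 by auto. reflexivity.
Qed.

Lemma AG_fin_a g r c : lim_a a b G0f (Fin g) -> lim_a a b (fun x => sigma x * D1 x) (Fin r) ->
  lim_a a b c0 (Fin c) -> exists v, lim_a a b AGk (Fin v).
Proof.
  intros Hl Hr Hlc. eexists.
  apply (lim_a_ext a b x0 Hx0 (fun x => Phi1 k (G0f x) * (Fs + -1 * c0 x) + (/ 2 * Phi2 k (G0f x)) * ((sigma x * D1 x) * (sigma x * D1 x)))).
  { intros; symmetry; apply AGk_shape. }
  apply (lim_a_plus a b x0 Hx0); apply (lim_a_mult a b x0 Hx0).
  + apply (lim_a_comp a b x0 Hx0 G0f (Phi1 k) g Hl). apply Phi1_cont; auto.
  + apply (lim_a_plus a b x0 Hx0). apply (lim_a_const a b x0 Hx0).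
    apply (lim_a_mult a b x0 Hx0); [apply (lim_a_const a b x0 Hx0)|exact Hlc].
  + apply (lim_a_mult a b x0 Hx0); [apply (lim_a_const a b x0 Hx0)|].
    apply (lim_a_comp a b x0 Hx0 G0f (Phi2 k) g Hl). apply Phi2_cont; auto.
  + apply (lim_a_mult a b x0 Hx0); exact Hr.
Qed.

Lemma AG_fin_b g r c : lim_b a b G0f (Fin g) -> lim_b a b (fun x => sigma x * D1 x) (Fin r) ->
  lim_b a b c0 (Fin c) -> exists v, lim_b a b AGk (Fin v).
Proof.
  intros Hl Hr Hlc. eexists.
  apply (lim_b_ext a b x0 Hx0 (fun x => Phi1 k (G0f x) * (Fs + -1 * c0 x) + (/ 2 * Phi2 k (G0f x)) * ((sigma x * D1 x) * (sigma x * D1 x)))).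
  { intros; symmetry; apply AGk_shape. }
  apply (lim_b_plus a b x0 Hx0); apply (lim_b_mult a b x0 Hx0).
  + apply (lim_b_comp a b x0 Hx0 G0f (Phi1 k) g Hl). apply Phi1_cont; auto.
  + apply (lim_b_plus a b x0 Hx0). apply (lim_b_const a b x0 Hx0).
    apply (lim_b_mult a b x0 Hx0); [apply (lim_b_const a b x0 Hx0)|exact Hlc].
  + apply (lim_b_mult a b x0 Hx0); [apply (lim_b_const a b x0 Hx0)|].
    apply (lim_b_comp a b x0 Hx0 G0f (Phi2 k) g Hl). apply Phi2_cont; auto.
  + apply (lim_b_mult a b x0 Hx0); exact Hr.
Qed.

Lemma AG_inf_a l c L e y1 : lim_a a b G0f l -> (l = PInf \/ l = NInf) -> lim_a a b c0 (Fin c) ->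
  0 < e < 1 -> I y1 -> (forall x, I x -> x < y1 -> (sigma x * D1 x) ^ 2 <= L * Rpower (XX x) (2 + e)) ->
  lim_a a b AGk (Fin 0).
Proof.
  intros Hl Hinf Hlc He Hy1 HL.
  replace 0 with (0 * (Fs + -1 * c) + 0) by ring.
  apply (lim_a_ext a b x0 Hx0 (fun x => Phi1 k (G0f x) * (Fs + -1 * c0 x) + / 2 * Phi2 k (G0f x) * (sigma x * D1 x) ^ 2)).
  { intros; unfold AGk; ring. }
  apply (lim_a_plus a b x0 Hx0).
  - apply (lim_a_mult a b x0 Hx0). apply (Phi1_lim0_a l Hl Hinf).
    apply (lim_a_plus a b x0 Hx0). apply (lim_a_const a b x0 Hx0).
    apply (lim_a_mult a b x0 Hx0); [apply (lim_a_const a b x0 Hx0)|exact Hlc].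
  - apply (T2_lim_a l L e y1); auto.
Qed.
Lemma AG_inf_b l c L e z1 : lim_b a b G0f l -> (l = PInf \/ l = NInf) -> lim_b a b c0 (Fin c) ->
  0 < e < 1 -> I z1 -> (forall x, I x -> z1 < x -> (sigma x * D1 x) ^ 2 <= L * Rpower (XX x) (2 + e)) ->
  lim_b a b AGk (Fin 0).
Proof.
  intros Hl Hinf Hlc He Hz1 HL.
  replace 0 with (0 * (Fs + -1 * c) + 0) by ring.
  apply (lim_b_ext a b x0 Hx0 (fun x => Phi1 k (G0f x) * (Fs + -1 * c0 x) + / 2 * Phi2 k (G0f x) * (sigma x * D1 x) ^ 2)).
  { intros; unfold AGk; ring. }
  apply (lim_b_plus a b x0 Hx0).
  - apply (lim_b_mult a b x0 Hx0). apply (Phi1_lim0_b l Hl Hinf).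
    apply (lim_b_plus a b x0 Hx0). apply (lim_b_const a b x0 Hx0).
    apply (lim_b_mult a b x0 Hx0); [apply (lim_b_const a b x0 Hx0)|exact Hlc].
  - apply (T2_lim_b l L e z1); auto.
Qed.

Lemma AG_lim_a : isfin (c0A a b mu sigma x0 c0) -> exists v, lim_a a b (Agen mu sigma Gk) (Fin v).
Proof.
  intros Hfin.
  destruct c0a_info as [[Hp _]|[c [Hc [Hlc _]]]].
  { destruct Hfin as [r Hr]. rewrite Hp in Hr; discriminate. }
  destruct G0_lim_a as [l [Hl _]].
  enough (H : exists v, lim_a a b AGk (Fin v)).
  { destruct H as [v Hv]. exists v. apply (lim_a_ext a b x0 Hx0 AGk); auto. intros; symmetry; apply Agen_Gk; auto. }
  destruct HD as [[L [y1 [Hy1 [_ HF]]]] [_ [Dca _]]].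
  destruct l as [g| |].
  - assert (Hne : Fin g <> NInf) by discriminate.
    destruct (Dca (or_introl (ex_intro _ (Fin g) (conj Hl Hne)))) as [r Hr].
    apply (AG_fin_a g r c Hl (sD1_lim_a r Hr) Hlc).
  - destruct (HF Hfin) as [e [He HF2]]. exists 0. apply (AG_inf_a PInf c (Rabs L) e y1 Hl (or_introl eq_refl) Hlc He Hy1).
    intros x Hx Hxy. specialize (HF2 x Hx Hxy). rewrite Dv_G0 in HF2 by auto.
    apply div_le_inv in HF2; auto. apply Rp_pos. pose proof (XX_ge1 x). unfold XX in *; lra.
  - destruct (HF Hfin) as [e [He HF2]]. exists 0. apply (AG_inf_a NInf c (Rabs L) e y1 Hl (or_intror eq_refl) Hlc He Hy1).
    intros x Hx Hxy. specialize (HF2 x Hx Hxy). rewrite Dv_G0 in HF2 by auto.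
    apply div_le_inv in HF2; auto. apply Rp_pos. pose proof (XX_ge1 x). unfold XX in *; lra.
Qed.

Lemma AG_lim_b : isfin (c0B a b mu sigma x0 c0) -> exists v, lim_b a b (Agen mu sigma Gk) (Fin v).
Proof.
  intros Hfin.
  destruct c0b_info as [[Hp _]|[c [Hc [Hlc _]]]].
  { destruct Hfin as [r Hr]. rewrite Hp in Hr; discriminate. }
  destruct G0_lim_b as [l Hl].
  enough (H : exists v, lim_b a b AGk (Fin v)).
  { destruct H as [v Hv]. exists v. apply (lim_b_ext a b x0 Hx0 AGk); auto. intros; symmetry; apply Agen_Gk; auto. }
  destruct HD as [_ [[L [z1 [Hz1 [_ HF]]]] [_ Dcb]]].
  assert (Hbd : forall e, (forall x, I x -> z1 < x ->
       (sigma x * Dv G0f x) ^ 2 / Rpower (1 + Rabs (G0f x)) (2 + e) +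
       (sigma x * Dv G0f x) ^ 2 / ((1 + Rabs (G0f x)) * (1 + c0 x)) <= L) ->
     forall x, I x -> z1 < x -> (sigma x * D1 x) ^ 2 <= Rabs L * Rpower (XX x) (2 + e)).
  { intros e HF2 x Hx Hxy. specialize (HF2 x Hx Hxy). rewrite !Dv_G0 in HF2 by auto.
    pose proof (XX_ge1 x). pose proof (c0_pos x Hx).
    assert (0 <= (sigma x * D1 x) ^ 2 / ((1 + Rabs (G0f x)) * (1 + c0 x))).
    { apply Rdiv_le_0_compat. apply pow2_ge_0. unfold XX in *; nra. }
    apply div_le_inv. apply Rp_pos. lra. fold (XX x) in *. lra. }
  destruct l as [g| |].
  - assert (Hne : Fin g <> PInf) by discriminate.
    destruct (Dcb (ex_intro _ (Fin g) (conj Hl Hne))) as [r Hr].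
    apply (AG_fin_b g r c Hl (sD1_lim_b r Hr) Hlc).
  - destruct (HF Hfin) as [e [He HF2]]. exists 0.
    apply (AG_inf_b PInf c (Rabs L) e z1 Hl (or_introl eq_refl) Hlc He Hz1 (Hbd e HF2)).
  - destruct (HF Hfin) as [e [He HF2]]. exists 0.
    apply (AG_inf_b NInf c (Rabs L) e z1 Hl (or_intror eq_refl) Hlc He Hz1 (Hbd e HF2)).
Qed.

Lemma sticky_lim : (sticky_a a b mu sigma x0 stickya /\ isfin (c0A a b mu sigma x0 c0)) ->
  exists v, lim_a a b (fun x => sigma x * Dv Gk x) (Fin v).
Proof.
  intros Hs. destruct HD as [_ [_ [Dca _]]]. destruct (Dca (or_intror Hs)) as [r Hr].
  pose proof (sD1_lim_a r Hr) as Hr'.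
  destruct G0_lim_a as [l [Hl _]].
  assert (E : forall x, I x -> Phi1 k (G0f x) * (sigma x * D1 x) = sigma x * Dv Gk x).
  { intros x Hx. rewrite Dv_Gk by auto. unfold E1; ring. }
  destruct l as [g| |].
  - exists (Phi1 k g * r). apply (lim_a_ext a b x0 Hx0 _ _ _ E).
    apply (lim_a_mult a b x0 Hx0); auto. apply (lim_a_comp a b x0 Hx0 G0f (Phi1 k) g Hl). apply Phi1_cont; auto.
  - exists (0 * r). apply (lim_a_ext a b x0 Hx0 _ _ _ E).
    apply (lim_a_mult a b x0 Hx0); auto. apply (Phi1_lim0_a PInf Hl (or_introl eq_refl)).
  - exists (0 * r). apply (lim_a_ext a b x0 Hx0 _ _ _ E).
    apply (lim_a_mult a b x0 Hx0); auto. apply (Phi1_lim0_a NInf Hl (or_intror eq_refl)).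
Qed.

Lemma valE_I f x : I x -> valE a b f x = f x.
Proof. intros Hx. unfold valE. destruct excluded_middle_informative; [reflexivity|contradiction]. Qed.
Lemma valE_a f r : a = Fin r -> valE a b f r = real_of (limval_a a b f).
Proof.
  intros Ea. unfold valE. destruct excluded_middle_informative as [Hi|_].
  - exfalso. destruct Hi as [H _]. rewrite Ea in H. simpl in H. lra.
  - destruct excluded_middle_informative; [reflexivity|contradiction].
Qed.

Lemma arb_small A B C : 0 <= C -> (forall th, 0 < th -> A <= B + C * th) -> A <= B.
Proof.
  intros HC0 H. destruct (Rle_dec A B) as [|Hn]; auto. exfalso.
  assert (Hd : 0 < A - B) by lra. specialize (H ((A - B) / (2 * (C + 1))) ltac:(apply Rdiv_lt_0_compat; lra)).
  assert (C * ((A - B) / (2 * (C + 1))) <= (A - B) / 2).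
  { unfold Rdiv. rewrite Rinv_mult. 
    assert (C * / (C + 1) <= 1) by (apply Rmult_le_reg_r with (C + 1); [lra|]; rewrite Rmult_assoc, Rinv_l by lra; lra).
    assert (0 <= (A - B) * / 2) by lra. pose proof (Rinv_0_lt_compat (C+1) ltac:(lra)). nra. }
  lra.
Qed.

Lemma refl_deriv : reflecting_a a b mu sigma x0 stickya ->
  exists d, rderiv (inEbar a b) (valE a b Gk) (real_of a) d.
Proof.
  intros Hrf. pose proof Hrf as [Hreg _].
  assert (Hat : attainable_a a b mu sigma x0) by (left; auto).
  destruct (attain_fin Hat) as [r Er].
  destruct G0_lim_a as [l [Hl Hlf]]. destruct (Hlf Hat) as [g ->].
  destruct HA as [_ [_ [HA3 _]]]. destruct (HA3 Hrf) as [rA HrA].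
  destruct HB as [_ [_ [_ [_ [_ [_ [_ [HB8 _]]]]]]]]. destruct (HB8 Hrf) as [rB HrB].
  set (dl := 2 * rB - 2 * Fs * rA).
  assert (HD1 : lim_a a b D1 (Fin dl)).
  { apply (lim_a_ext a b x0 Hx0 (fun x => 2 * (sd x * real_of (IntB a b fc x)) + (- 2 * Fs) * (sd x * real_of (IntB a b md x)))).
    - intros x Hx. rewrite D1_W by auto. unfold Tf. ring.
    - unfold dl. replace (2 * rB - 2 * Fs * rA) with (2 * rB + (- 2 * Fs) * rA) by ring.
      apply (lim_a_plus a b x0 Hx0); apply (lim_a_mult a b x0 Hx0); auto; apply (lim_a_const a b x0 Hx0). }
  set (e := Phi1 k g * dl).
  assert (HE1 : lim_a a b E1 (Fin e)).
  { apply (lim_a_mult a b x0 Hx0); auto. apply (lim_a_comp a b x0 Hx0 G0f (Phi1 k) g Hl). apply Phi1_cont; auto. }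
  assert (HGk : lim_a a b Gk (Fin (Phi k g))).
  { apply (lim_a_comp a b x0 Hx0 G0f (Phi k) g Hl). apply Phi_cont; auto. }
  assert (Hva : valE a b Gk r = Phi k g).
  { rewrite valE_a by auto. rewrite (limval_a_eq a b x0 Hx0 _ _ HGk). reflexivity. }
  exists e. replace (real_of a) with r by (rewrite Er; reflexivity). intros eps Heps.
  destruct (HE1 (eps / 2) ltac:(lra)) as [y [Hy HyE]].
  assert (Hry : r < y) by (destruct Hy as [H _]; rewrite Er in H; exact H).
  exists (y - r). split; [lra|]. intros h Hh0 Hhd HE.
  assert (Hhp : 0 < h).
  { destruct HE as [HE _]. rewrite Er in HE. destruct HE as [HE|HE]; simpl in HE.
    - lra.
    - injection HE; intros; lra. }
  apply Rabs_def2 in Hhd as [Hhd _].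
  assert (Irh : I (r + h)) by (apply (inI_low _ y); [exact Hy | rewrite Er; simpl; lra | lra]).
  rewrite valE_I by auto. rewrite Hva.
  assert (Key : Rabs (Gk (r + h) - Phi k g - e * h) <= eps / 2 * h).
  { apply (arb_small _ _ (1 + Rabs e)); [pose proof (Rabs_pos e); lra|]. intros th Hth.
    destruct (HGk th Hth) as [y' [Hy' Hy'G]].
    assert (Hry' : r < y') by (destruct Hy' as [H _]; rewrite Er in H; exact H).
    set (eta := Rmin th (Rmin h (y' - r)) / 2).
    assert (Heta : 0 < eta /\ eta <= th /\ eta < h /\ r + eta < y').
    { unfold eta. pose proof (Rmin_l th (Rmin h (y' - r))). pose proof (Rmin_r th (Rmin h (y' - r))).
      pose proof (Rmin_l h (y' - r)). pose proof (Rmin_r h (y' - r)).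
      assert (0 < Rmin th (Rmin h (y' - r))) by (repeat apply Rmin_glb_lt; lra). lra. }
    destruct Heta as [He1 [He2 [He3 He4]]].
    assert (Ire : I (r + eta)) by (apply (inI_low _ (r + h)); [exact Irh | rewrite Er; simpl; lra | lra]).
    destruct (mvt_I a b Gk E1 (r + eta) (r + h)) as [c [Hc Emvt]]; auto; [apply Gk_d|lra|].
    assert (Ic : I c) by (apply (inI_between a b (r + eta) c (r + h)); auto; lra).
    specialize (HyE c Ic ltac:(lra)). specialize (Hy'G (r + eta) Ire ltac:(lra)).
    assert (Rabs (Gk (r + h) - Gk (r + eta) - e * (h - eta)) <= eps / 2 * (h - eta)).
    { replace (Gk (r + h) - Gk (r + eta) - e * (h - eta)) with ((E1 c - e) * (h - eta)) by (rewrite Emvt; ring).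
      rewrite Rabs_mult, (Rabs_right (h - eta)) by lra. apply Rmult_le_compat_r; lra. }
    replace (Gk (r + h) - Phi k g - e * h) with
      ((Gk (r + h) - Gk (r + eta) - e * (h - eta)) + (Gk (r + eta) - Phi k g) + (- (e * eta))) by ring.
    eapply Rle_trans; [apply Rabs_triang|]. eapply Rle_trans; [apply Rplus_le_compat_r, Rabs_triang|].
    rewrite Rabs_Ropp, Rabs_mult, (Rabs_right eta) by lra.
    pose proof (Rabs_pos e). nra. }
  replace ((Gk (r + h) - Phi k g) / h - e) with ((Gk (r + h) - Phi k g - e * h) / h) by (field; lra).
  rewrite Rabs_div by lra. rewrite (Rabs_right h) by lra.
  apply Rle_lt_trans with (eps / 2 * h / h).
  - unfold Rdiv at 1 3. apply Rmult_le_compat_r; [apply Rlt_le, Rinv_0_lt_compat; lra|]. exact Key.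
  - replace (eps / 2 * h / h) with (eps / 2) by (field; lra). lra.
Qed.

Lemma Gk_classD : in_classD a b mu sigma x0 stickya c0 Gk.
Proof.
  unfold in_classD. split; [|split; [|split]].
  - intros x Hx. rewrite DvDv_Gk, Dv_Gk by auto. split; [apply Gk_d; auto|split].
    + apply (deriv_loc _ E1); [|apply E1_d; auto].
      destruct (near_I x Hx) as [d [Hd H]]. exists d; split; auto. intros z Hz. apply Dv_Gk, H, Hz.
    + apply DvDv_cont; auto.
  - intros r _. destruct G0_lim_a as [l [Hl _]]. apply (Gk_lim_of_a l Hl).
  - intros r _. destruct G0_lim_b as [l Hl]. apply (Gk_lim_of_b l Hl).
  - destruct Gk_bound_sig as [B1 HB1]. destruct Gk_bound_A as [B2 HB2].
    exists (/ k + Rabs B1 + Rabs B2).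
    assert (Hk1 : 0 < / k) by (apply Rinv_0_lt_compat; lra).
    pose proof (Rabs_pos B1). pose proof (Rabs_pos B2). pose proof (Rle_abs B1). pose proof (Rle_abs B2).
    split; [|split; [|split; [|split; [|split; [|split]]]]].
    + intros x Hx. pose proof (Phi_bound k Hk (G0f x)). unfold Gk. lra.
    + intros x Hx. specialize (HB1 x Hx). pose proof (c0_pos x Hx).
      eapply Rle_trans; [exact HB1|]. apply Rmult_le_compat_r; lra.
    + intros x Hx. specialize (HB2 x Hx). lra.
    + apply AG_lim_a.
    + apply AG_lim_b.
    + apply refl_deriv.
    + apply sticky_lim.
Qed.

End Main.


Theorem lemma5p8
  (a b : ereal) (mu sigma : R -> R) (x0 : R) (stickya : bool)
  (c0 : R -> R) (c1 : R -> R -> ereal) (Fs : R)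
  (Hab : ereal_lt a b)
  (Hx0 : inI a b x0)
  (Hmu : forall x, inI a b x -> continuity_pt mu x)
  (Hsig : forall x, inI a b x -> continuity_pt sigma x)
  (Hsig0 : forall x, inI a b x -> sigma x <> 0)
  (HA : Condition_A a b mu sigma x0 stickya)
  (HB : Condition_B a b mu sigma x0 stickya c0 c1)
  (HFs : F0_inf a b mu sigma x0 c0 c1 (Fin Fs))
  (HC : Condition_C a b mu sigma x0 c0 c1)
  (HD : Condition_D a b mu sigma x0 stickya c0 Fs) :
  forall n : nat, (1 <= n)%nat ->
    in_classD a b mu sigma x0 stickya c0 (Gn a b mu sigma x0 c0 Fs n).
Proof.
  intros n Hn.
  assert (Hk : 0 < / INR n <= 1).
  { apply le_INR in Hn. simpl in Hn. split. apply Rinv_0_lt_compat; lra.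
    rewrite <- Rinv_1. apply Rinv_le_contravar; lra. }
  exact (Gk_classD a b mu sigma x0 stickya c0 c1 Fs Hx0 Hmu Hsig Hsig0 HA HB HFs HC HD (/ INR n) Hk).
Qed.
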